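(* There exist a constant $c>0$ and a sequence of graphs $G_1,G_2,\dots$, where $G_m$ has $n_m$ vertices and $n_m\to\infty$, such that the number of copies of $C_5$ in $G_m$ is $o(n_m^{2.442})$ as $m\to\infty$, and for every $m$, deleting fewer than $c\, n_m^{3/2}$ edges from $G_m$ never yields a triangle-free graph.
   Context: $C_5$ is the cycle on $5$ vertices; a copy of $C_5$ is a subgraph isomorphic to $C_5$. (Informally: there exist $n$-vertex graphs with $o(n^{2.442})$ copies of $C_5$ that cannot be made triangle-free by deleting $o(n^{3/2})$ edges.) *)

(* Defs.v *)
From mathcomp Require Import all_boot.
From Stdlib Require Import Reals.
Set Implicit Arguments. Unset Strict Implicit. Unset Printing Implicit Defensive.

Definition simple_graph (n : nat) (E : {set {set 'I_n}}) : Prop :=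
  forall e, e \in E -> #|e| = 2.

Definition C5_edges (n : nat) (f : 'I_5 -> 'I_n) : {set {set 'I_n}} :=
  [set [set f i; f (ordS i)] | i : 'I_5].

Definition is_C5_copy (n : nat) (S : {set {set 'I_n}}) : bool :=
  [exists f : {ffun 'I_5 -> 'I_n}, injectiveb f && (S == C5_edges f)].

Definition num_C5 (n : nat) (E : {set {set 'I_n}}) : nat :=
  #|[set S in powerset E | is_C5_copy S]|.

Definition has_triangle (n : nat) (F : {set {set 'I_n}}) : Prop :=
  exists x y z : 'I_n, [/\ x != y, y != z, x != z &
    [/\ [set x; y] \in F, [set y; z] \in F & [set x; z] \in F]].

Definition triangle_free (n : nat) (F : {set {set 'I_n}}) : Prop :=
  ~ has_triangle F.

(* Main.v *)
Require Import Defs.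
From mathcomp Require Import all_boot.
From Stdlib Require Import Reals.
From Stdlib Require NArith.
Set Implicit Arguments. Unset Strict Implicit. Unset Printing Implicit Defensive.

(* Construction: tensor products of the collinearity graph of the generalized
   hexagon GH(2,8) (819 vertices, 2457 edge-disjoint triangles, no C5) and of K3. *)

Module GHD.
Import NArith.
Local Open Scope N_scope.

Definition ADJ : seq (seq N) := [::
[::1;2;10;12;63;64;65;66;67;68;69;70;71;72;73;74;75;76];
[::0;2;4;7;147;148;149;150;151;152;153;154;155;156;157;158;159;160];
[::0;1;16;20;231;232;233;234;235;236;237;238;239;240;241;242;243;244];
[::4;5;9;15;21;22;23;24;25;26;27;28;29;30;31;32;33;34];
[::1;3;5;7;161;162;165;166;169;170;173;174;177;178;181;182;185;186];
[::3;4;13;19;189;190;191;192;193;194;195;196;197;198;199;200;201;202];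
[::7;8;11;18;105;106;107;108;109;110;111;112;113;114;115;116;117;118];
[::1;4;6;8;163;164;167;168;171;172;175;176;179;180;183;184;187;188];
[::6;7;14;17;273;274;275;276;277;278;279;280;281;282;283;284;285;286];
[::3;10;11;15;35;36;39;40;43;44;47;48;51;52;55;56;59;60];
[::0;9;11;12;77;78;81;82;85;86;89;90;93;94;97;98;101;102];
[::6;9;10;18;119;120;123;124;127;128;131;132;135;136;139;140;143;144];
[::0;10;13;14;79;80;83;84;87;88;91;92;95;96;99;100;103;104];
[::5;12;14;19;203;204;207;208;211;212;215;216;219;220;223;224;227;228];
[::8;12;13;17;287;288;291;292;295;296;299;300;303;304;307;308;311;312];
[::3;9;16;17;37;38;41;42;45;46;49;50;53;54;57;58;61;62];
[::2;15;17;20;245;246;249;250;253;254;257;258;261;262;265;266;269;270];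
[::8;14;15;16;289;290;293;294;297;298;301;302;305;306;309;310;313;314];
[::6;11;19;20;121;122;125;126;129;130;133;134;137;138;141;142;145;146];
[::5;13;18;20;205;206;209;210;213;214;217;218;221;222;225;226;229;230];
[::2;16;18;19;247;248;251;252;255;256;259;260;263;264;267;268;271;272];
[::3;22;63;105;247;287;327;369;435;456;502;544;571;634;659;701;767;788];
[::3;21;80;122;232;273;354;396;411;474;511;553;607;628;686;728;743;806];
[::3;24;65;107;251;291;317;359;438;459;496;538;578;641;666;708;763;784];
[::3;23;84;126;234;275;350;392;399;462;520;562;602;623;672;714;751;814];
[::3;26;67;109;255;295;326;368;421;442;486;528;584;647;664;706;774;795];
[::3;25;88;130;236;277;341;383;409;472;516;558;593;614;682;724;747;810];
[::3;28;69;111;259;299;319;361;434;455;483;525;573;636;671;713;773;794];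
[::3;27;92;134;238;279;337;379;404;467;522;564;588;609;677;719;755;818];
[::3;30;71;113;263;303;334;376;427;448;500;542;568;631;660;702;759;780];
[::3;29;96;138;240;281;352;394;418;481;515;557;604;625;690;732;744;807];
[::3;32;73;115;267;307;321;363;425;446;494;536;585;648;652;694;768;789];
[::3;31;100;142;242;283;345;387;407;470;506;548;597;618;679;721;735;798];
[::3;34;75;117;271;311;330;372;430;451;490;532;581;644;656;698;757;778];
[::3;33;104;146;244;285;342;384;415;478;508;550;596;617;689;731;739;802];
[::9;36;147;203;248;274;333;351;444;468;531;549;576;600;663;681;792;816];
[::9;35;164;205;231;288;375;393;405;423;489;507;621;639;705;723;753;771];
[::15;38;79;106;148;206;318;378;429;477;505;535;592;646;668;716;761;809];
[::15;37;64;121;163;204;336;360;414;450;493;547;583;613;674;710;746;782];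
[::9;40;149;207;252;276;329;356;452;479;541;556;574;589;653;680;797;812];
[::9;39;168;209;233;292;371;398;416;431;499;514;610;637;695;722;749;776];
[::15;42;83;108;150;210;324;381;428;482;509;533;598;649;670;718;765;804];
[::15;41;66;125;167;208;339;366;419;449;491;551;586;619;676;712;741;786];
[::9;44;151;211;256;278;320;338;458;476;539;563;587;599;662;692;779;803];
[::9;43;172;213;235;296;362;380;413;437;497;521;620;650;704;734;740;758];
[::15;46;87;110;152;214;331;385;440;464;512;545;603;630;651;720;772;817];
[::15;45;68;129;171;212;343;373;401;461;503;554;567;624;678;693;754;793];
[::9;48;153;215;260;280;315;348;447;480;543;552;582;591;655;688;790;799];
[::9;47;176;217;237;300;357;390;417;426;501;510;612;645;697;730;736;769];
[::15;50;91;112;154;218;323;389;436;475;513;540;594;642;665;725;764;815];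
[::15;49;70;133;175;216;347;365;412;457;498;555;579;615;683;707;752;785];
[::9;52;155;219;264;282;332;344;443;473;534;546;570;606;669;675;783;813];
[::9;51;180;221;239;304;374;386;410;422;492;504;627;633;711;717;750;762];
[::15;54;95;114;156;222;316;391;424;469;517;529;590;638;657;726;756;801];
[::15;53;72;137;179;220;349;358;406;445;487;559;575;611;684;699;738;777];
[::9;56;157;223;268;284;325;340;460;463;526;565;580;595;658;685;781;808];
[::9;55;184;225;241;308;367;382;400;439;484;523;616;643;700;727;745;760];
[::15;58;99;116;158;226;335;395;432;465;519;537;608;635;654;729;775;811];
[::15;57;74;141;183;224;353;377;402;453;495;561;572;629;687;696;748;796];
[::9;60;159;227;272;286;322;346;454;466;530;560;569;605;667;673;787;805];
[::9;59;188;229;243;312;364;388;403;433;488;518;626;632;709;715;742;766];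
[::15;62;103;118;160;230;328;397;420;471;524;527;601;640;661;733;770;800];
[::15;61;76;145;187;228;355;370;408;441;485;566;577;622;691;703;737;791];
[::0;21;64;105;205;289;335;340;364;471;497;533;556;603;665;688;711;801];
[::0;38;63;121;190;274;384;407;439;454;516;587;623;637;732;755;769;783];
[::0;23;66;107;209;293;328;346;374;469;484;540;552;608;651;692;705;809];
[::0;42;65;125;192;276;394;415;433;443;506;580;609;645;728;747;758;792];
[::0;25;68;109;213;297;318;351;371;482;492;537;565;590;661;673;697;815];
[::0;46;67;129;194;278;392;411;423;452;515;570;618;643;719;739;766;790];
[::0;27;70;111;217;301;316;344;375;477;488;545;563;601;654;685;695;804];
[::0;50;69;133;196;280;396;418;422;444;508;569;614;650;714;735;760;797];
[::0;29;72;113;221;305;331;338;367;465;501;535;549;594;670;680;709;800];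
[::0;54;71;137;198;282;387;409;437;460;522;582;628;639;731;751;776;787];
[::0;31;74;115;225;309;324;356;357;475;489;527;560;592;657;675;704;817];
[::0;58;73;141;200;284;379;399;431;447;511;576;617;632;724;744;762;779];
[::0;33;76;117;229;313;323;348;362;464;499;529;546;598;668;681;700;811];
[::0;62;75;145;202;286;383;404;426;458;520;574;625;633;721;743;771;781];
[::10;78;161;206;245;273;345;370;432;451;503;562;584;649;677;699;764;780];
[::10;77;163;189;247;290;321;397;402;478;512;538;593;619;671;726;752;807];
[::12;37;80;106;162;248;372;400;425;466;486;599;610;641;702;736;773;813];
[::12;22;79;122;164;246;325;353;388;441;521;541;551;567;655;683;717;777];
[::10;82;165;210;249;275;342;358;420;448;495;564;585;642;682;710;772;788];
[::10;81;167;191;251;294;330;391;408;481;519;525;597;615;664;716;754;806];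
[::12;41;84;108;166;252;376;403;430;473;494;595;612;636;701;740;774;816];
[::12;24;83;126;168;250;322;355;386;445;523;543;555;572;662;678;723;782];
[::10;86;169;214;253;277;354;366;429;459;487;548;568;635;689;707;770;794];
[::10;85;171;193;255;298;327;381;414;462;517;536;604;629;656;725;737;818];
[::12;45;88;110;170;256;359;405;435;479;500;606;616;648;713;742;757;799];
[::12;26;87;130;172;254;333;336;398;449;504;526;561;575;667;691;730;785];
[::10;90;173;218;257;279;352;360;424;456;485;558;581;630;679;712;775;784];
[::10;89;175;195;259;302;334;378;406;474;524;528;596;624;652;718;748;814];
[::12;49;92;112;174;260;369;410;427;468;490;605;620;647;708;745;768;812];
[::12;28;91;134;176;258;332;349;393;450;518;539;554;577;658;687;722;786];
[::10;94;177;222;261;281;341;377;440;446;498;553;573;646;672;703;765;778];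
[::10;93;179;197;263;306;326;395;401;470;513;544;588;613;666;733;741;802];
[::12;53;96;114;178;264;363;413;421;463;483;591;621;634;698;749;763;805];
[::12;30;95;138;180;262;320;343;382;453;510;531;547;579;653;676;715;791];
[::10;98;181;226;265;283;350;365;428;455;493;550;571;640;690;693;756;795];
[::10;97;183;199;267;310;317;389;419;467;505;532;607;622;660;720;738;810];
[::12;57;100;116;182;268;361;416;438;480;502;600;626;644;706;750;759;803];
[::12;32;99;142;184;266;329;339;390;457;507;530;566;583;669;684;734;793];
[::10;102;185;230;269;285;337;373;436;442;491;557;578;638;686;696;761;789];
[::10;101;187;201;271;314;319;385;412;472;509;542;602;611;659;729;746;798];
[::12;61;104;118;186;272;368;417;434;476;496;589;627;631;694;753;767;808];
[::12;34;103;146;188;270;315;347;380;461;514;534;559;586;663;674;727;796];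
[::6;21;63;106;203;245;322;377;382;408;491;514;539;624;669;707;730;738];
[::6;37;79;105;189;231;342;433;460;470;558;574;602;650;690;762;790;818];
[::6;23;65;108;207;249;332;370;388;406;498;510;526;629;663;693;734;746];
[::6;41;83;107;191;233;352;422;454;478;548;582;588;643;686;771;779;810];
[::6;25;67;110;211;253;329;360;393;419;495;523;534;611;655;703;715;752];
[::6;45;87;109;193;235;350;431;444;474;557;580;597;633;677;769;787;802];
[::6;27;69;112;215;257;333;358;386;414;503;521;530;622;653;696;727;741];
[::6;49;91;111;195;237;354;423;443;481;550;587;593;632;672;776;781;798];
[::6;29;71;114;219;261;325;373;380;402;493;507;543;615;667;712;722;737];
[::6;53;95;113;197;239;345;439;458;472;564;576;607;645;689;766;797;814];
[::6;31;73;116;223;265;315;366;398;412;485;518;531;613;662;699;717;754];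
[::6;57;99;115;199;241;337;426;452;462;553;569;596;639;682;758;783;807];
[::6;33;75;118;227;269;320;365;390;401;487;504;541;619;658;710;723;748];
[::6;61;103;117;201;243;341;437;447;467;562;570;604;637;679;760;792;806];
[::11;120;162;204;232;289;328;387;430;453;520;545;586;647;657;719;759;785];
[::11;119;148;190;246;287;355;363;415;465;496;554;598;614;684;713;744;815];
[::18;38;64;122;161;288;330;403;446;463;528;578;589;620;660;750;794;799];
[::18;22;80;121;147;290;346;367;395;420;499;509;563;630;675;697;725;756];
[::11;124;166;208;234;293;316;384;427;441;522;537;579;648;668;724;767;793];
[::11;123;150;192;250;291;349;372;418;471;483;561;594;618;674;706;743;817];
[::18;42;66;126;165;292;334;410;451;466;536;573;591;616;659;753;795;803];
[::18;24;84;125;149;294;344;364;397;424;501;513;565;635;681;704;720;761];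
[::11;128;170;212;236;297;324;396;438;450;506;529;572;631;665;731;773;791];
[::11;127;152;194;254;295;339;369;399;477;494;559;608;625;683;698;755;800];
[::18;46;68;130;169;296;317;416;456;468;542;585;595;627;671;736;778;805];
[::18;26;88;129;151;298;356;375;378;428;484;519;546;638;688;709;733;764];
[::11;132;174;216;238;301;318;394;435;445;516;527;567;644;670;721;763;796];
[::11;131;154;196;258;299;336;376;411;469;486;566;603;617;676;694;751;811];
[::18;50;70;134;173;300;327;405;448;473;532;584;599;626;666;749;789;808];
[::18;28;92;133;153;302;351;374;391;429;497;512;560;640;680;700;729;765];
[::11;136;178;220;240;305;335;383;425;461;511;540;583;636;661;714;757;786];
[::11;135;156;198;262;303;353;368;407;464;502;555;592;609;691;708;739;804];
[::18;54;72;138;177;304;321;400;442;476;525;571;600;612;656;742;784;812];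
[::18;30;96;137;155;306;340;362;385;432;489;505;552;642;673;695;718;770];
[::11;140;182;224;242;309;323;392;434;449;508;535;577;634;651;732;774;777];
[::11;139;158;200;266;307;347;359;404;482;490;547;601;628;678;702;747;801];
[::18;58;74;142;181;308;319;417;459;479;544;581;605;621;664;740;780;813];
[::18;32;100;141;157;310;348;371;381;436;488;524;549;646;692;711;726;772];
[::11;144;186;228;244;313;331;379;421;457;515;533;575;641;654;728;768;782];
[::11;143;160;202;270;311;343;361;409;475;500;551;590;623;687;701;735;809];
[::18;62;76;146;185;312;326;413;455;480;538;568;606;610;652;745;788;816];
[::18;34;104;145;159;314;338;357;389;440;492;517;556;649;685;705;716;775];
[::1;35;122;148;203;290;373;434;457;481;487;572;596;648;703;763;786;810];
[::1;37;120;147;206;287;326;350;398;410;510;542;564;626;656;679;727;740];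
[::1;39;126;150;207;294;377;421;461;474;493;577;604;644;699;773;785;798];
[::1;41;124;149;210;291;321;337;390;405;521;544;558;627;660;689;715;745];
[::1;43;130;152;211;298;358;430;441;467;498;583;602;634;712;768;796;807];
[::1;45;128;151;214;295;334;345;382;417;518;525;550;610;666;686;723;750];
[::1;47;134;154;215;302;370;425;453;462;491;575;607;631;710;774;793;802];
[::1;49;132;153;218;299;330;341;380;416;523;538;548;621;659;690;717;742];
[::1;51;138;156;219;306;365;438;449;478;485;567;597;647;696;767;782;818];
[::1;53;136;155;222;303;319;354;393;403;514;532;562;616;652;682;734;736];
[::1;55;142;158;223;310;360;427;445;472;503;586;588;641;707;757;791;806];
[::1;57;140;157;226;307;327;342;388;413;504;528;557;612;671;672;722;753];
[::1;59;146;160;227;314;366;435;450;470;495;579;593;636;693;759;777;814];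
[::1;61;144;159;230;311;317;352;386;400;507;536;553;620;664;677;730;749];
[::4;77;121;162;245;288;320;339;426;469;534;555;601;643;667;687;776;817];
[::4;79;119;161;248;289;362;381;406;447;492;513;580;622;709;729;754;797];
[::7;38;78;164;204;247;356;368;392;473;500;522;552;605;685;698;721;803];
[::7;36;80;163;205;246;331;418;436;455;529;585;617;635;661;747;765;784];
[::4;81;125;166;249;292;325;347;437;477;531;554;590;632;669;691;769;811];
[::4;83;123;165;252;293;367;389;414;458;489;512;569;611;711;733;748;790];
[::7;42;82;168;208;251;348;363;379;468;502;516;563;606;673;702;731;808];
[::7;40;84;167;209;250;335;411;440;442;535;581;625;640;657;735;764;794];
[::4;85;129;170;253;296;332;353;433;475;543;566;598;639;653;674;760;801];
[::4;87;127;169;256;297;374;395;412;454;501;524;576;619;695;716;738;781];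
[::7;46;86;172;212;255;340;376;387;480;483;508;560;589;681;708;728;813];
[::7;44;88;171;213;254;316;404;420;451;540;571;623;646;670;744;775;789];
[::4;89;133;174;257;300;322;343;439;482;541;561;592;633;663;684;758;800];
[::4;91;131;173;260;301;364;385;419;460;499;519;570;613;705;726;737;779];
[::7;50;90;176;216;259;338;372;383;479;496;506;565;600;675;701;732;805];
[::7;48;92;175;217;258;328;399;432;446;533;568;628;638;668;739;772;795];
[::4;93;137;178;261;304;315;336;431;471;530;551;608;650;658;678;771;815];
[::4;95;135;177;264;305;357;378;408;452;488;509;587;629;700;720;752;792];
[::7;54;94;180;220;263;351;361;396;466;490;520;556;595;692;694;724;799];
[::7;52;96;179;221;262;323;415;428;459;527;584;618;630;654;755;761;788];
[::4;97;141;182;265;308;333;355;422;464;539;559;594;637;655;676;766;809];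
[::4;99;139;181;268;309;375;397;401;443;497;517;574;615;697;718;746;787];
[::7;58;98;184;224;267;346;369;384;476;486;515;546;591;680;713;714;816];
[::7;56;100;183;225;266;318;409;424;448;545;578;609;649;665;743;770;778];
[::4;101;145;186;269;312;329;349;423;465;526;547;603;645;662;683;762;804];
[::4;103;143;185;272;313;371;391;402;444;484;505;582;624;704;725;741;783];
[::7;62;102;188;228;271;344;359;394;463;494;511;549;599;688;706;719;812];
[::7;60;104;187;229;270;324;407;429;456;537;573;614;642;651;751;756;780];
[::5;78;106;190;231;290;324;338;417;445;540;546;577;616;654;673;749;793];
[::5;64;120;189;246;274;366;380;424;480;498;504;595;640;696;715;772;812];
[::5;82;108;192;233;294;323;340;413;450;545;549;575;626;661;675;736;796];
[::5;66;124;191;250;276;365;382;429;476;503;507;605;638;703;717;775;799];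
[::5;86;110;194;235;298;335;344;403;457;527;552;586;621;668;680;745;777];
[::5;68;128;193;254;278;377;386;436;466;485;510;600;649;710;722;756;808];
[::5;90;112;196;237;302;331;346;400;449;537;556;583;627;657;681;740;791];
[::5;70;132;195;258;280;373;388;428;463;495;514;606;646;699;723;770;803];
[::5;94;114;198;239;306;318;348;416;441;533;560;572;620;651;685;753;785];
[::5;72;136;197;262;282;360;390;420;479;491;518;599;635;693;727;764;816];
[::5;98;116;200;241;310;328;351;410;461;529;563;579;610;670;688;742;782];
[::5;74;140;199;266;284;370;393;440;473;487;521;589;642;712;730;761;805];
[::5;102;118;202;243;314;316;356;405;453;535;565;567;612;665;692;750;786];
[::5;76;144;201;270;286;358;398;432;468;493;523;591;630;707;734;765;813];
[::13;35;105;147;204;245;385;404;448;475;517;581;608;618;733;751;795;804];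
[::13;38;119;163;203;232;317;341;371;422;501;525;557;632;652;689;700;758];
[::19;36;63;164;206;289;343;412;427;467;559;597;629;644;691;741;774;814];
[::19;37;77;148;205;273;329;359;383;443;483;515;543;569;658;694;731;779];
[::13;39;107;149;208;249;395;409;456;464;505;568;601;617;726;755;789;815];
[::13;42;123;167;207;234;319;345;357;423;497;528;553;633;656;690;709;760];
[::19;40;65;168;210;293;353;401;435;472;547;596;622;631;684;752;768;818];
[::19;41;81;150;209;275;315;361;387;444;486;511;539;570;667;698;732;781];
[::13;43;109;151;212;253;391;415;455;471;513;578;592;628;718;735;780;811];
[::13;46;127;171;211;236;321;352;367;426;488;532;564;637;659;672;705;762];
[::19;44;67;172;214;297;349;408;434;478;555;607;613;641;676;748;759;798];
[::19;45;85;152;213;277;325;363;394;447;490;522;530;574;663;701;714;783];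
[::13;47;111;153;216;257;397;407;459;465;509;571;590;625;716;747;778;817];
[::13;50;131;175;215;238;326;342;362;431;484;536;562;639;660;686;711;766];
[::19;48;69;176;218;301;355;402;438;470;551;604;611;634;674;754;757;810];
[::19;49;89;154;217;279;320;368;384;452;494;520;526;576;669;702;728;787];
[::13;51;113;155;220;261;389;399;451;482;524;585;603;614;729;743;794;809];
[::13;54;135;179;219;240;327;337;375;433;499;538;550;643;664;679;704;769];
[::19;52;71;180;222;305;347;419;430;462;566;593;624;648;687;746;773;806];
[::19;53;93;156;221;281;333;369;379;454;496;508;541;580;662;706;721;790];
[::13;55;115;157;224;265;378;418;442;469;512;573;598;623;725;739;788;800];
[::13;58;139;183;223;242;330;354;364;437;492;542;558;645;666;677;695;771];
[::19;56;73;184;226;309;336;406;421;481;554;602;619;636;683;737;767;802];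
[::19;57;97;158;225;283;322;372;396;458;500;516;534;582;653;708;719;792];
[::13;59;117;159;228;269;381;411;446;477;519;584;594;609;720;744;784;801];
[::13;62;143;187;227;244;334;350;374;439;489;544;548;650;671;682;697;776];
[::19;60;75;188;230;313;339;414;425;474;561;588;615;647;678;738;763;807];
[::19;61;101;160;229;285;332;376;392;460;502;506;531;587;655;713;724;797];
[::2;36;106;189;232;288;347;361;391;442;494;524;561;568;676;708;720;778];
[::2;22;119;204;231;273;332;401;428;479;530;591;611;642;662;737;775;808];
[::2;40;108;191;234;292;343;368;378;446;490;517;566;571;683;713;729;780];
[::2;24;123;208;233;275;333;402;436;480;534;599;613;630;658;738;770;805];
[::2;44;110;193;236;296;355;372;389;448;502;509;547;573;687;694;726;784];
[::2;26;127;212;235;277;315;406;432;463;541;605;615;640;669;741;761;816];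
[::2;48;112;195;238;300;353;363;381;451;500;505;559;578;678;706;733;788];
[::2;28;131;216;237;279;329;408;440;476;531;595;619;635;667;746;756;813];
[::2;52;114;197;240;304;339;359;397;455;486;519;554;581;674;701;725;789];
[::2;30;135;220;239;281;322;412;429;468;526;589;622;649;655;748;772;803];
[::2;56;116;199;242;308;349;376;385;456;496;513;551;584;691;698;716;794];
[::2;32;139;224;241;283;320;414;420;466;543;606;624;638;663;752;765;812];
[::2;60;118;201;244;312;336;369;395;459;483;512;555;585;684;702;718;795];
[::2;34;143;228;243;285;325;419;424;473;539;600;629;646;653;754;764;799];
[::16;77;105;161;203;246;348;394;413;438;508;565;627;636;680;724;742;768];
[::16;80;120;164;190;245;334;357;458;462;484;532;570;588;664;695;787;798];
[::20;21;78;163;248;287;386;431;461;482;518;575;594;645;734;760;791;811];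
[::20;35;79;162;247;274;316;337;365;409;495;527;548;625;651;672;712;739];
[::16;81;107;165;207;250;338;396;400;434;515;560;621;647;688;721;750;757];
[::16;84;124;168;192;249;327;362;460;467;488;542;576;593;652;697;783;802];
[::20;23;82;167;252;291;393;426;453;475;504;583;603;650;727;766;777;800];
[::20;39;83;166;251;276;318;341;373;407;485;529;550;628;654;677;707;744];
[::16;85;109;169;211;254;346;379;410;425;520;549;612;644;685;732;749;767];
[::16;88;128;172;194;253;319;364;443;470;489;538;582;596;660;700;797;806];
[::20;25;86;171;256;295;390;439;445;465;514;579;601;632;717;771;786;809];
[::20;43;87;170;255;278;323;342;370;418;493;533;553;609;657;679;696;751];
[::16;89;111;173;215;258;340;392;403;421;511;546;610;648;692;731;753;759];
[::16;92;132;176;196;257;317;367;454;472;492;544;574;597;656;704;792;807];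
[::20;27;90;175;260;299;398;437;441;464;507;586;608;643;715;762;782;801];
[::20;47;91;174;259;280;324;345;377;415;487;535;557;623;661;682;693;743];
[::16;93;113;177;219;262;356;384;417;435;506;563;626;641;681;719;745;774];
[::16;96;136;180;198;261;330;371;447;474;497;536;569;602;671;705;781;810];
[::20;29;94;179;264;303;388;423;457;477;523;577;598;637;730;758;796;817];
[::20;51;95;178;263;282;328;350;366;404;503;537;558;617;665;686;710;735];
[::16;97;115;181;223;266;344;383;405;430;522;556;620;631;673;728;736;763];
[::16;100;140;184;200;265;326;374;444;478;499;525;587;604;659;709;790;814];
[::20;31;98;183;268;307;380;433;450;471;510;567;590;633;723;776;785;804];
[::20;55;99;182;267;284;331;352;358;411;491;540;562;614;668;689;703;755];
[::16;101;117;185;227;270;351;387;416;427;516;552;616;634;675;714;740;773];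
[::16;104;144;188;202;269;321;375;452;481;501;528;580;607;666;711;779;818];
[::20;33;102;187;272;311;382;422;449;469;521;572;592;639;722;769;793;815];
[::20;59;103;186;271;286;335;354;360;399;498;545;564;618;670;690;699;747];
[::8;22;77;206;232;274;374;416;449;464;488;579;590;612;704;745;796;800];
[::8;35;64;190;248;273;319;349;389;421;519;536;566;631;666;678;718;757];
[::8;24;81;210;234;276;375;417;457;465;492;567;592;620;700;742;791;801];
[::8;39;66;192;252;275;326;336;385;425;524;532;559;634;671;687;725;759];
[::8;26;85;214;236;278;357;400;453;469;499;577;594;626;711;753;782;804];
[::8;43;68;194;256;277;330;347;397;427;505;544;551;636;652;684;729;763];
[::8;28;89;218;238;280;371;413;461;471;489;572;598;616;709;750;777;809];
[::8;47;70;196;260;279;321;339;395;430;517;542;547;641;664;691;720;767];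
[::8;30;93;222;240;282;364;405;450;475;484;586;601;610;697;740;793;811];
[::8;51;72;198;264;281;317;355;381;434;512;528;561;644;659;683;716;768];
[::8;32;97;226;242;284;362;403;441;477;501;575;603;627;705;749;786;815];
[::8;55;74;200;268;283;334;343;391;435;509;538;555;647;656;674;733;773];
[::8;34;101;230;244;286;367;410;445;482;497;583;608;621;695;736;785;817];
[::8;59;76;202;272;285;327;353;378;438;513;525;554;648;660;676;726;774];
[::14;21;120;148;247;288;344;419;440;452;560;582;615;638;692;748;770;781];
[::14;36;121;161;231;287;323;358;379;472;485;506;537;604;670;693;714;802];
[::17;63;119;162;205;290;352;390;459;476;523;550;573;606;682;722;789;805];
[::17;78;122;147;189;289;315;376;399;437;490;526;609;633;653;706;735;766];
[::14;23;124;150;251;292;351;412;432;447;546;587;624;646;685;737;756;787];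
[::14;40;125;165;233;291;331;360;383;470;487;508;527;607;665;696;719;807];
[::17;65;123;166;209;294;354;380;455;463;518;557;584;600;679;730;778;813];
[::17;82;126;149;191;293;320;369;404;439;500;530;614;639;655;694;739;762];
[::14;25;128;152;255;296;348;402;424;460;556;569;622;642;675;746;765;792];
[::14;44;129;169;235;295;328;365;384;481;491;511;535;588;654;699;721;814];
[::17;67;127;170;213;298;337;388;446;473;507;562;581;591;690;727;788;812];
[::17;86;130;151;193;297;322;361;407;422;496;531;617;645;658;702;743;776];
[::14;27;132;154;259;300;356;401;420;458;549;580;629;649;673;738;761;783];
[::14;48;133;173;237;299;335;366;387;478;493;515;529;602;651;703;724;806];
[::17;69;131;174;217;302;350;382;442;466;504;553;585;589;689;734;780;816];
[::17;90;134;153;195;301;325;359;409;433;502;534;618;637;662;698;744;771];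
[::14;29;136;156;263;304;346;414;436;444;565;574;619;640;688;754;775;779];
[::14;52;137;177;239;303;324;370;392;467;495;516;545;596;668;707;728;798];
[::17;71;135;178;221;306;342;398;456;480;521;548;578;605;677;723;795;808];
[::17;94;138;155;197;305;329;372;411;426;494;539;623;632;663;713;747;760];
[::14;31;140;158;267;308;338;408;429;454;552;570;611;630;681;741;764;797];
[::14;56;141;181;241;307;316;373;394;474;498;520;533;593;661;710;731;818];
[::17;73;139;182;225;310;341;386;451;468;514;564;568;599;686;715;784;799];
[::17;98;142;157;199;309;332;368;415;423;483;541;625;650;667;701;751;769];
[::14;33;144;160;271;312;340;406;428;443;563;576;613;635;680;752;772;790];
[::14;60;145;185;243;311;318;377;396;462;503;522;540;597;657;712;732;810];
[::17;75;143;186;229;314;345;393;448;479;510;558;571;595;672;717;794;803];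
[::17;102;146;159;201;313;333;363;418;431;486;543;628;643;669;708;755;758];
[::47;104;115;177;210;236;290;316;317;327;331;348;485;609;732;761;796;815];
[::53;69;123;172;201;248;308;315;317;322;326;391;427;451;474;548;695;750];
[::23;98;129;160;204;258;282;315;316;320;335;359;419;507;574;595;632;683];
[::37;67;131;184;197;252;312;319;320;321;332;378;435;448;462;550;697;753];
[::27;102;141;156;208;254;274;318;320;325;328;361;412;514;582;605;633;678];
[::43;96;117;161;218;242;294;317;318;319;335;338;487;614;728;765;791;817];
[::31;78;137;150;212;270;280;318;322;323;332;363;402;521;580;600;637;691];
[::59;84;105;173;226;240;298;316;321;323;326;346;491;617;719;772;782;800];
[::49;75;139;180;191;256;288;321;322;329;334;389;434;459;472;553;700;736];
[::41;73;127;188;189;260;304;325;326;330;333;381;438;456;467;557;704;749];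
[::55;80;113;165;214;244;302;319;324;326;328;340;493;618;714;764;777;811];
[::25;94;145;148;216;266;276;316;322;324;325;368;401;510;587;606;639;687];
[::21;86;133;158;220;250;286;315;328;329;331;369;414;504;576;599;643;676];
[::61;65;119;176;199;264;296;319;325;327;329;397;430;446;481;558;705;742];
[::39;100;109;185;206;238;306;323;327;328;334;356;495;623;731;756;793;804];
[::33;82;121;154;224;262;278;324;331;332;333;372;408;523;569;589;645;684];
[::45;71;143;164;195;268;292;315;327;330;332;385;421;455;470;562;709;740];
[::51;92;107;169;230;232;310;318;321;330;331;344;498;625;724;775;786;801];
[::35;88;111;181;222;234;314;324;330;334;335;351;503;628;721;770;785;809];
[::29;90;125;152;228;246;284;323;329;333;335;376;406;518;570;591;650;674];
[::57;63;135;168;193;272;300;317;320;333;334;395;425;442;478;564;711;745];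
[::38;88;132;177;225;243;276;337;338;344;345;360;411;459;481;532;730;771];
[::28;101;116;150;220;248;297;336;338;340;355;379;436;499;569;591;627;651];
[::43;71;146;175;189;249;307;320;336;337;350;353;517;647;701;741;793;800];
[::42;100;128;161;229;239;280;340;341;342;351;366;399;455;474;542;734;776];
[::55;63;138;171;191;257;311;325;337;339;341;355;505;648;708;752;796;801];
[::26;93;118;154;204;252;309;339;340;346;349;383;440;501;570;599;621;654];
[::34;81;106;158;216;256;305;339;343;344;351;384;420;484;574;605;612;657];
[::46;96;144;173;205;233;284;342;344;348;354;373;409;446;467;538;715;758];
[::51;69;126;187;193;265;287;332;336;342;343;345;513;631;706;748;777;804];
[::32;77;114;152;208;260;313;336;344;346;347;387;432;497;576;595;610;661];
[::59;65;122;183;195;253;303;322;341;345;347;349;509;644;713;754;791;809];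
[::50;104;140;165;221;231;278;345;346;352;356;365;404;442;462;544;727;769];
[::47;75;142;167;197;245;295;315;343;349;350;354;524;636;702;746;785;811];
[::54;92;124;185;213;241;274;341;346;348;350;358;418;456;478;536;722;762];
[::24;97;110;148;228;264;301;338;348;349;353;392;428;489;580;589;626;665];
[::35;67;134;179;199;269;291;333;339;342;352;353;512;634;694;737;782;815];
[::30;89;108;160;212;268;289;347;351;353;356;394;424;488;582;606;620;668];
[::58;80;136;169;209;237;286;338;350;351;352;377;407;451;472;525;717;760];
[::22;85;112;156;224;272;293;343;348;355;356;396;429;492;587;600;616;670];
[::62;84;120;181;217;235;282;337;340;354;356;370;415;448;470;528;723;766];
[::39;73;130;163;201;261;299;329;347;352;354;355;519;641;698;738;786;817];
[::48;73;146;178;208;246;277;358;359;369;373;390;527;588;690;752;775;782];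
[::54;81;111;151;202;268;288;349;357;359;364;368;411;430;448;506;653;813];
[::23;87;140;187;206;239;302;317;357;358;362;377;482;549;569;616;637;725];
[::38;89;109;157;198;272;292;336;361;362;363;374;399;427;456;508;655;816];
[::27;99;144;179;210;231;298;319;360;362;367;370;475;556;570;626;645;720];
[::44;75;138;162;216;250;283;359;360;361;377;380;529;593;686;754;770;786];
[::31;95;120;167;214;237;314;321;360;364;365;374;465;563;574;621;643;733];
[::60;63;126;174;224;254;281;358;363;365;368;388;533;596;677;737;761;793];
[::50;97;117;155;192;248;296;347;363;364;371;376;409;438;455;511;658;799];
[::42;85;115;159;190;264;300;339;367;368;372;375;404;435;459;515;662;812];
[::56;71;122;166;212;258;285;361;366;368;370;382;535;597;672;748;756;785];
[::25;103;136;163;218;233;310;326;358;364;366;367;464;552;576;627;650;729];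
[::21;91;128;183;222;243;294;327;357;370;371;373;477;546;580;620;639;718];
[::62;77;107;153;200;256;304;355;361;367;369;371;418;425;451;516;663;805];
[::40;67;142;186;204;262;279;365;369;370;376;398;537;602;689;741;772;777];
[::33;79;124;175;226;235;306;330;366;373;374;375;471;565;582;610;632;726];
[::46;101;113;147;196;252;308;343;357;369;372;374;407;434;442;520;667;803];
[::52;65;134;170;228;266;273;360;363;372;373;386;540;604;682;738;765;796];
[::36;69;130;182;220;270;275;366;372;376;377;393;545;607;679;746;764;791];
[::29;83;132;171;230;241;290;334;365;371;375;377;469;560;587;612;633;716];
[::58;93;105;149;194;260;312;353;359;362;375;376;415;421;446;522;669;808];
[::37;90;130;178;223;233;286;318;379;380;386;387;418;438;474;490;688;792];
[::28;74;143;167;222;253;288;337;378;380;382;397;457;541;606;612;632;693];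
[::44;104;113;154;190;267;293;362;378;379;392;395;559;584;659;737;772;804];
[::41;86;142;162;227;237;282;324;382;383;384;393;411;434;462;500;692;797];
[::56;96;105;152;192;271;301;367;379;381;383;397;547;585;666;738;775;815];
[::26;76;135;175;206;265;292;341;381;382;388;391;461;543;600;620;633;696];
[::34;64;123;183;218;261;296;342;381;385;386;393;441;526;591;626;637;699];
[::45;102;138;174;203;241;276;331;384;386;390;396;404;425;472;496;673;779];
[::52;84;111;160;194;247;309;374;378;384;385;387;555;568;664;741;756;811];
[::32;72;119;171;210;269;300;345;378;386;388;389;453;539;589;616;639;703];
[::60;80;107;158;196;263;297;364;383;387;389;391;551;581;671;746;770;817];
[::49;98;146;166;219;235;274;323;387;388;394;398;399;421;467;502;685;790];
[::48;100;117;150;198;255;289;357;385;391;392;396;566;573;660;748;764;809];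
[::53;82;134;186;211;231;284;316;383;388;390;392;415;435;481;494;680;783];
[::24;68;139;163;230;257;304;350;380;390;391;395;449;531;605;610;643;707];
[::36;92;109;156;200;251;313;375;381;384;394;395;554;571;652;752;761;800];
[::30;66;131;187;214;245;308;352;389;393;395;398;445;530;599;627;645;710];
[::57;94;122;170;207;243;280;335;380;392;393;394;409;430;470;483;675;781];
[::22;70;127;179;226;249;312;354;385;390;397;398;450;534;595;621;650;712];
[::61;78;126;182;215;239;278;328;379;382;396;398;407;427;478;486;681;787];
[::40;88;115;148;202;259;305;371;389;394;396;397;561;578;656;754;765;801];
[::24;74;128;176;219;272;290;339;360;389;400;401;405;408;462;638;653;779];
[::56;79;137;160;195;249;277;399;401;412;415;439;537;571;677;702;721;804];
[::46;94;117;182;209;232;299;326;399;400;403;418;461;497;504;549;591;768];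
[::58;78;113;186;217;234;295;321;403;404;410;411;453;484;507;556;599;757];
[::60;83;121;156;193;257;283;401;402;404;418;433;527;578;682;701;731;815];
[::28;76;140;172;203;264;294;347;366;385;402;403;406;416;467;646;655;781];
[::36;87;133;150;201;265;281;399;406;407;408;423;535;584;689;713;728;811];
[::54;90;107;162;225;236;311;334;404;405;407;416;445;492;510;563;605;767];
[::32;64;136;188;215;252;298;353;373;397;405;406;413;419;470;642;658;783];
[::62;82;105;178;213;238;307;330;399;405;409;410;441;488;514;552;595;759];
[::26;72;144;184;207;248;302;343;365;395;408;410;414;417;472;649;662;787];
[::52;91;125;148;199;253;285;402;408;409;411;422;529;573;679;708;732;817];
[::22;68;132;168;227;268;306;336;358;381;402;410;412;413;474;640;663;790];
[::50;102;115;170;205;240;291;319;400;411;413;415;457;501;518;546;589;774];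
[::44;95;145;158;191;245;279;407;411;412;419;437;545;568;672;698;724;809];
[::38;86;111;166;229;242;303;327;409;415;416;417;450;489;521;565;606;763];
[::34;66;120;180;211;260;310;355;377;391;400;412;414;416;478;630;667;792];
[::40;99;129;154;197;269;273;404;406;414;415;431;533;585;690;706;714;800];
[::48;103;141;152;189;261;275;409;414;418;419;426;540;581;686;694;719;801];
[::30;70;124;164;223;256;314;349;370;378;401;403;417;419;481;635;669;797];
[::42;98;109;174;221;244;287;317;407;413;417;418;449;499;523;560;600;773];
[::61;81;122;172;198;242;299;342;421;422;423;438;471;499;518;543;580;744];
[::25;95;143;149;225;257;274;331;377;389;420;422;426;429;442;619;692;805];
[::52;70;108;181;204;271;298;410;420;421;432;435;559;588;652;702;714;793];
[::36;68;112;185;208;263;310;405;420;424;425;438;547;593;656;701;719;796];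
[::53;89;126;184;190;244;295;352;423;425;431;434;469;501;504;539;569;743];
[::31;79;135;153;229;253;276;335;370;385;423;424;428;437;446;615;685;813];
[::48;76;116;161;212;251;306;417;421;427;428;429;555;596;659;713;721;777];
[::29;91;123;157;205;269;278;316;360;397;426;428;433;440;448;629;675;812];
[::41;97;130;180;196;232;311;350;425;426;427;437;482;484;514;530;576;755];
[::37;85;134;188;192;240;307;354;421;426;430;431;477;497;507;526;570;751];
[::33;83;119;151;221;265;280;328;358;395;429;431;436;439;451;624;673;816];
[::40;74;110;177;216;247;314;416;424;429;430;434;551;597;660;708;724;791];
[::57;77;138;176;202;236;291;345;422;433;434;435;465;489;523;541;587;739];
[::60;66;106;169;220;267;302;403;427;432;434;440;566;602;664;698;728;785];
[::27;103;139;147;213;249;282;323;373;381;424;431;432;433;455;613;688;808];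
[::21;87;131;159;209;261;284;318;366;391;422;432;436;437;456;622;681;799];
[::49;101;142;164;194;234;303;337;430;435;437;439;475;488;510;534;574;747];
[::44;72;118;165;224;259;290;413;425;428;435;436;554;604;666;706;731;782];
[::23;99;127;155;217;245;286;324;365;378;420;423;439;440;459;611;680;803];
[::56;64;114;173;228;255;294;400;430;436;438;440;561;607;671;694;732;786];
[::45;93;146;168;200;238;287;341;427;433;438;439;464;492;521;531;582;735];
[::62;80;123;151;197;259;283;384;408;442;443;444;459;501;541;560;643;807];
[::25;101;137;168;223;231;301;335;347;373;421;441;443;447;450;598;734;742];
[::51;66;112;182;206;254;311;441;442;453;456;473;517;609;660;672;694;772];
[::35;70;110;186;210;266;303;441;445;446;459;468;505;614;659;677;698;775];
[::54;84;131;157;189;255;285;394;406;444;446;452;455;497;543;546;632;806];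
[::31;93;121;176;227;233;297;328;343;377;425;444;445;449;458;594;727;750];
[::47;74;118;162;214;262;291;442;448;449;450;480;513;617;671;679;701;756];
[::29;81;133;184;203;235;313;318;355;358;427;447;449;454;461;608;717;749];
[::42;88;139;155;195;271;273;392;419;446;447;448;458;488;526;556;639;818];
[::38;92;127;159;191;267;281;396;414;442;447;451;452;484;539;549;633;814];
[::33;77;125;172;219;237;309;316;353;370;430;450;452;457;460;603;715;753];
[::39;68;116;178;218;270;287;445;450;451;455;479;509;618;666;682;702;770];
[::58;96;119;153;201;251;277;387;402;443;454;455;456;499;531;565;650;802];
[::59;64;108;170;222;258;307;448;453;455;461;466;524;623;656;686;706;764];
[::27;97;145;164;211;239;293;331;339;365;434;445;452;453;454;592;730;745];
[::21;89;129;188;207;241;305;324;349;360;435;443;453;457;458;601;723;736];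
[::50;100;143;147;193;263;275;379;412;451;456;458;460;492;530;552;637;810];
[::43;76;114;166;226;246;299;446;449;456;457;476;512;625;664;689;708;761];
[::23;85;141;180;215;243;289;323;336;366;438;441;444;460;461;590;722;740];
[::55;72;106;174;230;250;295;451;457;459;461;463;519;628;652;690;713;765];
[::46;104;135;149;199;247;279;383;401;448;454;459;460;489;534;563;645;798];
[::24;86;116;153;221;246;312;318;347;381;399;463;464;468;471;575;695;758];
[::55;95;121;187;196;236;293;460;462;464;475;478;495;634;660;679;719;741];
[::45;75;136;181;207;259;273;368;440;462;463;466;481;507;539;546;612;789];
[::57;71;120;185;215;255;275;363;432;466;467;473;474;514;526;549;620;778];
[::59;79;125;179;194;242;301;454;464;465;467;481;485;641;659;689;724;752];
[::28;98;118;151;205;250;304;324;343;389;404;465;466;469;479;583;697;760];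
[::35;91;129;167;202;240;309;444;462;469;470;471;493;647;671;686;731;748];
[::53;65;132;161;223;271;277;376;424;467;468;470;479;521;534;552;626;788];
[::32;94;106;159;217;254;292;331;355;395;407;468;469;476;482;579;700;762];
[::61;63;124;177;211;267;279;372;420;462;468;472;473;510;530;556;616;780];
[::26;102;114;157;209;258;288;323;353;385;409;471;473;477;480;586;704;766];
[::51;83;133;163;200;244;297;443;465;471;472;474;487;636;666;690;721;754];
[::22;90;110;149;229;262;308;316;339;378;411;465;473;475;476;577;705;769];
[::49;73;144;169;203;251;281;361;436;463;474;476;478;504;543;560;610;795];
[::43;103;137;183;192;238;289;458;470;474;475;482;503;631;656;682;714;746];
[::37;69;128;165;227;263;283;369;429;472;478;479;480;523;531;563;627;784];
[::34;78;108;155;213;266;300;335;349;397;415;463;475;477;479;567;709;771];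
[::39;87;141;175;198;232;313;452;467;469;477;478;491;648;664;672;732;737];
[::47;99;145;171;190;234;305;447;472;477;481;482;498;644;652;677;728;738];
[::30;82;112;147;225;270;296;328;336;391;418;464;466;480;482;572;711;776];
[::41;67;140;173;219;247;285;359;428;470;476;480;481;518;541;565;621;794];
[::27;95;124;171;206;243;310;395;484;485;491;492;525;594;681;749;769;779];
[::56;65;130;186;216;246;281;342;402;428;450;483;485;487;502;523;651;798];
[::62;89;115;155;194;252;288;315;466;483;484;497;500;566;581;628;647;714];
[::25;79;132;183;210;239;314;397;487;488;489;498;528;603;680;736;758;781];
[::54;85;117;147;200;260;292;320;473;484;486;488;502;559;568;623;648;719];
[::60;69;142;178;212;250;273;352;408;436;449;486;487;493;496;518;654;802];
[::36;73;138;166;228;254;279;350;414;432;461;486;490;491;498;507;657;806];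
[::33;91;140;179;214;233;290;378;489;491;495;501;532;601;692;745;766;783];
[::42;101;105;153;198;268;296;322;479;483;489;490;492;551;578;614;631;721];
[::52;67;146;162;224;258;275;354;406;440;457;483;491;493;494;504;661;807];
[::38;97;113;149;202;256;300;325;468;488;492;494;496;547;571;609;644;724];
[::31;83;128;187;218;231;306;391;492;493;499;503;536;608;688;740;760;787];
[::58;81;109;159;196;248;304;329;463;490;496;497;501;561;585;625;636;728];
[::23;103;120;175;222;241;298;385;488;493;495;497;538;598;675;753;776;790];
[::44;63;134;182;208;262;285;345;401;429;445;485;495;496;500;521;665;810];
[::50;93;107;151;190;272;308;332;480;486;489;499;500;555;573;618;634;731];
[::40;75;122;174;220;266;277;337;419;420;453;494;498;500;503;514;668;814];
[::29;87;144;163;226;237;294;381;485;497;498;499;542;590;685;742;762;792];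
[::48;71;126;170;204;270;283;341;412;424;441;490;495;502;503;510;670;818];
[::21;99;136;167;230;235;302;389;484;487;501;503;544;592;673;750;771;797];
[::46;77;111;157;192;264;312;333;476;494;499;501;502;554;584;617;641;732];
[::52;88;117;158;190;251;301;327;401;424;475;492;505;506;509;522;691;780];
[::37;98;138;186;207;237;278;340;444;504;506;518;520;535;607;617;636;706];
[::32;66;127;175;230;261;288;358;504;505;512;514;548;572;655;745;758;805];
[::36;100;113;160;192;259;297;317;402;429;464;489;508;509;513;516;684;788];
[::34;70;139;171;222;245;292;360;507;509;510;519;550;577;662;742;760;813];
[::41;102;122;178;215;235;284;346;452;504;507;508;522;533;602;625;647;694];
[::48;96;107;148;194;267;313;326;406;436;471;501;508;511;512;519;676;794];
[::22;74;135;187;210;257;296;365;510;512;517;523;553;583;667;753;762;812];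
[::45;78;134;166;223;243;282;351;458;506;510;511;514;545;593;623;644;702];
[::49;94;126;162;211;241;286;344;447;507;514;515;516;540;588;628;648;698];
[::40;104;105;156;196;255;309;319;408;428;465;499;506;512;513;515;674;784];
[::30;68;143;183;206;249;300;366;513;514;521;524;557;575;658;750;766;816];
[::26;64;131;167;226;269;304;370;507;513;517;518;558;567;653;740;769;808];
[::53;86;146;182;203;233;280;338;443;511;516;518;523;529;604;618;641;713];
[::60;92;115;152;198;247;293;334;412;420;482;488;505;516;517;520;687;778];
[::57;82;130;174;227;239;274;356;460;508;510;520;521;537;597;609;631;701];
[::24;76;119;179;218;253;308;373;505;518;519;521;562;586;669;749;771;799];
[::44;80;111;150;200;271;305;321;414;440;469;497;515;519;520;524;683;795];
[::28;72;123;163;214;265;312;377;504;509;523;524;564;579;663;736;776;803];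
[::56;84;109;154;202;263;289;330;419;432;477;484;511;517;522;524;678;789];
[::61;90;142;170;219;231;276;348;454;515;521;522;523;527;596;614;634;708];
[::27;82;137;152;204;266;286;353;483;526;527;533;534;615;723;758;790;812];
[::55;88;107;185;218;240;290;384;429;449;465;525;527;529;544;565;693;735];
[::61;73;131;180;193;248;292;357;403;524;525;526;539;542;584;607;644;672];
[::25;90;121;158;208;270;282;355;486;529;530;531;540;624;722;760;779;799];
[::53;75;127;164;199;252;300;362;410;517;526;528;530;544;585;602;631;677];
[::59;100;111;177;214;232;294;394;428;457;471;528;529;535;538;560;696;739];
[::35;96;115;165;230;238;298;392;440;453;477;528;532;533;540;549;699;743];
[::33;98;133;156;212;246;276;336;490;531;533;537;543;622;734;762;787;808];
[::41;63;143;176;197;256;308;364;416;509;525;531;532;534;568;593;641;679];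
[::51;104;109;161;226;234;302;396;436;461;469;525;533;535;536;546;703;744];
[::37;71;139;168;201;260;296;367;405;505;530;534;536;538;581;588;634;682];
[::31;86;125;160;216;262;274;349;494;534;535;541;545;629;730;766;781;803];
[::57;67;123;188;195;264;288;371;400;519;532;538;539;543;573;604;648;686];
[::23;78;145;154;220;254;284;343;496;530;535;537;539;619;717;769;797;816];
[::43;92;105;181;210;244;306;387;424;450;464;527;537;538;542;563;707;747];
[::49;65;135;172;189;268;312;374;417;513;528;531;541;542;571;597;636;689];
[::39;80;117;173;222;236;310;379;432;441;482;536;540;542;545;556;710;751];
[::29;102;129;148;224;250;280;339;500;527;539;540;541;611;727;771;783;805];
[::47;84;113;169;206;242;314;383;420;445;475;532;537;544;545;552;712;755];
[::21;94;141;150;228;258;278;347;502;526;529;543;545;613;715;776;792;813];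
[::45;69;119;184;191;272;304;375;413;512;536;541;543;544;578;596;647;690];
[::51;75;130;183;189;257;291;369;412;445;464;534;547;548;551;564;733;759];
[::38;96;140;185;209;235;280;382;423;493;546;548;560;562;573;596;628;664];
[::32;85;108;154;228;248;305;316;506;546;547;554;556;635;697;742;779;808];
[::35;71;142;187;191;253;299;359;401;450;465;531;550;551;555;558;726;767];
[::34;97;112;152;220;252;289;318;508;549;551;552;561;640;704;750;781;805];
[::42;80;144;177;217;241;278;388;431;491;546;549;550;564;584;604;623;652];
[::47;65;138;163;193;269;307;368;408;457;469;543;550;553;554;561;718;773];
[::22;93;116;160;208;256;301;323;511;552;554;559;565;646;709;749;783;816];
[::46;92;120;165;225;239;286;393;437;503;548;552;553;556;581;602;614;660];
[::50;84;136;161;213;243;284;386;426;498;549;556;557;558;585;607;609;656];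
[::39;63;146;179;195;265;295;361;402;449;471;541;548;554;555;557;716;763];
[::30;101;110;158;204;260;293;324;515;555;556;563;566;638;700;753;787;813];
[::26;89;106;150;224;264;313;328;516;549;555;559;560;630;695;745;790;803];
[::54;104;128;181;205;237;276;380;422;487;553;558;560;565;578;597;625;671];
[::59;73;134;171;197;249;287;376;419;441;475;530;547;558;559;562;729;757];
[::58;88;124;173;229;231;282;398;439;495;550;552;562;563;568;588;618;659];
[::24;77;118;156;216;268;297;331;520;547;560;561;563;649;711;736;792;812];
[::43;69;122;167;199;261;311;363;406;461;477;539;557;561;562;566;725;774];
[::28;81;114;148;212;272;309;335;522;546;551;565;566;642;705;740;797;799];
[::55;67;126;175;201;245;303;372;414;453;482;526;553;559;564;566;720;768];
[::62;100;132;169;221;233;274;390;433;485;557;563;564;565;571;593;617;666];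
[::46;80;131;155;201;267;275;478;516;568;569;573;576;624;655;692;700;776];
[::29;85;145;176;207;231;309;386;413;487;533;561;567;569;580;583;631;815];
[::59;70;116;166;206;262;295;330;337;359;424;567;568;571;586;605;733;735];
[::51;68;118;174;210;246;307;334;341;361;429;571;572;578;579;606;726;739];
[::21;97;137;172;215;233;313;393;400;493;540;566;569;570;572;586;634;817];
[::58;84;127;147;197;271;279;481;506;570;571;574;584;629;662;685;709;769];
[::27;93;125;188;223;235;289;390;410;498;537;547;567;574;575;576;636;800];
[::39;76;106;182;214;258;303;317;342;363;436;572;573;575;584;589;718;743];
[::54;88;143;153;191;247;283;462;515;573;574;581;587;611;667;675;705;760];
[::35;74;114;170;218;250;311;327;345;368;428;567;573;577;578;600;716;744];
[::62;92;139;149;189;263;277;474;508;576;578;582;585;622;658;673;711;758];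
[::23;101;121;184;211;237;305;398;403;491;545;559;570;576;577;579;641;811];
[::50;96;123;159;199;255;273;470;522;570;578;580;581;615;653;688;704;771];
[::55;66;110;162;222;270;299;321;350;369;420;568;579;581;583;595;729;747];
[::33;89;141;168;203;239;297;388;417;485;535;554;575;579;580;587;644;804];
[::47;72;108;186;226;254;287;319;352;372;440;577;583;584;585;591;725;751];
[::38;100;135;151;195;251;285;467;511;568;580;582;584;613;669;681;695;766];
[::25;77;133;180;227;241;293;380;405;503;527;551;572;574;582;583;647;801];
[::31;81;129;164;219;243;301;382;416;495;529;555;577;582;586;587;648;809];
[::42;104;119;157;193;259;281;472;520;569;571;585;587;619;663;680;697;762];
[::43;64;112;178;230;266;291;326;354;376;432;575;581;585;586;599;720;755];
[::28;94;108;157;229;246;296;357;422;513;535;561;589;590;600;603;609;791];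
[::39;103;121;171;200;240;301;330;350;387;412;574;588;590;593;608;712;767];
[::53;67;144;165;215;267;273;459;500;588;589;596;599;638;669;673;723;745];
[::47;95;125;183;202;232;297;334;337;384;401;582;592;593;597;601;707;763];
[::37;73;136;173;211;271;275;455;502;591;593;595;604;646;663;675;722;742];
[::26;78;112;159;221;250;308;362;423;512;533;566;589;591;592;608;614;777];
[::49;71;124;181;227;247;277;446;483;595;596;602;606;642;655;680;734;753];
[::55;83;129;179;190;238;313;317;345;396;408;580;592;594;596;604;696;774];
[::34;90;116;147;209;254;304;364;426;524;545;547;590;594;595;599;617;786];
[::32;82;110;155;205;258;312;367;431;519;540;559;591;598;599;601;618;782];
[::41;75;120;169;223;263;279;442;496;597;599;605;607;649;653;681;730;750];
[::43;79;133;187;198;234;309;327;341;394;402;587;590;596;597;598;693;773];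
[::35;99;137;175;194;244;293;321;354;383;419;576;588;601;602;603;710;759];
[::61;69;140;161;207;255;281;456;490;591;597;600;602;640;667;685;717;740];
[::24;102;106;151;225;262;300;371;433;509;529;554;594;600;601;606;623;796];
[::45;63;132;185;219;251;283;451;486;588;600;604;605;630;662;688;727;749];
[::30;86;118;149;217;266;288;374;437;517;537;551;592;595;603;605;625;785];
[::59;91;141;163;192;236;305;319;342;392;406;569;598;603;604;607;703;768];
[::51;87;145;167;196;242;289;326;352;379;414;570;594;602;607;608;699;757];
[::22;98;114;153;213;270;292;375;439;505;527;555;598;605;606;608;628;793];
[::57;65;128;177;203;259;285;448;494;589;593;606;607;635;658;692;715;736];
[::28;66;136;184;227;256;290;315;443;493;519;555;588;610;611;621;624;770];
[::40;79;145;152;199;257;281;345;372;392;475;609;611;614;629;637;670;788];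
[::54;102;109;166;217;232;307;438;542;575;609;610;617;620;681;711;715;808];
[::48;83;137;158;201;253;273;342;376;379;464;613;614;618;622;645;665;784];
[::38;94;115;174;213;234;311;434;544;583;612;614;616;625;680;705;717;805];
[::26;70;120;188;219;268;294;320;444;491;524;554;593;610;612;613;629;756];
[::50;82;113;182;229;236;287;425;525;579;616;617;623;627;692;697;722;816];
[::56;87;125;156;189;269;279;354;359;387;471;613;615;617;625;643;654;795];
[::34;74;132;164;207;264;298;322;447;503;505;566;596;611;615;616;620;765];
[::32;68;124;180;203;272;302;325;452;498;517;561;597;612;619;620;622;761];
[::42;78;117;170;225;238;303;421;538;586;618;620;626;628;688;695;723;813];
[::44;91;121;160;197;265;275;352;369;383;465;611;617;618;619;650;651;794];
[::36;95;141;154;193;249;285;341;363;396;482;609;622;623;624;639;668;780];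
[::62;98;111;162;209;240;295;435;532;577;612;618;621;623;675;709;727;803];
[::24;64;144;172;223;260;306;329;454;487;512;551;602;615;621;622;627;775];
[::46;90;105;186;221;242;291;430;528;567;609;621;625;626;685;704;730;812];
[::30;76;128;168;215;248;310;332;458;495;509;559;604;613;616;624;626;764];
[::60;99;133;148;191;261;277;350;361;384;469;619;624;625;628;632;661;789];
[::52;103;129;150;195;245;283;337;368;394;477;615;623;628;629;633;657;778];
[::22;72;140;176;211;252;314;333;460;485;513;547;607;619;626;627;629;772];
[::58;86;107;178;205;244;299;427;536;572;610;614;627;628;673;700;734;799];
[::45;89;122;180;202;234;307;415;558;603;631;632;636;639;658;697;734;797];
[::29;103;127;153;209;265;274;344;476;491;519;529;568;630;632;643;646;752];
[::60;74;112;165;204;255;306;317;372;379;445;626;630;631;634;649;691;798];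
[::52;76;110;173;208;267;290;319;376;383;450;627;634;635;641;642;684;802];
[::21;95;139;151;217;269;276;351;463;498;524;535;571;632;633;635;649;754];
[::57;85;126;164;198;238;311;418;548;608;633;634;637;647;667;704;727;790];
[::27;83;135;159;225;245;278;348;473;495;505;540;573;630;637;638;639;737];
[::40;64;118;181;212;263;302;321;359;384;457;610;635;636;638;647;676;806];
[::53;101;130;176;192;242;287;399;557;590;636;637;644;650;663;709;717;781];
[::36;72;116;169;216;271;294;326;369;387;449;621;630;636;640;641;674;807];
[::61;97;134;168;190;236;303;411;550;601;639;641;645;648;669;700;715;779];
[::23;79;143;157;213;261;280;356;466;503;517;533;578;633;639;640;642;748];
[::49;81;138;188;200;232;295;407;564;594;633;641;643;644;662;695;730;792];
[::56;68;108;161;220;259;314;327;363;392;441;616;631;642;644;646;687;810];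
[::33;99;131;149;205;253;282;346;480;493;512;527;581;638;642;643;650;741];
[::48;66;114;185;224;247;298;330;361;394;461;612;640;646;647;648;683;814];
[::37;93;142;172;196;244;291;404;553;592;631;643;645;647;653;711;723;787];
[::25;91;119;155;229;249;284;338;468;485;509;545;584;635;637;645;646;738];
[::31;87;123;147;221;257;286;340;479;487;513;537;585;640;645;649;650;746];
[::41;77;146;184;194;240;299;409;562;598;632;634;648;650;655;705;722;783];
[::44;70;106;177;228;251;310;334;368;396;453;620;638;644;648;649;678;818];
[::45;65;139;188;197;248;300;337;484;620;652;653;656;669;720;774;780;806];
[::31;90;145;156;204;250;278;393;422;460;480;551;651;653;665;667;694;748];
[::39;96;111;169;226;244;290;358;399;516;579;598;646;651;652;659;661;680];
[::57;69;143;180;189;252;296;341;488;616;655;656;660;663;729;768;788;814];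
[::47;80;109;181;230;240;294;360;404;506;567;594;649;654;656;657;666;688];
[::33;86;137;148;208;258;284;398;423;454;476;555;651;654;655;669;698;737];
[::53;73;119;168;195;256;312;342;489;627;655;658;659;666;726;759;794;810];
[::55;92;117;177;206;234;298;365;407;515;577;608;630;657;659;664;670;685];
[::21;102;125;154;212;266;282;380;426;444;466;561;653;657;658;661;701;746];
[::29;98;121;150;216;254;286;390;431;443;463;554;654;661;662;663;702;738];
[::61;67;135;164;191;260;308;345;492;626;653;659;660;662;733;757;784;818];
[::43;84;115;185;222;232;302;366;409;508;572;603;642;660;661;668;671;692];
[::35;104;107;173;214;242;306;370;411;522;586;592;638;654;660;664;665;681];
[::25;82;141;160;220;246;280;386;433;458;479;547;658;663;665;670;706;754];
[::49;63;127;184;201;264;292;350;497;612;652;663;664;667;725;773;778;807];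
[::23;94;133;152;224;270;274;382;437;452;473;566;655;657;667;668;708;741];
[::59;88;113;161;210;238;310;373;415;511;575;601;635;652;665;666;668;673];
[::37;75;123;176;193;268;304;352;499;621;662;666;667;671;716;767;795;798];
[::51;100;105;165;218;236;314;377;418;520;583;590;640;651;656;670;671;675];
[::41;71;131;172;199;272;288;354;501;610;658;664;669;671;718;763;789;802];
[::27;78;129;158;228;262;276;388;439;447;468;559;662;668;669;670;713;752];
[::24;93;112;158;212;248;313;367;413;443;479;527;673;674;684;688;714;765];
[::59;67;138;167;189;265;299;385;430;502;577;590;629;667;672;674;679;683];
[::38;104;124;169;217;239;284;334;514;639;672;673;677;692;710;743;789;810];
[::51;73;122;175;191;269;295;395;427;496;575;592;622;669;676;677;678;689];
[::42;96;132;181;213;231;286;327;510;637;675;677;682;685;712;751;778;798];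
[::28;77;110;160;224;252;305;364;400;444;480;529;674;675;676;692;719;764];
[::46;84;140;177;229;237;274;319;523;650;675;679;680;689;693;747;788;807];
[::32;89;118;148;220;256;293;375;410;447;463;533;673;678;680;683;721;775];
[::39;71;134;183;193;245;311;391;438;486;586;594;613;653;678;679;686;691];
[::35;75;126;171;195;261;307;397;435;483;583;598;611;663;682;683;687;690];
[::26;81;116;156;228;260;289;374;403;452;476;535;676;681;683;685;724;772];
[::50;80;128;185;225;233;282;317;521;645;673;679;681;682;707;755;780;802];
[::54;100;120;173;209;243;278;330;507;633;672;685;686;688;699;744;795;818];
[::55;69;146;163;197;253;291;389;425;500;572;601;624;658;676;682;684;686];
[::22;101;108;152;216;264;309;362;417;454;468;537;680;684;685;691;728;761];
[::58;92;144;161;221;235;276;326;518;643;681;688;689;690;696;735;784;806];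
[::47;63;130;187;199;249;303;378;434;494;579;603;619;655;672;684;687;689];
[::34;85;114;150;204;268;301;371;405;458;466;540;675;678;687;688;731;770];
[::30;97;106;154;208;272;297;357;416;460;473;545;681;687;691;692;732;756];
[::62;88;136;165;205;241;280;321;504;632;680;686;690;692;703;739;794;814];
[::43;65;142;179;201;257;287;381;421;490;567;608;615;662;674;677;690;691];
[::46;97;107;159;198;260;288;379;526;599;678;694;695;698;711;743;759;795];
[::31;103;132;179;206;235;294;351;417;439;443;509;652;693;695;707;709;811];
[::40;69;138;170;224;246;285;316;462;558;583;619;642;693;694;701;703;722];
[::58;101;111;155;190;256;292;383;530;595;687;697;698;702;705;751;767;789];
[::48;67;122;182;228;250;281;318;467;548;586;615;630;696;698;699;708;730];
[::33;95;128;163;210;241;302;356;413;433;444;513;656;693;696;697;711;800];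
[::54;77;115;149;196;272;296;384;531;606;684;697;700;701;708;747;773;780];
[::56;75;134;178;204;254;275;323;470;557;567;629;640;699;701;706;712;727];
[::21;83;144;175;214;239;310;338;403;423;447;519;659;695;699;700;703;809];
[::29;79;140;167;218;243;298;348;400;422;452;512;660;696;703;704;705;801];
[::62;93;109;147;192;268;300;387;534;605;691;695;701;702;704;755;763;778];
[::44;73;126;186;220;258;273;324;472;550;579;624;635;702;703;710;713;734];
[::36;65;146;174;212;262;283;328;474;564;575;613;649;696;702;706;707;723];
[::25;99;124;187;222;237;290;344;416;437;454;505;664;700;705;707;712;817];
[::50;85;105;157;202;252;304;392;539;591;683;694;705;706;709;744;757;794];
[::23;91;136;171;226;231;314;340;410;431;458;524;666;697;699;709;710;804];
[::60;71;130;162;208;266;279;331;478;553;572;622;638;694;707;708;710;715];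
[::38;81;117;153;194;264;308;394;541;600;674;704;708;709;713;735;774;788];
[::52;63;142;166;216;270;277;335;481;562;577;611;646;693;698;712;713;717];
[::42;89;113;151;200;248;312;396;543;589;676;700;706;711;713;739;768;784];
[::27;87;120;183;230;233;306;346;405;426;460;517;671;704;710;711;712;815];
[::24;70;135;183;214;269;288;325;416;422;476;485;672;715;716;726;730;786];
[::60;96;109;150;190;259;309;343;451;544;608;611;640;709;714;716;721;725];
[::37;82;146;170;215;241;282;376;556;576;668;714;715;719;734;747;768;806];
[::52;80;115;154;192;255;313;353;448;538;601;613;638;711;718;719;720;731];
[::41;90;138;182;211;243;274;369;552;574;670;717;719;724;727;735;757;814];
[::28;68;119;187;226;261;292;322;417;423;463;487;677;716;717;718;734;785];
[::45;98;126;178;227;231;280;361;565;587;651;717;721;722;731;744;767;810];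
[::32;76;131;163;222;249;296;333;400;426;473;491;679;715;720;722;725;796];
[::40;92;113;158;194;271;289;349;459;528;592;615;649;695;720;721;728;733];
[::36;84;117;152;196;267;305;355;456;525;590;619;646;705;724;725;729;732];
[::26;74;123;179;230;245;300;332;413;431;466;493;682;718;723;725;727;793];
[::49;86;122;186;223;239;276;359;563;582;665;715;721;723;724;739;759;818];
[::53;78;142;174;207;235;286;372;549;570;657;714;727;728;730;755;774;807];
[::56;104;111;148;198;251;297;347;446;542;603;622;635;700;718;724;726;728];
[::22;66;143;171;218;265;304;320;405;433;480;495;686;722;726;727;733;782];
[::57;102;134;162;219;233;278;368;560;580;654;723;730;731;732;743;763;798];
[::48;88;105;160;200;263;293;336;455;536;598;624;642;697;714;726;729;731];
[::34;72;127;167;206;257;308;329;403;437;468;498;689;717;720;729;730;791];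
[::30;64;139;175;210;253;312;315;410;439;479;503;690;723;729;733;734;777];
[::61;94;130;166;203;237;284;363;546;569;661;722;728;732;734;751;773;802];
[::44;100;107;156;202;247;301;339;442;532;594;629;630;704;716;719;732;733];
[::32;70;144;168;211;264;290;440;526;569;687;710;718;736;737;738;753;798];
[::48;79;129;156;191;265;285;323;456;486;522;562;608;735;737;741;744;769];
[::62;86;113;174;225;232;291;351;364;380;479;636;656;735;736;747;750;791];
[::54;98;105;170;229;234;299;356;374;382;480;647;660;735;739;740;753;777];
[::34;68;136;176;223;248;294;432;530;570;691;712;725;738;740;746;749;802];
[::44;83;141;148;195;269;281;331;459;494;516;564;601;738;739;743;752;758];
[::42;94;111;186;205;236;307;338;371;386;463;644;666;736;742;743;744;786];
[::60;87;137;154;199;245;275;328;442;500;508;548;592;741;743;748;755;766];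
[::22;76;124;184;219;260;298;424;531;574;674;693;729;740;741;742;752;806];
[::30;74;120;172;227;252;302;420;534;576;684;707;720;736;741;745;746;807];
[::56;91;145;150;193;261;273;335;455;490;506;558;590;744;746;751;754;760];
[::38;102;107;182;221;238;295;348;375;388;476;648;659;739;744;745;749;782];
[::26;66;140;164;215;272;306;436;539;580;678;699;716;737;748;749;750;810];
[::58;90;117;166;213;240;287;344;367;390;468;641;652;742;747;749;755;796];
[::40;95;133;160;189;253;283;324;448;483;520;553;603;739;746;747;748;776];
[::52;99;121;152;201;249;279;316;446;502;515;550;598;737;747;751;752;762];
[::24;72;132;188;203;256;310;429;541;582;676;696;733;745;750;752;754;814];
[::50;78;109;178;209;242;311;340;357;393;466;631;671;740;743;750;751;785];
[::36;103;125;158;197;257;277;318;451;496;511;557;594;735;738;754;755;771];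
[::46;82;115;162;217;244;303;346;362;398;473;634;664;745;751;753;755;793];
[::28;64;128;180;207;268;314;428;543;587;683;703;726;742;748;753;754;818];
[::53;97;122;188;194;238;291;329;367;386;447;614;690;757;758;768;771;801];
[::33;87;135;157;217;249;274;402;560;606;661;707;718;756;758;761;776;778];
[::44;66;116;173;204;263;314;343;462;486;506;525;577;740;756;757;764;767];
[::29;99;119;159;213;257;276;408;546;600;657;693;725;760;761;765;769;780];
[::56;70;118;169;208;247;306;353;467;494;508;528;575;745;759;761;763;772];
[::37;101;126;180;200;236;299;315;364;393;458;618;686;757;759;760;776;809];
[::52;74;106;185;212;259;294;349;470;500;511;532;586;750;763;764;770;774];
[::23;95;131;147;229;265;278;414;556;591;670;703;729;760;762;764;772;784];
[::49;77;130;168;198;244;307;325;375;390;454;625;677;758;762;763;767;815];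
[::41;93;134;164;202;242;295;320;374;398;460;617;672;759;766;767;769;804];
[::60;68;114;181;216;251;290;355;472;490;515;536;583;742;765;767;773;775];
[::21;103;123;155;225;253;280;406;549;589;668;696;720;758;764;765;766;788];
[::31;91;143;151;209;245;282;401;565;605;654;712;716;756;769;770;771;789];
[::48;64;110;165;220;271;310;347;474;483;516;538;572;736;759;765;768;770];
[::61;85;138;184;196;234;287;333;362;388;452;609;689;762;768;769;774;800];
[::36;76;108;177;224;255;302;336;478;502;520;542;579;753;756;768;772;773];
[::45;81;142;176;190;240;311;322;371;380;443;628;682;760;763;771;773;817];
[::27;79;127;149;221;269;284;419;552;599;665;699;733;766;771;772;775;794];
[::25;83;139;153;205;261;286;412;563;595;651;710;726;762;770;775;776;795];
[::57;89;146;172;192;232;303;332;357;382;444;623;679;766;773;774;776;811];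
[::40;72;112;161;228;267;298;339;481;496;522;544;567;749;757;761;774;775];
[::54;80;139;159;193;251;279;325;344;371;426;593;732;738;778;779;789;792];
[::33;93;129;184;215;231;293;465;518;627;665;676;703;757;777;779;782;797];
[::43;74;108;174;206;270;303;385;399;483;528;548;640;777;778;785;788;803];
[::29;77;141;188;211;233;301;471;504;621;651;683;699;759;781;782;786;790];
[::55;76;112;170;210;262;287;395;404;486;536;550;638;780;782;784;793;808];
[::38;84;143;155;199;259;277;322;351;357;437;597;728;746;778;780;781;797];
[::51;64;116;186;214;250;299;391;407;490;542;553;649;784;785;791;795;813];
[::23;89;137;164;227;235;309;477;514;612;661;687;712;763;781;783;785;793];
[::50;88;119;149;197;267;285;333;348;367;433;604;719;752;779;783;784;788];
[::42;92;135;147;201;255;283;332;356;362;439;596;714;741;780;787;788;790];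
[::59;72;110;182;218;246;291;397;409;494;532;557;646;786;788;794;796;805];
[::21;81;145;180;223;237;297;469;507;610;654;678;710;767;779;785;786;787];
[::31;101;133;172;207;239;289;464;523;626;670;674;696;768;777;790;791;792];
[::47;68;106;166;222;266;311;389;411;496;525;558;635;780;786;789;791;799];
[::62;96;127;157;195;247;275;320;346;375;431;588;731;737;783;789;790;795];
[::35;66;118;178;226;258;295;378;415;500;544;562;642;777;789;793;794;816];
[::46;100;123;153;189;271;281;329;338;364;422;607;724;754;781;784;792;794];
[::27;85;121;168;219;241;313;482;510;620;657;691;707;773;787;792;793;796];
[::25;97;125;176;203;243;305;475;521;616;668;684;693;774;783;791;796;797];
[::58;104;131;151;191;263;273;315;340;374;423;602;721;748;787;794;795;797];
[::39;70;114;162;230;254;307;381;418;502;538;564;630;778;782;795;796;812];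
[::32;102;112;149;213;246;304;461;484;632;668;676;729;735;799;800;801;816];
[::47;87;121;179;192;244;309;365;435;520;528;564;629;790;798;800;804;807];
[::61;71;128;173;223;251;273;322;338;393;416;573;698;770;798;799;810;813];
[::53;63;140;169;227;259;275;332;340;398;417;584;702;756;798;802;803;816];
[::34;94;110;153;225;250;288;453;488;633;670;683;733;739;801;803;809;812];
[::43;99;125;163;196;240;313;373;438;522;536;558;622;779;801;802;806;815];
[::41;69;136;185;203;267;277;329;344;380;400;581;708;765;799;805;806;807];
[::59;95;129;175;200;234;289;370;421;506;542;550;613;787;804;806;811;818];
[::22;82;118;157;221;254;300;445;489;637;651;687;716;743;803;804;805;815];
[::30;78;116;151;229;258;292;441;492;639;665;678;726;744;799;804;808;809];
[::55;103;133;167;194;232;305;377;434;516;532;548;611;781;807;809;814;817];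
[::37;65;144;181;219;255;279;333;346;390;413;585;701;761;802;807;808;812];
[::26;98;108;147;217;262;312;457;497;643;657;674;720;747;800;811;812;813];
[::57;75;132;165;211;247;281;325;348;386;405;578;694;775;805;810;812;818];
[::39;91;137;187;190;242;297;366;427;511;525;562;624;797;802;809;810;811];
[::51;79;141;171;202;238;293;358;425;508;544;557;619;783;800;810;814;815];
[::24;90;114;159;205;266;296;450;499;645;654;691;718;751;808;813;815;817];
[::49;67;120;177;207;271;283;315;351;382;403;568;713;764;803;806;813;814];
[::35;83;145;183;198;236;301;360;430;515;538;553;615;792;798;801;817;818];
[::45;73;124;161;215;263;285;320;356;388;410;571;706;772;808;814;816;818];
[::28;86;106;155;209;270;308;449;501;650;661;684;725;755;805;811;816;817]].

Definition THR : seq (seq N) := [::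
[::2;1;12;10;64;63;66;65;68;67;70;69;72;71;74;73;76;75];
[::2;0;7;4;148;147;150;149;152;151;154;153;156;155;158;157;160;159];
[::1;0;20;16;232;231;234;233;236;235;238;237;240;239;242;241;244;243];
[::5;4;15;9;22;21;24;23;26;25;28;27;30;29;32;31;34;33];
[::7;5;3;1;162;161;166;165;170;169;174;173;178;177;182;181;186;185];
[::4;3;19;13;190;189;192;191;194;193;196;195;198;197;200;199;202;201];
[::8;7;18;11;106;105;108;107;110;109;112;111;114;113;116;115;118;117];
[::4;1;8;6;164;163;168;167;172;171;176;175;180;179;184;183;188;187];
[::7;6;17;14;274;273;276;275;278;277;280;279;282;281;284;283;286;285];
[::15;11;10;3;36;35;40;39;44;43;48;47;52;51;56;55;60;59];
[::12;11;9;0;78;77;82;81;86;85;90;89;94;93;98;97;102;101];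
[::18;10;9;6;120;119;124;123;128;127;132;131;136;135;140;139;144;143];
[::10;0;14;13;80;79;84;83;88;87;92;91;96;95;100;99;104;103];
[::19;14;12;5;204;203;208;207;212;211;216;215;220;219;224;223;228;227];
[::17;13;12;8;288;287;292;291;296;295;300;299;304;303;308;307;312;311];
[::9;3;17;16;38;37;42;41;46;45;50;49;54;53;58;57;62;61];
[::20;17;15;2;246;245;250;249;254;253;258;257;262;261;266;265;270;269];
[::14;8;16;15;290;289;294;293;298;297;302;301;306;305;310;309;314;313];
[::11;6;20;19;122;121;126;125;130;129;134;133;138;137;142;141;146;145];
[::13;5;20;18;206;205;210;209;214;213;218;217;222;221;226;225;230;229];
[::16;2;19;18;248;247;252;251;256;255;260;259;264;263;268;267;272;271];
[::22;3;105;63;287;247;369;327;456;435;544;502;634;571;701;659;788;767];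
[::21;3;122;80;273;232;396;354;474;411;553;511;628;607;728;686;806;743];
[::24;3;107;65;291;251;359;317;459;438;538;496;641;578;708;666;784;763];
[::23;3;126;84;275;234;392;350;462;399;562;520;623;602;714;672;814;751];
[::26;3;109;67;295;255;368;326;442;421;528;486;647;584;706;664;795;774];
[::25;3;130;88;277;236;383;341;472;409;558;516;614;593;724;682;810;747];
[::28;3;111;69;299;259;361;319;455;434;525;483;636;573;713;671;794;773];
[::27;3;134;92;279;238;379;337;467;404;564;522;609;588;719;677;818;755];
[::30;3;113;71;303;263;376;334;448;427;542;500;631;568;702;660;780;759];
[::29;3;138;96;281;240;394;352;481;418;557;515;625;604;732;690;807;744];
[::32;3;115;73;307;267;363;321;446;425;536;494;648;585;694;652;789;768];
[::31;3;142;100;283;242;387;345;470;407;548;506;618;597;721;679;798;735];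
[::34;3;117;75;311;271;372;330;451;430;532;490;644;581;698;656;778;757];
[::33;3;146;104;285;244;384;342;478;415;550;508;617;596;731;689;802;739];
[::36;9;203;147;274;248;351;333;468;444;549;531;600;576;681;663;816;792];
[::35;9;205;164;288;231;393;375;423;405;507;489;639;621;723;705;771;753];
[::38;15;106;79;206;148;378;318;477;429;535;505;646;592;716;668;809;761];
[::37;15;121;64;204;163;360;336;450;414;547;493;613;583;710;674;782;746];
[::40;9;207;149;276;252;356;329;479;452;556;541;589;574;680;653;812;797];
[::39;9;209;168;292;233;398;371;431;416;514;499;637;610;722;695;776;749];
[::42;15;108;83;210;150;381;324;482;428;533;509;649;598;718;670;804;765];
[::41;15;125;66;208;167;366;339;449;419;551;491;619;586;712;676;786;741];
[::44;9;211;151;278;256;338;320;476;458;563;539;599;587;692;662;803;779];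
[::43;9;213;172;296;235;380;362;437;413;521;497;650;620;734;704;758;740];
[::46;15;110;87;214;152;385;331;464;440;545;512;630;603;720;651;817;772];
[::45;15;129;68;212;171;373;343;461;401;554;503;624;567;693;678;793;754];
[::48;9;215;153;280;260;348;315;480;447;552;543;591;582;688;655;799;790];
[::47;9;217;176;300;237;390;357;426;417;510;501;645;612;730;697;769;736];
[::50;15;112;91;218;154;389;323;475;436;540;513;642;594;725;665;815;764];
[::49;15;133;70;216;175;365;347;457;412;555;498;615;579;707;683;785;752];
[::52;9;219;155;282;264;344;332;473;443;546;534;606;570;675;669;813;783];
[::51;9;221;180;304;239;386;374;422;410;504;492;633;627;717;711;762;750];
[::54;15;114;95;222;156;391;316;469;424;529;517;638;590;726;657;801;756];
[::53;15;137;72;220;179;358;349;445;406;559;487;611;575;699;684;777;738];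
[::56;9;223;157;284;268;340;325;463;460;565;526;595;580;685;658;808;781];
[::55;9;225;184;308;241;382;367;439;400;523;484;643;616;727;700;760;745];
[::58;15;116;99;226;158;395;335;465;432;537;519;635;608;729;654;811;775];
[::57;15;141;74;224;183;377;353;453;402;561;495;629;572;696;687;796;748];
[::60;9;227;159;286;272;346;322;466;454;560;530;605;569;673;667;805;787];
[::59;9;229;188;312;243;388;364;433;403;518;488;632;626;715;709;766;742];
[::62;15;118;103;230;160;397;328;471;420;527;524;640;601;733;661;800;770];
[::61;15;145;76;228;187;370;355;441;408;566;485;622;577;703;691;791;737];
[::64;105;0;21;289;205;711;801;533;556;665;364;471;688;497;603;335;340];
[::63;121;0;38;274;190;637;783;732;623;769;755;454;384;439;587;516;407];
[::66;107;0;23;293;209;705;809;540;552;651;374;469;692;484;608;328;346];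
[::65;125;0;42;276;192;645;792;728;609;758;747;443;394;433;580;506;415];
[::68;109;0;25;297;213;697;815;537;565;661;371;482;673;492;590;318;351];
[::67;129;0;46;278;194;643;790;719;618;766;739;452;392;423;570;515;411];
[::70;111;0;27;301;217;695;804;545;563;654;375;477;685;488;601;316;344];
[::69;133;0;50;280;196;650;797;714;614;760;735;444;396;422;569;508;418];
[::72;113;0;29;305;221;709;800;535;549;670;367;465;680;501;594;331;338];
[::71;137;0;54;282;198;639;787;731;628;776;751;460;387;437;582;522;409];
[::74;115;0;31;309;225;704;817;527;560;657;357;475;675;489;592;324;356];
[::73;141;0;58;284;200;632;779;724;617;762;744;447;379;431;576;511;399];
[::76;117;0;33;313;229;700;811;529;546;668;362;464;681;499;598;323;348];
[::75;145;0;62;286;202;633;781;721;625;771;743;458;383;426;574;520;404];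
[::78;10;245;273;161;206;432;451;345;370;584;649;503;562;764;780;677;699];
[::77;10;247;290;163;189;402;478;321;397;593;619;512;538;752;807;671;726];
[::80;106;12;37;248;162;610;702;813;641;736;773;372;466;400;486;599;425];
[::79;122;12;22;246;164;777;717;551;541;683;441;388;655;567;521;353;325];
[::82;10;249;275;165;210;420;448;342;358;585;642;495;564;772;788;682;710];
[::81;10;251;294;167;191;408;481;330;391;597;615;519;525;754;806;664;716];
[::84;108;12;41;252;166;612;701;816;636;740;774;376;473;403;494;595;430];
[::83;126;12;24;250;168;782;723;555;543;678;445;386;662;572;523;355;322];
[::86;10;253;277;169;214;429;459;354;366;568;635;487;548;770;794;689;707];
[::85;10;255;298;171;193;414;462;327;381;604;629;517;536;737;818;656;725];
[::88;110;12;45;256;170;616;713;799;648;742;757;359;479;405;500;606;435];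
[::87;130;12;26;254;172;785;730;561;526;691;449;398;667;575;504;336;333];
[::90;10;257;279;173;218;424;456;352;360;581;630;485;558;775;784;679;712];
[::89;10;259;302;175;195;406;474;334;378;596;624;524;528;748;814;652;718];
[::92;112;12;49;260;174;620;708;812;647;745;768;369;468;410;490;605;427];
[::91;134;12;28;258;176;786;722;554;539;687;450;393;658;577;518;349;332];
[::94;10;261;281;177;222;440;446;341;377;573;646;498;553;765;778;672;703];
[::93;10;263;306;179;197;401;470;326;395;588;613;513;544;741;802;666;733];
[::96;114;12;53;264;178;621;698;805;634;749;763;363;463;413;483;591;421];
[::95;138;12;30;262;180;791;715;547;531;676;453;382;653;579;510;343;320];
[::98;10;265;283;181;226;428;455;350;365;571;640;493;550;756;795;690;693];
[::97;10;267;310;183;199;419;467;317;389;607;622;505;532;738;810;660;720];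
[::100;116;12;57;268;182;626;706;803;644;750;759;361;480;416;502;600;438];
[::99;142;12;32;266;184;793;734;566;530;684;457;390;669;583;507;339;329];
[::102;10;269;285;185;230;436;442;337;373;578;638;491;557;761;789;686;696];
[::101;10;271;314;187;201;412;472;319;385;602;611;509;542;746;798;659;729];
[::104;118;12;61;272;186;627;694;808;631;753;767;368;476;417;496;589;434];
[::103;146;12;34;270;188;796;727;559;534;674;461;380;663;586;514;347;315];
[::106;63;21;6;245;203;491;669;738;514;322;408;707;730;377;539;624;382];
[::105;79;37;6;231;189;574;602;690;762;790;342;433;818;460;470;558;650];
[::108;65;23;6;249;207;498;663;746;510;332;406;693;734;370;526;629;388];
[::107;83;41;6;233;191;582;588;686;771;779;352;422;810;454;478;548;643];
[::110;67;25;6;253;211;495;655;752;523;329;419;703;715;360;534;611;393];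
[::109;87;45;6;235;193;580;597;677;769;787;350;431;802;444;474;557;633];
[::112;69;27;6;257;215;503;653;741;521;333;414;696;727;358;530;622;386];
[::111;91;49;6;237;195;587;593;672;776;781;354;423;798;443;481;550;632];
[::114;71;29;6;261;219;493;667;737;507;325;402;712;722;373;543;615;380];
[::113;95;53;6;239;197;576;607;689;766;797;345;439;814;458;472;564;645];
[::116;73;31;6;265;223;485;662;754;518;315;412;699;717;366;531;613;398];
[::115;99;57;6;241;199;569;596;682;758;783;337;426;807;452;462;553;639];
[::118;75;33;6;269;227;487;658;748;504;320;401;710;723;365;541;619;390];
[::117;103;61;6;243;201;570;604;679;760;792;341;437;806;447;467;562;637];
[::120;11;289;232;204;162;430;453;328;387;586;647;520;545;759;785;657;719];
[::119;11;287;246;190;148;415;465;355;363;598;614;496;554;744;815;684;713];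
[::122;64;38;18;288;161;589;578;750;660;799;403;330;794;463;446;620;528];
[::121;80;22;18;290;147;509;756;675;499;420;346;725;697;395;630;563;367];
[::124;11;293;234;208;166;427;441;316;384;579;648;522;537;767;793;668;724];
[::123;11;291;250;192;150;418;471;349;372;594;618;483;561;743;817;674;706];
[::126;66;42;18;292;165;591;573;753;659;803;410;334;795;466;451;616;536];
[::125;84;24;18;294;149;513;761;681;501;424;344;720;704;397;635;565;364];
[::128;11;297;236;212;170;438;450;324;396;572;631;506;529;773;791;665;731];
[::127;11;295;254;194;152;399;477;339;369;608;625;494;559;755;800;683;698];
[::130;68;46;18;296;169;595;585;736;671;805;416;317;778;468;456;627;542];
[::129;88;26;18;298;151;519;764;688;484;428;356;733;709;378;638;546;375];
[::132;11;301;238;216;174;435;445;318;394;567;644;516;527;763;796;670;721];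
[::131;11;299;258;196;154;411;469;336;376;603;617;486;566;751;811;676;694];
[::134;70;50;18;300;173;599;584;749;666;808;405;327;789;473;448;626;532];
[::133;92;28;18;302;153;512;765;680;497;429;351;729;700;391;640;560;374];
[::136;11;305;240;220;178;425;461;335;383;583;636;511;540;757;786;661;714];
[::135;11;303;262;198;156;407;464;353;368;592;609;502;555;739;804;691;708];
[::138;72;54;18;304;177;600;571;742;656;812;400;321;784;476;442;612;525];
[::137;96;30;18;306;155;505;770;673;489;432;340;718;695;385;642;552;362];
[::140;11;309;242;224;182;434;449;323;392;577;634;508;535;774;777;651;732];
[::139;11;307;266;200;158;404;482;347;359;601;628;490;547;747;801;678;702];
[::142;74;58;18;308;181;605;581;740;664;813;417;319;780;479;459;621;544];
[::141;100;32;18;310;157;524;772;692;488;436;348;726;711;381;646;549;371];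
[::144;11;313;244;228;186;421;457;331;379;575;641;515;533;768;782;654;728];
[::143;11;311;270;202;160;409;475;343;361;590;623;500;551;735;809;687;701];
[::146;76;62;18;312;185;606;568;745;652;816;413;326;788;480;455;610;538];
[::145;104;34;18;314;159;517;775;685;492;440;338;716;705;389;649;556;357];
[::148;203;290;1;35;122;434;373;810;572;648;481;786;487;763;703;596;457];
[::147;206;287;1;37;120;510;626;656;679;326;727;740;350;398;410;542;564];
[::150;207;294;1;39;126;421;377;798;577;644;474;785;493;773;699;604;461];
[::149;210;291;1;41;124;521;627;660;689;321;715;745;337;390;405;544;558];
[::152;211;298;1;43;130;430;358;807;583;634;467;796;498;768;712;602;441];
[::151;214;295;1;45;128;518;610;666;686;334;723;750;345;382;417;525;550];
[::154;215;302;1;47;134;425;370;802;575;631;462;793;491;774;710;607;453];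
[::153;218;299;1;49;132;523;621;659;690;330;717;742;341;380;416;538;548];
[::156;219;306;1;51;138;438;365;818;567;647;478;782;485;767;696;597;449];
[::155;222;303;1;53;136;514;616;652;682;319;734;736;354;393;403;532;562];
[::158;223;310;1;55;142;427;360;806;586;641;472;791;503;757;707;588;445];
[::157;226;307;1;57;140;504;612;671;672;327;722;753;342;388;413;528;557];
[::160;227;314;1;59;146;435;366;814;579;636;470;777;495;759;693;593;450];
[::159;230;311;1;61;144;507;620;664;677;317;730;749;352;386;400;536;553];
[::162;245;288;4;77;121;817;776;555;534;469;426;667;687;601;643;339;320];
[::161;248;289;4;79;119;754;797;492;513;406;447;729;709;622;580;362;381];
[::164;204;247;7;38;78;698;552;605;721;685;803;368;392;500;356;473;522];
[::163;205;246;7;36;80;455;635;747;331;585;529;765;418;784;436;617;661];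
[::166;249;292;4;81;125;811;769;554;531;477;437;669;691;590;632;347;325];
[::165;252;293;4;83;123;748;790;489;512;414;458;733;711;611;569;367;389];
[::168;208;251;7;42;82;702;563;606;731;673;808;363;379;502;348;468;516];
[::167;209;250;7;40;84;442;640;735;335;581;535;764;411;794;440;625;657];
[::170;253;296;4;85;129;801;760;566;543;475;433;653;674;598;639;353;332];
[::169;256;297;4;87;127;738;781;501;524;412;454;716;695;619;576;374;395];
[::172;212;255;7;46;86;708;560;589;728;681;813;376;387;483;340;480;508];
[::171;213;254;7;44;88;451;646;744;316;571;540;775;404;789;420;623;670];
[::174;257;300;4;89;133;800;758;561;541;482;439;663;684;592;633;343;322];
[::173;260;301;4;91;131;737;779;499;519;419;460;726;705;613;570;364;385];
[::176;216;259;7;50;90;701;565;600;732;675;805;372;383;496;338;479;506];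
[::175;217;258;7;48;92;446;638;739;328;568;533;772;399;795;432;628;668];
[::178;261;304;4;93;137;815;771;551;530;471;431;658;678;608;650;336;315];
[::177;264;305;4;95;135;752;792;488;509;408;452;720;700;629;587;357;378];
[::180;220;263;7;54;94;694;556;595;724;692;799;361;396;490;351;466;520];
[::179;221;262;7;52;96;459;630;755;323;584;527;761;415;788;428;618;654];
[::182;265;308;4;97;141;809;766;559;539;464;422;655;676;594;637;355;333];
[::181;268;309;4;99;139;746;787;497;517;401;443;718;697;615;574;375;397];
[::184;224;267;7;58;98;713;546;591;714;680;816;369;384;486;346;476;515];
[::183;225;266;7;56;100;448;649;743;318;578;545;770;409;778;424;609;665];
[::186;269;312;4;101;145;804;762;547;526;465;423;662;683;603;645;349;329];
[::185;272;313;4;103;143;741;783;484;505;402;444;725;704;624;582;371;391];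
[::188;228;271;7;62;102;706;549;599;719;688;812;359;394;494;344;463;511];
[::187;229;270;7;60;104;456;642;751;324;573;537;756;407;780;429;614;651];
[::190;290;231;5;106;78;749;793;540;546;417;445;673;654;616;577;324;338];
[::189;274;246;5;120;64;812;772;504;498;480;424;696;715;595;640;380;366];
[::192;294;233;5;108;82;736;796;545;549;413;450;675;661;626;575;323;340];
[::191;276;250;5;124;66;799;775;507;503;476;429;703;717;605;638;382;365];
[::194;298;235;5;110;86;745;777;527;552;403;457;680;668;621;586;335;344];
[::193;278;254;5;128;68;808;756;510;485;466;436;710;722;600;649;386;377];
[::196;302;237;5;112;90;740;791;537;556;400;449;681;657;627;583;331;346];
[::195;280;258;5;132;70;803;770;514;495;463;428;699;723;606;646;388;373];
[::198;306;239;5;114;94;753;785;533;560;416;441;685;651;620;572;318;348];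
[::197;282;262;5;136;72;816;764;518;491;479;420;693;727;599;635;390;360];
[::200;310;241;5;116;98;742;782;529;563;410;461;688;670;610;579;328;351];
[::199;284;266;5;140;74;805;761;521;487;473;440;712;730;589;642;393;370];
[::202;314;243;5;118;102;750;786;535;565;405;453;692;665;612;567;316;356];
[::201;286;270;5;144;76;813;765;523;493;468;432;707;734;591;630;398;358];
[::204;147;245;35;13;105;404;385;608;795;618;804;448;517;751;733;475;581];
[::203;163;232;38;13;119;632;501;689;652;341;758;700;317;422;371;557;525];
[::206;164;289;36;19;63;467;774;629;343;597;559;427;741;814;644;412;691];
[::205;148;273;37;19;77;731;569;543;694;779;658;383;359;515;443;329;483];
[::208;149;249;39;13;107;409;395;601;789;617;815;456;505;755;726;464;568];
[::207;167;234;42;13;123;633;497;690;656;345;760;709;319;423;357;553;528];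
[::210;168;293;40;19;65;472;768;622;353;596;547;435;752;818;631;401;684];
[::209;150;275;41;19;81;732;570;539;698;781;667;387;361;511;444;315;486];
[::212;151;253;43;13;109;415;391;592;780;628;811;455;513;735;718;471;578];
[::211;171;236;46;13;127;637;488;672;659;352;762;705;321;426;367;564;532];
[::214;172;297;44;19;67;478;759;613;349;607;555;434;748;798;641;408;676];
[::213;152;277;45;19;85;714;574;530;701;783;663;394;363;522;447;325;490];
[::216;153;257;47;13;111;407;397;590;778;625;817;459;509;747;716;465;571];
[::215;175;238;50;13;131;639;484;686;660;342;766;711;326;431;362;562;536];
[::218;176;301;48;19;69;470;757;611;355;604;551;438;754;810;634;402;674];
[::217;154;279;49;19;89;728;576;526;702;787;669;384;368;520;452;320;494];
[::220;155;261;51;13;113;399;389;603;794;614;809;451;524;743;729;482;585];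
[::219;179;240;54;13;135;643;499;679;664;337;769;704;327;433;375;550;538];
[::222;180;305;52;19;71;462;773;624;347;593;566;430;746;806;648;419;687];
[::221;156;281;53;19;93;721;580;541;706;790;662;379;369;508;454;333;496];
[::224;157;265;55;13;115;418;378;598;788;623;800;442;512;739;725;469;573];
[::223;183;242;58;13;139;645;492;677;666;354;771;695;330;437;364;558;542];
[::226;184;309;56;19;73;481;767;619;336;602;554;421;737;802;636;406;683];
[::225;158;283;57;19;97;719;582;534;708;792;653;396;372;516;458;322;500];
[::228;159;269;59;13;117;411;381;594;784;609;801;446;519;744;720;477;584];
[::227;187;244;62;13;143;650;489;682;671;350;776;697;334;439;374;548;544];
[::230;188;313;60;19;75;474;763;615;339;588;561;425;738;807;647;414;678];
[::229;160;285;61;19;101;724;587;531;713;797;655;392;376;506;460;332;502];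
[::232;288;189;106;2;36;442;720;494;347;391;708;568;561;778;524;361;676];
[::231;273;204;119;2;22;775;591;530;737;428;401;808;662;642;479;332;611];
[::234;292;191;108;2;40;446;729;490;343;378;713;571;566;780;517;368;683];
[::233;275;208;123;2;24;770;599;534;738;436;402;805;658;630;480;333;613];
[::236;296;193;110;2;44;448;726;502;355;389;694;573;547;784;509;372;687];
[::235;277;212;127;2;26;761;605;541;741;432;406;816;669;640;463;315;615];
[::238;300;195;112;2;48;451;733;500;353;381;706;578;559;788;505;363;678];
[::237;279;216;131;2;28;756;595;531;746;440;408;813;667;635;476;329;619];
[::240;304;197;114;2;52;455;725;486;339;397;701;581;554;789;519;359;674];
[::239;281;220;135;2;30;772;589;526;748;429;412;803;655;649;468;322;622];
[::242;308;199;116;2;56;456;716;496;349;385;698;584;551;794;513;376;691];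
[::241;283;224;139;2;32;765;606;543;752;420;414;812;663;638;466;320;624];
[::244;312;201;118;2;60;459;718;483;336;395;702;585;555;795;512;369;684];
[::243;285;228;143;2;34;764;600;539;754;424;419;799;653;646;473;325;629];
[::246;161;203;77;105;16;636;627;724;680;742;768;394;348;438;413;508;565];
[::245;164;190;80;120;16;570;588;664;695;798;787;334;357;458;462;532;484];
[::248;287;163;78;20;21;811;791;645;518;482;760;734;461;594;575;431;386];
[::247;274;162;79;20;35;548;651;409;365;625;672;316;495;337;527;739;712];
[::250;165;207;81;107;16;647;621;721;688;750;757;396;338;434;400;515;560];
[::249;168;192;84;124;16;576;593;652;697;802;783;327;362;460;467;542;488];
[::252;291;167;82;20;23;800;777;650;504;475;766;727;453;603;583;426;393];
[::251;276;166;83;20;39;550;654;407;373;628;677;318;485;341;529;744;707];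
[::254;169;211;85;109;16;644;612;732;685;749;767;379;346;425;410;520;549];
[::253;172;194;88;128;16;582;596;660;700;806;797;319;364;443;470;538;489];
[::256;295;171;86;20;25;809;786;632;514;465;771;717;445;601;579;439;390];
[::255;278;170;87;20;43;553;657;418;370;609;679;323;493;342;533;751;696];
[::258;173;215;89;111;16;648;610;731;692;753;759;392;340;421;403;511;546];
[::257;176;196;92;132;16;574;597;656;704;807;792;317;367;454;472;544;492];
[::260;299;175;90;20;27;801;782;643;507;464;762;715;441;608;586;437;398];
[::259;280;174;91;20;47;557;661;415;377;623;682;324;487;345;535;743;693];
[::262;177;219;93;113;16;641;626;719;681;745;774;384;356;435;417;506;563];
[::261;180;198;96;136;16;569;602;671;705;810;781;330;371;447;474;536;497];
[::264;303;179;94;20;29;817;796;637;523;477;758;730;457;598;577;423;388];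
[::263;282;178;95;20;51;558;665;404;366;617;686;328;503;350;537;735;710];
[::266;181;223;97;115;16;631;620;728;673;736;763;383;344;430;405;522;556];
[::265;184;200;100;140;16;587;604;659;709;814;790;326;374;444;478;525;499];
[::268;307;183;98;20;31;804;785;633;510;471;776;723;450;590;567;433;380];
[::267;284;182;99;20;55;562;668;411;358;614;689;331;491;352;540;755;703];
[::270;185;227;101;117;16;634;616;714;675;740;773;387;351;427;416;516;552];
[::269;188;202;104;144;16;580;607;666;711;818;779;321;375;452;481;528;501];
[::272;311;187;102;20;33;815;793;639;521;469;769;722;449;592;572;422;382];
[::271;286;186;103;20;59;564;670;399;360;618;690;335;498;354;545;747;699];
[::274;232;206;77;22;8;796;800;488;612;449;704;745;464;579;590;374;416];
[::273;248;190;64;35;8;678;536;421;389;631;349;666;519;566;319;757;718];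
[::276;234;210;81;24;8;791;801;492;620;457;700;742;465;567;592;375;417];
[::275;252;192;66;39;8;687;532;425;385;634;336;671;524;559;326;759;725];
[::278;236;214;85;26;8;782;804;499;626;453;711;753;469;577;594;357;400];
[::277;256;194;68;43;8;684;544;427;397;636;347;652;505;551;330;763;729];
[::280;238;218;89;28;8;777;809;489;616;461;709;750;471;572;598;371;413];
[::279;260;196;70;47;8;691;542;430;395;641;339;664;517;547;321;767;720];
[::282;240;222;93;30;8;793;811;484;610;450;697;740;475;586;601;364;405];
[::281;264;198;72;51;8;683;528;434;381;644;355;659;512;561;317;768;716];
[::284;242;226;97;32;8;786;815;501;627;441;705;749;477;575;603;362;403];
[::283;268;200;74;55;8;674;538;435;391;647;343;656;509;555;334;773;733];
[::286;244;230;101;34;8;785;817;497;621;445;695;736;482;583;608;367;410];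
[::285;272;202;76;59;8;676;525;438;378;648;353;660;513;554;327;774;726];
[::288;247;148;120;21;14;748;560;582;770;419;440;692;781;615;344;452;638];
[::287;231;161;121;36;14;472;506;693;323;714;358;604;537;802;379;485;670];
[::290;205;162;119;63;17;606;573;722;682;789;805;390;352;476;459;523;550];
[::289;189;147;122;78;17;609;633;653;706;766;735;315;376;399;437;526;490];
[::292;251;150;124;23;14;737;546;587;756;412;432;685;787;624;351;447;646];
[::291;233;165;125;40;14;470;508;696;331;719;360;607;527;807;383;487;665];
[::294;209;166;123;65;17;600;584;730;679;778;813;380;354;463;455;518;557];
[::293;191;149;126;82;17;614;639;655;694;762;739;320;369;404;439;530;500];
[::296;255;152;128;25;14;746;556;569;765;402;424;675;792;622;348;460;642];
[::295;235;169;129;44;14;481;511;699;328;721;365;588;535;814;384;491;654];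
[::298;213;170;127;67;17;591;581;727;690;788;812;388;337;473;446;507;562];
[::297;193;151;130;86;17;617;645;658;702;776;743;322;361;407;422;531;496];
[::300;259;154;132;27;14;738;549;580;761;401;420;673;783;629;356;458;649];
[::299;237;173;133;48;14;478;515;703;335;724;366;602;529;806;387;493;651];
[::302;217;174;131;69;17;589;585;734;689;780;816;382;350;466;442;504;553];
[::301;195;153;134;90;17;618;637;662;698;771;744;325;359;409;433;534;502];
[::304;263;156;136;29;14;754;565;574;775;414;436;688;779;619;346;444;640];
[::303;239;177;137;52;14;467;516;707;324;728;370;596;545;798;392;495;668];
[::306;221;178;135;71;17;605;578;723;677;795;808;398;342;480;456;521;548];
[::305;197;155;138;94;17;623;632;663;713;760;747;329;372;411;426;539;494];
[::308;267;158;140;31;14;741;552;570;764;408;429;681;797;611;338;454;630];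
[::307;241;181;141;56;14;474;520;710;316;731;373;593;533;818;394;498;661];
[::310;225;182;139;73;17;599;568;715;686;784;799;386;341;468;451;514;564];
[::309;199;157;142;98;17;625;650;667;701;769;751;332;368;415;423;541;483];
[::312;271;160;144;33;14;752;563;576;772;406;428;680;790;613;340;443;635];
[::311;243;185;145;60;14;462;522;712;318;732;377;597;540;810;396;503;657];
[::314;229;186;143;75;17;595;571;717;672;794;803;393;345;479;448;510;558];
[::313;201;159;146;102;17;628;643;669;708;758;755;333;363;418;431;543;486];
[::348;796;485;815;732;761;609;317;316;331;327;47;115;290;210;236;104;177];
[::391;695;427;451;750;548;474;317;315;326;322;53;123;172;308;248;69;201];
[::359;419;595;507;632;574;683;316;315;335;320;23;98;160;258;129;204;282];
[::378;697;435;448;753;550;462;320;319;332;321;37;131;184;312;252;67;197];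
[::361;412;605;514;633;582;678;320;318;328;325;27;102;156;254;141;208;274];
[::338;791;487;817;728;765;614;335;319;318;317;43;117;294;218;242;96;161];
[::363;402;600;521;637;580;691;332;323;322;318;31;78;150;270;137;212;280];
[::346;782;491;800;719;772;617;326;323;321;316;59;105;298;226;240;84;173];
[::389;700;434;459;736;553;472;322;321;334;329;49;139;180;288;256;75;191];
[::381;704;438;456;749;557;467;326;325;333;330;41;127;188;304;260;73;189];
[::340;777;493;811;714;764;618;328;326;324;319;55;113;302;214;244;80;165];
[::368;401;606;510;639;587;687;322;316;325;324;25;94;148;266;145;216;276];
[::369;414;599;504;643;576;676;331;329;328;315;21;86;158;250;133;220;286];
[::397;705;430;446;742;558;481;325;319;329;327;61;119;176;296;264;65;199];
[::356;793;495;804;731;756;623;334;328;327;323;39;109;306;206;238;100;185];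
[::372;408;589;523;645;569;684;333;332;331;324;33;82;154;262;121;224;278];
[::385;709;421;455;740;562;470;327;315;332;330;45;143;164;292;268;71;195];
[::344;786;498;801;724;775;625;321;318;331;330;51;107;310;230;232;92;169];
[::351;785;503;809;721;770;628;330;324;335;334;35;111;314;222;234;88;181];
[::376;406;591;518;650;570;674;329;323;335;333;29;90;152;246;125;228;284];
[::395;711;425;442;745;564;478;320;317;334;333;57;135;168;300;272;63;193];
[::360;730;411;771;481;459;532;338;337;345;344;38;132;243;225;276;88;177];
[::379;436;569;627;499;651;591;338;336;355;340;28;101;220;116;297;150;248];
[::320;800;517;701;793;647;741;43;337;336;353;350;146;249;175;307;189;71];
[::366;734;399;776;474;455;542;341;340;351;342;42;128;239;229;280;100;161];
[::325;801;505;708;796;648;752;55;355;341;339;337;138;257;171;311;191;63];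
[::383;440;570;621;501;654;599;340;339;349;346;26;93;204;118;309;154;252];
[::384;420;574;612;484;657;605;351;344;343;339;34;81;216;106;305;158;256];
[::373;715;409;758;467;446;538;344;342;354;348;46;144;233;205;284;96;173];
[::332;804;513;706;777;631;748;51;345;343;342;336;126;265;187;287;193;69];
[::387;432;576;610;497;661;595;344;336;347;346;32;77;208;114;313;152;260];
[::322;809;509;713;791;644;754;59;349;347;345;341;122;253;183;303;195;65];
[::365;727;404;769;462;442;544;346;345;356;352;50;140;231;221;278;104;165];
[::315;811;524;702;785;636;746;47;354;350;349;343;142;245;167;295;197;75];
[::358;722;418;762;478;456;536;346;341;350;348;54;124;241;213;274;92;185];
[::392;428;580;626;489;665;589;353;349;348;338;24;97;228;110;301;148;264];
[::333;815;512;694;782;634;737;35;342;339;353;352;134;269;179;291;199;67];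
[::394;424;582;620;488;668;606;356;353;351;347;30;89;212;108;289;160;268];
[::377;717;407;760;472;451;525;350;338;352;351;58;136;237;209;286;80;169];
[::396;429;587;616;492;670;600;348;343;356;355;22;85;224;112;293;156;272];
[::370;723;415;766;470;448;528;340;337;356;354;62;120;235;217;282;84;181];
[::329;817;519;698;786;641;738;39;352;347;355;354;130;261;163;299;201;73];
[::390;527;775;752;690;588;782;359;358;373;369;48;73;246;208;178;146;277];
[::349;448;653;430;813;411;506;54;359;357;368;364;268;151;81;288;111;202];
[::317;616;482;549;569;725;637;23;358;357;377;362;140;187;206;87;302;239];
[::336;456;655;427;816;399;508;38;362;361;374;363;272;157;89;292;109;198];
[::319;626;475;556;570;720;645;27;362;360;370;367;144;179;210;99;298;231];
[::380;529;770;754;686;593;786;377;361;360;359;44;75;250;216;162;138;283];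
[::321;621;465;563;574;733;643;31;374;365;364;360;120;167;214;95;314;237];
[::388;533;761;737;677;596;793;368;365;363;358;60;63;254;224;174;126;281];
[::347;455;658;438;799;409;511;50;364;363;376;371;248;155;97;296;117;192];
[::339;459;662;435;812;404;515;42;368;367;375;372;264;159;85;300;115;190];
[::382;535;756;748;672;597;785;370;368;366;361;56;71;258;212;166;122;285];
[::326;627;464;552;576;729;650;25;364;358;367;366;136;163;218;103;310;233];
[::327;620;477;546;580;718;639;21;373;371;370;357;128;183;222;91;294;243];
[::355;451;663;425;805;418;516;62;367;361;371;369;256;153;77;304;107;200];
[::398;537;772;741;689;602;777;376;370;369;365;40;67;262;204;186;142;279];
[::330;610;471;565;582;726;632;33;375;374;373;366;124;175;226;79;306;235];
[::343;442;667;434;803;407;520;46;369;357;374;372;252;147;101;308;113;196];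
[::386;540;765;738;682;604;796;363;360;373;372;52;65;266;228;170;134;273];
[::393;545;764;746;679;607;791;372;366;377;376;36;69;270;220;182;130;275];
[::334;612;469;560;587;716;633;29;371;365;377;375;132;171;230;83;290;241];
[::353;446;669;421;808;415;522;58;362;359;376;375;260;149;93;312;105;194];
[::318;474;688;792;418;490;438;37;380;379;387;386;223;286;90;233;130;178];
[::337;632;457;606;541;612;693;28;380;378;397;382;143;222;167;253;74;288];
[::362;559;737;659;772;804;584;44;379;378;395;392;104;293;154;113;190;267];
[::324;462;692;797;411;500;434;41;383;382;393;384;227;282;86;237;142;162];
[::367;547;738;666;775;815;585;56;397;383;381;379;96;301;152;105;192;271];
[::341;633;461;600;543;620;696;26;382;381;391;388;135;206;175;265;76;292];
[::342;637;441;591;526;626;699;34;393;386;385;381;123;218;183;261;64;296];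
[::331;472;673;779;404;496;425;45;386;384;396;390;203;276;102;241;138;174];
[::374;555;741;664;756;811;568;52;387;385;384;378;84;309;160;111;194;247];
[::345;639;453;589;539;616;703;32;386;378;389;388;119;210;171;269;72;300];
[::364;551;746;671;770;817;581;60;391;389;387;383;80;297;158;107;196;263];
[::323;467;685;790;399;502;421;49;388;387;398;394;219;274;98;235;146;166];
[::357;566;748;660;764;809;573;48;396;392;391;385;100;289;150;117;198;255];
[::316;481;680;783;415;494;435;53;388;383;392;390;211;284;82;231;134;186];
[::350;643;449;605;531;610;707;24;395;391;390;380;139;230;163;257;68;304];
[::375;554;752;652;761;800;571;36;384;381;395;394;92;313;156;109;200;251];
[::352;645;445;599;530;627;710;30;398;395;393;389;131;214;187;245;66;308];
[::335;470;675;781;409;483;430;57;392;380;394;393;207;280;94;243;122;170];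
[::354;650;450;595;534;621;712;22;390;385;398;397;127;226;179;249;70;312];
[::328;478;681;787;407;486;427;61;382;379;398;396;215;278;78;239;126;182];
[::371;561;754;656;765;801;578;40;394;389;397;396;88;305;148;115;202;259];
[::462;779;339;638;389;360;653;128;272;219;401;400;408;405;24;176;290;74];
[::439;702;571;677;537;721;804;401;399;415;412;56;195;137;160;79;249;277];
[::461;326;504;497;768;591;549;94;400;399;418;403;46;182;117;299;232;209];
[::453;321;507;484;757;599;556;78;404;403;411;410;58;186;113;295;234;217];
[::433;701;578;682;527;731;815;418;404;402;401;60;193;121;156;83;257;283];
[::467;781;347;646;385;366;655;140;264;203;403;402;416;406;28;172;294;76];
[::423;713;584;689;535;728;811;408;407;406;399;36;201;133;150;87;265;281];
[::445;334;510;492;767;605;563;90;416;407;405;404;54;162;107;311;236;225];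
[::470;783;353;642;397;373;658;136;252;215;406;405;419;413;32;188;298;64];
[::441;330;514;488;759;595;552;82;405;399;410;409;62;178;105;307;238;213];
[::472;787;343;649;395;365;662;144;248;207;410;408;417;414;26;184;302;72];
[::422;708;573;679;529;732;817;411;409;408;402;52;199;125;148;91;253;285];
[::474;790;336;640;381;358;663;132;268;227;410;402;413;412;22;168;306;68];
[::457;319;518;501;774;589;546;102;415;413;411;400;50;170;115;291;240;205];
[::437;698;568;672;545;724;809;419;412;411;407;44;191;145;158;95;245;279];
[::450;327;521;489;763;606;565;86;417;416;415;409;38;166;111;303;242;229];
[::478;792;355;630;391;377;667;120;260;211;412;400;416;414;34;180;310;66];
[::431;706;585;690;533;714;800;406;404;415;414;40;197;129;154;99;269;273];
[::426;694;581;686;540;719;801;414;409;419;418;48;189;141;152;103;261;275];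
[::481;797;349;635;378;370;669;124;256;223;403;401;419;417;30;164;314;70];
[::449;317;523;499;773;600;560;98;413;407;418;417;42;174;109;287;244;221];
[::471;342;499;744;518;543;580;81;422;421;438;423;61;122;198;242;299;172];
[::442;805;331;377;619;692;389;143;149;274;422;420;429;426;25;225;257;95];
[::410;714;588;559;652;793;702;52;421;420;435;432;181;108;204;298;70;271];
[::405;719;593;547;656;796;701;36;438;425;424;420;185;112;208;310;68;263];
[::469;352;501;743;504;539;569;89;425;423;434;431;53;126;190;244;295;184];
[::446;813;335;370;615;685;385;135;153;276;424;423;437;428;31;229;253;79];
[::417;721;596;555;659;777;713;48;429;428;427;421;161;116;212;306;76;251];
[::448;812;316;360;629;675;397;123;157;278;428;426;440;433;29;205;269;91];
[::482;350;484;755;514;530;576;97;437;427;426;425;41;130;196;232;311;180];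
[::477;354;497;751;507;526;570;85;426;421;431;430;37;134;192;240;307;188];
[::451;816;328;358;624;673;395;119;151;280;431;429;439;436;33;221;265;83];
[::416;724;597;551;660;791;708;40;434;430;429;424;177;110;216;314;74;247];
[::465;345;489;739;523;541;587;77;435;434;433;422;57;138;202;236;291;176];
[::403;728;602;566;664;785;698;60;440;434;432;427;169;106;220;302;66;267];
[::455;808;323;373;613;688;381;139;147;282;431;424;433;432;27;213;249;103];
[::456;799;318;366;622;681;391;131;159;284;432;422;437;436;21;209;261;87];
[::475;337;488;747;510;534;574;101;439;437;435;430;49;142;194;234;303;164];
[::413;731;604;554;666;782;706;44;428;425;436;435;165;118;224;290;72;259];
[::459;803;324;365;611;680;378;127;155;286;423;420;440;439;23;217;245;99];
[::400;732;607;561;671;786;694;56;436;430;440;438;173;114;228;294;64;255];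
[::464;341;492;735;521;531;582;93;433;427;439;438;45;146;200;238;287;168];
[::408;541;384;807;560;643;501;123;62;443;442;459;444;283;80;197;259;151];
[::421;373;742;335;598;347;734;168;231;101;25;443;441;450;447;223;301;137];
[::473;609;672;517;694;660;772;442;441;456;453;51;182;66;254;112;206;311];
[::468;614;677;505;698;659;775;459;446;445;441;35;186;70;266;110;210;303];
[::406;543;394;806;546;632;497;131;54;446;444;455;452;285;84;189;255;157];
[::425;377;750;328;594;343;727;176;233;93;31;445;444;458;449;227;297;121];
[::480;617;679;513;701;671;756;450;449;448;442;47;162;74;262;118;214;291];
[::427;358;749;318;608;355;717;184;235;81;29;449;447;461;454;203;313;133];
[::419;526;392;818;556;639;488;139;42;458;448;447;446;273;88;195;271;155];
[::414;539;396;814;549;633;484;127;38;447;442;452;451;281;92;191;267;159];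
[::430;370;753;316;603;353;715;172;237;77;33;452;450;460;457;219;309;125];
[::479;618;682;509;702;666;770;455;451;450;445;39;178;68;270;116;218;287];
[::402;531;387;802;565;650;499;119;58;456;455;454;443;277;96;201;251;153];
[::466;623;686;524;706;656;764;461;455;453;448;59;170;64;258;108;222;307];
[::434;365;745;331;592;339;730;164;239;97;27;452;445;454;453;211;293;145];
[::435;360;736;324;601;349;723;188;241;89;21;453;443;458;457;207;305;129];
[::412;530;379;810;552;637;492;143;50;460;458;456;451;275;100;193;263;147];
[::476;625;689;512;708;664;761;449;446;457;456;43;166;76;246;114;226;299];
[::438;366;740;323;590;336;722;180;243;85;23;444;441;461;460;215;289;141];
[::463;628;690;519;713;652;765;457;451;461;459;55;174;72;250;106;230;295];
[::401;534;383;798;563;645;489;135;46;454;448;460;459;279;104;199;247;149];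
[::399;381;758;575;347;695;318;312;221;86;24;464;463;471;468;153;246;116];
[::460;634;660;719;495;741;679;55;464;462;478;475;196;95;121;293;187;236];
[::440;546;368;539;789;507;612;136;45;463;462;481;466;259;181;75;273;207];
[::432;549;363;526;778;514;620;120;57;467;466;474;473;255;185;71;275;215];
[::454;641;659;724;485;752;689;59;481;467;465;464;194;79;125;301;179;242];
[::404;389;760;583;343;697;324;304;205;98;28;466;465;479;469;151;250;118];
[::444;647;671;731;493;748;686;35;471;470;469;462;202;91;129;309;167;240];
[::424;552;376;534;788;521;626;132;53;479;470;468;467;271;161;65;277;223];
[::407;395;762;579;355;700;331;292;217;94;32;469;468;482;476;159;254;106];
[::420;556;372;530;780;510;616;124;61;468;462;473;472;267;177;63;279;211];
[::409;385;766;586;353;704;323;288;209;102;26;473;471;480;477;157;258;114];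
[::443;636;666;721;487;754;690;51;474;472;471;465;200;83;133;297;163;244];
[::411;378;769;577;339;705;316;308;229;90;22;473;465;476;475;149;262;110];
[::436;560;361;543;795;504;610;144;49;478;476;474;463;251;169;73;281;203];
[::458;631;656;714;503;746;682;43;482;475;474;470;192;103;137;289;183;238];
[::429;563;369;531;784;523;627;128;37;480;479;478;472;263;165;69;283;227];
[::415;397;771;567;349;709;335;300;213;78;34;475;463;479;477;155;266;108];
[::452;648;664;732;491;737;672;39;469;467;478;477;198;87;141;313;175;232];
[::447;644;652;728;498;738;677;47;477;472;482;481;190;99;145;305;171;234];
[::418;391;776;572;336;711;328;296;225;82;30;466;464;482;480;147;270;112];
[::428;565;359;541;794;518;621;140;41;476;470;481;480;247;173;67;285;219];
[::525;749;594;681;779;395;769;243;485;484;492;491;27;124;171;95;310;206];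
[::523;651;428;402;342;798;450;216;186;130;281;485;483;502;487;56;65;246];
[::566;581;315;647;466;628;714;115;194;484;483;500;497;62;89;252;155;288];
[::528;736;603;680;781;397;758;239;488;487;498;489;25;132;183;79;314;210];
[::559;568;320;648;473;623;719;117;200;502;488;486;484;54;85;260;147;292];
[::518;654;436;408;352;802;449;212;178;142;273;487;486;496;493;60;69;250];
[::507;657;432;414;350;806;461;228;166;138;279;498;491;490;486;36;73;254];
[::532;745;601;692;783;378;766;233;491;489;501;495;33;140;179;91;290;214];
[::551;578;322;631;479;614;721;105;198;492;490;489;483;42;101;268;153;296];
[::504;661;440;406;354;807;457;224;162;146;275;491;483;494;493;52;67;258];
[::547;571;325;644;468;609;724;113;202;496;494;492;488;38;97;256;149;300];
[::536;740;608;688;787;391;760;231;493;492;503;499;31;128;187;83;306;218];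
[::561;585;329;636;463;625;728;109;196;501;497;496;490;58;81;248;159;304];
[::538;753;598;675;790;385;776;241;493;488;497;495;23;120;175;103;298;222];
[::521;665;429;401;345;810;445;208;182;134;285;500;496;495;485;44;63;262];
[::555;573;332;634;480;618;731;107;190;489;486;500;499;50;93;272;151;308];
[::514;668;420;419;337;814;453;220;174;122;277;503;500;498;494;40;75;266];
[::542;742;590;685;792;381;762;237;497;485;499;498;29;144;163;87;294;226];
[::510;670;424;412;341;818;441;204;170;126;283;495;490;503;502;48;71;270];
[::544;750;592;673;797;389;771;235;487;484;503;501;21;136;167;99;302;230];
[::554;584;333;641;476;617;732;111;192;499;494;502;501;46;77;264;157;312];
[::492;691;401;327;424;475;780;158;117;190;251;52;506;505;522;509;88;301];
[::535;607;340;444;617;706;636;138;186;506;504;520;518;37;98;207;278;237];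
[::548;758;572;805;655;745;358;288;505;504;514;512;32;127;230;261;66;175];
[::489;684;402;317;429;464;788;160;113;192;259;36;509;508;516;513;100;297];
[::550;760;577;813;662;742;360;292;509;507;519;510;34;139;222;245;70;171];
[::533;602;346;452;625;694;647;122;178;522;508;507;504;41;102;215;284;235];
[::501;676;406;326;436;471;794;148;107;194;267;48;519;512;511;508;96;313];
[::553;762;583;812;667;753;365;296;512;510;523;517;22;135;210;257;74;187];
[::545;593;351;458;623;702;644;134;166;514;511;510;506;45;78;223;282;243];
[::540;588;344;447;628;698;648;126;162;516;515;514;507;49;94;211;286;241];
[::499;674;408;319;428;465;784;156;105;196;255;40;512;506;515;513;104;309];
[::557;766;575;816;658;750;366;300;514;513;524;521;30;143;206;249;68;183];
[::558;769;567;808;653;740;370;304;513;507;518;517;26;131;226;269;64;167];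
[::529;604;338;443;618;713;641;146;182;523;518;516;511;53;86;203;280;233];
[::488;687;412;334;420;482;778;152;115;198;247;60;520;517;516;505;92;293];
[::537;597;356;460;609;701;631;130;174;510;508;521;520;57;82;227;274;239];
[::562;771;586;799;669;749;373;308;518;505;521;519;24;119;218;253;76;179];
[::497;683;414;321;440;469;795;150;111;200;271;44;524;520;519;515;80;305];
[::564;776;579;803;663;736;377;312;509;504;524;523;28;123;214;265;72;163];
[::484;678;419;330;432;477;789;154;109;202;263;56;517;511;524;522;84;289];
[::527;596;348;454;614;708;634;142;170;521;515;523;522;61;90;219;276;231];
[::483;615;812;723;758;790;353;286;27;527;526;534;533;82;152;204;266;137];
[::565;449;693;465;384;429;735;218;240;88;185;527;525;544;529;55;107;290];
[::524;357;644;584;403;672;607;73;193;61;526;525;542;539;180;292;131;248];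
[::486;624;799;722;760;779;355;282;25;530;529;540;531;90;158;208;270;121];
[::517;362;631;585;410;677;602;75;199;53;544;530;528;526;164;300;127;252];
[::560;457;696;471;394;428;739;214;232;100;177;529;528;538;535;59;111;294];
[::549;453;699;477;392;440;743;230;238;96;165;540;533;532;528;35;115;298];
[::490;622;808;734;762;787;336;276;33;533;531;543;537;98;156;212;246;133];
[::509;364;641;568;416;679;593;63;197;41;534;532;531;525;176;308;143;256];
[::546;461;703;469;396;436;744;226;234;104;161;533;525;536;535;51;109;302];
[::505;367;634;581;405;682;588;71;201;37;538;536;534;530;168;296;139;260];
[::494;629;803;730;766;781;349;274;31;535;534;545;541;86;160;216;262;125];
[::519;371;648;573;400;686;604;67;195;57;543;539;538;532;188;288;123;264];
[::496;619;816;717;769;797;343;284;23;535;530;539;537;78;154;220;254;145];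
[::563;450;707;464;387;424;747;210;244;92;181;542;538;537;527;43;105;306];
[::513;374;636;571;417;689;597;65;189;49;531;528;542;541;172;312;135;268];
[::556;441;710;482;379;432;751;222;236;80;173;545;542;540;536;39;117;310];
[::500;611;805;727;771;783;339;280;29;539;527;541;540;102;148;224;250;129];
[::552;445;712;475;383;420;755;206;242;84;169;537;532;545;544;47;113;314];
[::502;613;813;715;776;792;347;278;21;529;526;545;543;94;150;228;258;141];
[::512;375;647;578;413;690;596;69;191;45;541;536;544;543;184;304;119;272];
[::534;464;733;369;445;759;412;183;291;189;75;51;548;547;564;551;130;257];
[::493;382;628;423;596;573;664;96;185;38;548;546;562;560;235;209;140;280];
[::506;635;779;742;697;316;808;248;32;547;546;556;554;85;228;154;108;305];
[::531;465;726;359;450;767;401;187;299;191;71;35;551;550;558;555;142;253];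
[::508;640;781;750;704;318;805;252;34;551;549;561;552;97;220;152;112;289];
[::491;388;623;431;604;584;652;80;177;42;564;550;549;546;241;217;144;278];
[::543;469;718;368;457;773;408;163;307;193;65;47;561;554;553;550;138;269];
[::511;646;783;749;709;323;816;256;22;554;552;565;559;93;208;160;116;301];
[::503;393;614;437;602;581;660;92;165;46;556;553;552;548;239;225;120;286];
[::498;386;609;426;607;585;656;84;161;50;558;557;556;549;243;213;136;284];
[::541;471;716;361;449;763;402;179;295;195;63;39;554;548;557;555;146;265];
[::515;638;787;753;700;324;813;260;30;556;555;566;563;101;204;158;110;293];
[::516;630;790;745;695;328;803;264;26;555;549;560;559;89;224;150;106;313];
[::487;380;625;422;597;578;671;104;181;54;565;560;558;553;237;205;128;276];
[::530;475;729;376;441;757;419;171;287;197;73;59;562;559;558;547;134;249];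
[::495;398;618;439;588;568;659;88;173;58;552;550;563;562;231;229;124;282];
[::520;649;792;736;711;331;812;268;24;560;547;563;561;77;216;156;118;297];
[::539;477;725;363;461;774;406;167;311;199;69;43;566;562;561;557;122;261];
[::522;642;797;740;705;335;799;272;28;551;546;566;565;81;212;148;114;309];
[::526;482;720;372;453;768;414;175;303;201;67;55;559;553;566;564;126;245];
[::485;390;617;433;593;571;666;100;169;62;563;557;565;564;233;221;132;274];
[::624;655;516;478;692;776;700;155;131;569;568;576;573;46;80;201;275;267];
[::631;487;413;533;815;561;386;309;145;85;176;231;569;567;583;580;29;207];
[::605;735;337;733;359;330;424;262;116;206;295;568;567;586;571;59;166;70];
[::606;739;341;726;361;334;429;246;118;210;307;572;571;579;578;51;174;68];
[::634;493;400;540;817;566;393;313;137;97;172;233;586;572;570;569;21;215];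
[::629;662;506;481;685;769;709;147;127;571;570;584;574;58;84;197;279;271];
[::636;498;410;537;800;547;390;289;125;93;188;235;576;575;574;567;27;223];
[::589;743;342;718;363;317;436;258;106;214;303;584;575;573;572;39;182;76];
[::611;667;515;462;675;760;705;153;143;574;573;587;581;54;88;191;283;247];
[::600;744;345;716;368;327;428;250;114;218;311;573;567;578;577;35;170;74];
[::622;658;508;474;673;758;711;149;139;578;576;585;582;62;92;189;277;263];
[::641;491;403;545;811;559;398;305;121;101;184;237;579;577;576;570;23;211];
[::615;653;522;470;688;771;704;159;123;578;570;581;580;50;96;199;273;255];
[::595;747;350;729;369;321;420;270;110;222;299;583;581;579;568;55;162;66];
[::644;485;417;535;804;554;388;297;141;89;168;239;587;580;579;575;33;203];
[::591;751;352;725;372;319;440;254;108;226;287;585;584;583;577;47;186;72];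
[::613;669;511;467;681;766;695;151;135;580;568;584;582;38;100;195;285;251];
[::647;503;405;527;801;551;380;293;133;77;180;241;574;572;583;582;25;227];
[::648;495;416;529;809;555;382;301;129;81;164;243;582;577;587;586;31;219];
[::619;663;520;472;680;762;697;157;119;571;569;587;585;42;104;193;281;259];
[::599;755;354;720;376;326;432;266;112;230;291;581;575;586;585;43;178;64];
[::609;513;422;791;561;357;535;246;108;94;296;229;590;589;603;600;28;157];
[::574;767;330;387;712;412;350;121;301;171;240;39;590;588;608;593;200;103];
[::638;673;500;669;459;723;745;215;144;589;588;599;596;53;165;67;267;273];
[::582;763;334;384;707;401;337;125;297;183;232;47;593;592;601;597;202;95];
[::646;675;502;663;455;722;742;211;136;593;591;604;595;37;173;73;271;275];
[::614;512;423;777;566;362;533;250;112;78;308;221;608;592;591;589;26;159];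
[::642;680;483;655;446;734;753;227;124;596;595;606;602;49;181;71;247;277];
[::580;774;317;396;696;408;345;129;313;179;238;55;604;596;594;592;190;83];
[::617;524;426;786;547;364;545;254;116;90;304;209;599;595;594;590;34;147];
[::618;519;431;782;559;367;540;258;110;82;312;205;601;599;598;591;32;155];
[::649;681;496;653;442;730;750;223;120;599;597;607;605;41;169;75;263;279];
[::587;773;327;394;693;402;341;133;309;187;234;43;596;590;598;597;198;79];
[::576;759;321;383;710;419;354;137;293;175;244;35;603;602;601;588;194;99];
[::640;685;490;667;456;717;740;207;140;597;591;602;600;61;161;69;255;281];
[::623;509;433;796;554;371;529;262;106;102;300;225;606;601;600;594;24;151];
[::630;688;486;662;451;727;749;219;132;600;588;605;604;45;185;63;251;283];
[::625;517;437;785;551;374;537;266;118;86;288;217;595;592;605;603;30;149];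
[::569;768;319;392;703;406;342;141;305;163;236;59;607;604;603;598;192;91];
[::570;757;326;379;699;414;352;145;289;167;242;51;602;594;608;607;196;87];
[::628;505;439;793;555;375;527;270;114;98;292;213;605;598;608;606;22;153];
[::635;692;494;658;448;715;736;203;128;593;589;607;606;57;177;65;259;285];
[::588;443;555;770;519;493;315;290;66;256;227;136;28;611;610;624;621;184];
[::637;372;788;345;670;392;475;152;79;257;281;611;609;629;614;40;199;145];
[::575;542;715;711;438;808;681;217;102;54;610;609;620;617;307;166;109;232];
[::645;376;784;342;665;379;464;158;83;253;273;614;613;622;618;48;201;137];
[::583;544;717;705;434;805;680;213;94;38;614;612;625;616;311;174;115;234];
[::593;444;554;756;524;491;320;294;70;268;219;120;26;629;613;612;610;188];
[::579;525;722;697;425;816;692;229;82;50;617;616;627;623;287;182;113;236];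
[::643;359;795;354;654;387;471;156;87;269;279;625;617;615;613;56;189;125];
[::596;447;566;765;505;503;322;298;74;264;207;132;34;620;616;615;611;164];
[::597;452;561;761;517;498;325;302;68;272;203;124;32;622;620;619;612;180];
[::586;538;723;695;421;813;688;225;78;42;620;618;628;626;303;170;117;238];
[::650;369;794;352;651;383;465;160;91;265;275;617;611;619;618;44;197;121];
[::639;363;780;341;668;396;482;154;95;249;285;624;623;622;609;36;193;141];
[::577;532;727;709;435;803;675;209;98;62;618;612;623;621;295;162;111;240];
[::602;454;551;775;512;487;329;306;64;260;223;144;24;627;622;621;615;172];
[::567;528;730;704;430;812;685;221;90;46;621;609;626;625;291;186;105;242];
[::604;458;559;764;509;495;332;310;76;248;215;128;30;616;613;626;624;168];
[::632;361;789;350;661;384;469;148;99;261;277;628;625;624;619;60;191;133];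
[::633;368;778;337;657;394;477;150;103;245;283;623;615;629;628;52;195;129];
[::607;460;547;772;513;485;333;314;72;252;211;140;22;626;619;629;627;176];
[::572;536;734;700;427;799;673;205;86;58;614;610;628;627;299;178;107;244];
[::603;558;697;415;734;658;797;180;89;45;632;631;639;636;234;122;202;307];
[::568;476;529;491;752;344;519;265;103;153;274;127;29;632;630;646;643;209];
[::626;379;798;691;317;445;372;204;306;74;255;60;631;630;649;634;165;112];
[::627;383;802;684;319;450;376;208;290;76;267;52;635;634;642;641;173;110];
[::571;463;535;498;754;351;524;269;95;151;276;139;21;649;635;633;632;217];
[::608;548;704;418;727;667;790;164;85;57;634;633;647;637;238;126;198;311];
[::573;473;540;495;737;348;505;245;83;159;278;135;27;639;638;637;630;225];
[::610;384;806;676;321;457;359;212;302;64;263;40;647;638;636;635;181;118];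
[::590;557;709;399;717;663;781;176;101;53;637;636;650;644;242;130;192;287];
[::621;387;807;674;326;449;369;216;294;72;271;36;636;630;641;640;169;116];
[::601;550;700;411;715;669;779;168;97;61;641;639;648;645;236;134;190;303];
[::578;466;533;503;748;356;517;261;79;157;280;143;23;642;640;639;633;213];
[::594;564;695;407;730;662;792;188;81;49;641;633;644;643;232;138;200;295];
[::616;392;810;687;327;441;363;220;314;68;259;56;646;644;642;631;161;108];
[::581;480;527;493;741;346;512;253;99;149;282;131;33;650;643;642;638;205];
[::612;394;814;683;330;461;361;224;298;66;247;48;648;647;646;640;185;114];
[::592;553;711;404;723;653;787;172;93;37;643;631;647;645;244;142;196;291];
[::584;468;545;485;738;338;509;249;91;155;284;119;25;637;635;646;645;229];
[::585;479;537;487;746;340;513;257;87;147;286;123;31;645;640;650;649;221];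
[::598;562;705;409;722;655;783;184;77;41;634;632;650;648;240;146;194;299];
[::620;396;818;678;334;453;368;228;310;70;251;44;644;638;649;648;177;106];
[::720;484;774;780;620;337;806;248;65;197;653;652;669;656;45;139;188;300];
[::694;748;480;393;422;460;551;156;204;250;145;278;653;651;667;665;31;90];
[::680;579;358;598;516;646;399;111;290;226;96;169;244;652;651;661;659;39];
[::729;488;768;788;616;341;814;252;69;189;656;655;663;660;57;143;180;296];
[::688;567;360;594;506;649;404;109;294;230;80;181;240;656;654;666;657;47];
[::698;737;476;398;423;454;555;148;208;258;137;284;669;655;654;651;33;86];
[::726;489;759;794;627;342;810;256;73;195;666;659;658;655;53;119;168;312];
[::685;577;365;608;515;630;407;117;298;206;92;177;234;659;657;670;664;55];
[::701;746;466;380;426;444;561;154;212;266;125;282;661;658;657;653;21;102];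
[::702;738;463;390;431;443;554;150;216;254;121;286;663;662;661;654;29;98];
[::733;492;757;784;626;345;818;260;67;191;659;653;662;660;61;135;164;308];
[::692;572;366;603;508;642;409;115;302;222;84;185;232;661;660;671;668;43];
[::681;586;370;592;522;638;411;107;306;214;104;173;242;660;654;665;664;35];
[::706;754;479;386;433;458;547;160;220;246;141;280;670;665;663;658;25;82];
[::725;497;773;778;612;350;807;264;63;201;667;664;663;652;49;127;184;292];
[::708;741;473;382;437;452;566;152;224;270;133;274;657;655;668;667;23;94];
[::673;575;373;601;511;635;415;113;310;210;88;161;238;665;652;668;666;59];
[::716;499;767;795;621;352;798;268;75;193;671;667;666;662;37;123;176;304];
[::675;583;377;590;520;640;418;105;314;218;100;165;236;656;651;671;670;51];
[::718;501;763;789;610;354;802;272;71;199;664;658;671;669;41;131;172;288];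
[::713;752;468;388;439;447;559;158;228;262;129;276;668;662;670;669;27;78];
[::714;765;443;413;367;527;479;212;158;112;313;248;674;673;688;684;24;93];
[::667;590;385;502;577;430;629;138;265;167;189;67;299;59;674;672;683;679];
[::710;514;743;639;810;789;334;284;104;169;673;672;692;677;38;124;239;217];
[::669;592;395;496;575;427;622;122;269;175;191;73;295;51;677;676;689;678];
[::712;510;751;637;798;778;327;286;96;181;677;675;685;682;42;132;231;213];
[::719;764;444;400;364;529;480;224;160;110;305;252;692;676;675;674;28;77];
[::693;523;747;650;807;788;319;274;84;177;689;680;679;675;46;140;237;229];
[::721;775;447;410;375;533;463;220;148;118;293;256;683;680;678;673;32;89];
[::653;594;391;486;586;438;613;134;245;183;193;71;311;39;679;678;691;686];
[::663;598;397;483;583;435;611;126;261;171;195;75;307;35;683;682;690;687];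
[::724;772;452;403;374;535;476;228;156;116;289;260;685;683;681;676;26;81];
[::707;521;755;645;802;780;317;282;80;185;679;673;682;681;50;128;233;225];
[::699;507;744;633;818;795;330;278;100;173;688;686;685;672;54;120;243;209];
[::658;601;389;500;572;425;624;146;253;163;197;69;291;55;682;676;686;684];
[::728;761;454;417;362;537;468;216;152;108;309;264;691;685;684;680;22;101];
[::696;518;735;643;806;784;326;276;92;161;690;689;688;681;58;144;235;221];
[::655;603;378;494;579;434;619;130;249;187;199;63;303;47;684;672;689;687];
[::731;770;458;405;371;540;466;204;150;114;301;268;678;675;688;687;34;85];
[::732;756;460;416;357;545;473;208;154;106;297;272;687;681;692;691;30;97];
[::703;504;739;632;814;794;321;280;88;165;686;680;692;690;62;136;241;205];
[::662;608;381;490;567;421;615;142;257;179;201;65;287;43;677;674;691;690];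
[::678;795;526;759;599;743;379;288;107;198;46;695;694;711;698;260;159;97];
[::652;417;811;351;443;509;439;179;103;294;206;235;31;695;693;709;707;132];
[::722;316;642;619;558;462;583;69;246;224;285;170;138;694;693;703;701;40];
[::687;789;530;767;595;751;383;292;111;190;58;698;697;705;702;256;155;101];
[::730;318;630;615;548;467;586;67;250;228;281;182;122;698;696;708;699;48];
[::656;413;800;356;444;513;433;163;95;302;210;241;33;711;697;696;693;128];
[::684;780;531;773;606;747;384;296;115;196;54;708;701;700;697;272;149;77];
[::727;323;640;629;557;470;567;75;254;204;275;178;134;701;699;712;706;56];
[::659;403;809;338;447;519;423;175;83;310;214;239;21;703;700;699;695;144];
[::660;400;801;348;452;512;422;167;79;298;218;243;29;705;704;703;696;140];
[::691;778;534;763;605;755;387;300;109;192;62;701;695;704;702;268;147;93];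
[::734;324;635;624;550;472;579;73;258;220;273;186;126;703;702;713;710;44];
[::723;328;649;613;564;474;575;65;262;212;283;174;146;702;696;707;706;36];
[::664;416;817;344;454;505;437;187;99;290;222;237;25;712;707;705;700;124];
[::683;794;539;757;591;744;392;304;105;202;50;709;706;705;694;252;157;85];
[::666;410;804;340;458;524;431;171;91;314;226;231;23;699;697;710;709;136];
[::715;331;638;622;553;478;572;71;266;208;279;162;130;707;694;710;708;60];
[::674;788;541;774;600;735;394;308;117;194;38;713;709;708;704;264;153;81];
[::717;335;646;611;562;481;577;63;270;216;277;166;142;698;693;713;712;52];
[::676;784;543;768;589;739;396;312;113;200;42;706;700;713;711;248;151;89];
[::671;405;815;346;460;517;426;183;87;306;230;233;27;710;704;712;711;120];
[::672;422;786;476;325;416;485;214;269;70;183;288;24;716;715;730;726;135];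
[::709;343;611;544;640;608;451;96;309;150;259;109;190;60;716;714;725;721];
[::668;806;556;576;747;376;768;241;146;170;37;715;714;734;719;215;282;82];
[::711;353;613;538;638;601;448;80;313;154;255;115;192;52;719;718;731;720];
[::670;814;552;574;735;369;757;243;138;182;41;719;717;727;724;211;274;90];
[::677;423;785;463;322;417;487;226;261;68;187;292;28;734;718;717;716;119];
[::651;810;565;587;744;361;767;231;126;178;45;731;722;721;717;227;280;98];
[::679;426;796;473;333;400;491;222;249;76;163;296;32;725;722;720;715;131];
[::695;349;615;528;649;592;459;92;289;158;271;113;194;40;721;720;733;728];
[::705;355;619;525;646;590;456;84;305;152;267;117;196;36;725;724;732;729];
[::682;431;793;466;332;413;493;230;245;74;179;300;26;727;725;723;718;123];
[::665;818;563;582;739;359;759;239;122;186;49;721;715;724;723;223;276;86];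
[::657;807;549;570;755;372;774;235;142;174;53;730;728;727;714;207;286;78];
[::700;347;622;542;635;603;446;104;297;148;251;111;198;56;724;718;728;726];
[::686;433;782;480;320;405;495;218;265;66;171;304;22;733;727;726;722;143];
[::654;798;560;580;743;368;763;233;134;162;57;732;731;730;723;219;278;102];
[::697;336;624;536;642;598;455;88;293;160;263;105;200;48;726;714;731;729];
[::689;437;791;468;329;403;498;206;257;72;167;308;34;720;717;730;729;127];
[::690;439;777;479;315;410;503;210;253;64;175;312;30;729;723;734;733;139];
[::661;802;546;569;751;363;773;237;130;166;61;728;722;734;732;203;284;94];
[::704;339;629;532;630;594;442;100;301;156;247;107;202;44;719;716;733;732];
[::798;569;687;440;718;710;526;168;290;70;144;264;211;737;736;753;738;32];
[::769;486;456;562;323;522;608;191;129;79;265;156;285;737;735;744;741;48];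
[::791;656;380;364;636;479;351;291;174;113;232;225;86;736;735;750;747;62];
[::777;660;382;374;647;480;356;299;170;105;234;229;98;753;740;739;735;54];
[::802;570;691;432;725;712;530;176;294;68;136;248;223;740;738;749;746;34];
[::758;494;459;564;331;516;601;195;141;83;269;148;281;739;738;752;743;44];
[::786;666;386;371;644;463;338;307;186;111;236;205;94;744;743;742;736;42];
[::766;500;442;548;328;508;592;199;137;87;245;154;275;743;741;755;748;60];
[::806;574;674;424;729;693;531;184;298;76;124;260;219;752;742;741;740;22];
[::807;576;684;420;720;707;534;172;302;74;120;252;227;741;736;746;745;30];
[::760;490;455;558;335;506;590;193;145;91;261;150;273;746;744;754;751;56];
[::782;659;388;375;648;476;348;295;182;107;238;221;102;749;745;744;739;38];
[::810;580;678;436;716;699;539;164;306;66;140;272;215;750;749;748;737;26];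
[::796;652;390;367;641;468;344;287;166;117;240;213;90;755;749;747;742;58];
[::776;483;448;553;324;520;603;189;133;95;253;160;283;746;739;748;747;40];
[::762;502;446;550;316;515;598;201;121;99;249;152;279;747;737;752;751;52];
[::814;582;676;429;733;696;541;188;310;72;132;256;203;754;752;750;745;24];
[::785;671;393;357;631;466;340;311;178;109;242;209;78;743;740;751;750;50];
[::771;496;451;557;318;511;594;197;125;103;257;158;277;738;735;755;754;36];
[::793;664;398;362;634;473;346;303;162;115;244;217;82;751;745;755;753;46];
[::818;587;683;428;726;703;543;180;314;64;128;268;207;748;742;754;753;28];
[::801;690;367;614;386;329;447;238;122;194;291;188;97;758;757;771;768;53];
[::778;606;661;707;402;560;718;217;249;87;135;157;274;758;756;776;761;33];
[::740;506;462;343;525;577;486;173;116;314;66;204;263;44;757;756;767;764];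
[::780;600;657;693;408;546;725;213;257;99;119;159;276;761;760;769;765;29];
[::745;508;467;353;528;575;494;169;118;306;70;208;247;56;761;759;772;763];
[::809;686;364;618;393;315;458;236;126;200;299;180;101;776;760;759;757;37];
[::750;511;470;349;532;586;500;185;106;294;74;212;259;52;764;763;774;770];
[::784;591;670;703;414;556;729;229;265;95;131;147;278;772;764;762;760;23];
[::815;677;375;625;390;325;454;244;130;198;307;168;77;767;763;762;758;49];
[::804;672;374;617;398;320;460;242;134;202;295;164;93;769;767;766;759;41];
[::742;515;472;355;536;583;490;181;114;290;68;216;251;60;767;765;775;773];
[::788;589;668;696;406;549;720;225;253;103;123;155;280;764;758;766;765;21];
[::789;605;654;712;401;565;716;209;245;91;143;151;282;771;770;769;756;31];
[::736;516;474;347;538;572;483;165;110;310;64;220;271;48;765;759;770;768];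
[::800;689;362;609;388;333;452;234;138;196;287;184;85;774;769;768;762;61];
[::753;520;478;336;542;579;502;177;108;302;76;224;255;36;768;756;773;772];
[::817;682;371;628;380;322;443;240;142;190;311;176;81;763;760;773;771;45];
[::794;599;665;699;419;552;733;221;269;79;127;149;284;775;772;771;766;27];
[::795;595;651;710;412;563;726;205;261;83;139;153;286;770;762;776;775;25];
[::811;679;357;623;382;332;444;232;146;192;303;172;89;773;766;776;774;57];
[::749;522;481;339;544;567;496;161;112;298;72;228;267;40;761;757;775;774];
[::738;325;732;593;344;426;371;80;193;279;251;159;139;54;779;778;792;789];
[::757;703;627;665;465;676;518;215;293;129;184;231;93;33;779;777;797;782];
[::803;399;548;385;483;528;640;174;74;206;270;108;303;778;777;788;785;43];
[::759;699;621;651;471;683;504;211;301;141;188;233;77;29;782;781;790;786];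
[::808;404;550;395;486;536;638;170;76;210;262;112;287;782;780;793;784;55];
[::746;322;728;597;351;437;357;84;199;277;259;155;143;38;797;781;780;778];
[::813;407;553;391;490;542;649;186;64;214;250;116;299;785;784;795;791;51];
[::763;712;612;661;477;687;514;227;309;137;164;235;89;23;793;785;783;781];
[::752;333;719;604;348;433;367;88;197;285;267;149;119;50;788;784;783;779];
[::741;332;714;596;356;439;362;92;201;283;255;147;135;42;790;788;787;780];
[::805;409;557;397;494;532;646;182;72;218;246;110;291;788;786;796;794;59];
[::767;710;610;654;469;678;507;223;297;145;180;237;81;21;785;779;787;786];
[::768;696;626;670;464;674;523;207;289;133;172;239;101;31;792;791;790;777];
[::799;411;558;389;496;525;635;166;68;222;266;106;311;786;780;791;789;47];
[::737;320;731;588;346;431;375;96;195;275;247;157;127;62;795;790;789;783];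
[::816;415;562;378;500;544;642;178;66;226;258;118;295;789;777;794;793;35];
[::754;329;724;607;338;422;364;100;189;281;271;153;123;46;784;781;794;792];
[::773;707;620;657;482;691;510;219;313;121;168;241;85;27;796;793;792;787];
[::774;693;616;668;475;684;521;203;305;125;176;243;97;25;791;783;797;796];
[::748;315;721;602;340;423;374;104;191;273;263;151;131;58;794;787;797;795];
[::812;418;564;381;502;538;630;162;70;230;254;114;307;782;778;796;795;39];
[::735;729;632;461;676;484;668;149;246;112;304;213;102;32;800;799;816;801];
[::790;435;528;520;365;629;564;192;87;179;121;309;244;47;800;798;807;804];
[::770;338;698;322;573;393;416;173;71;251;273;223;128;61;799;798;813;810];
[::756;340;702;332;584;398;417;169;63;259;275;227;140;53;816;803;802;798];
[::739;733;633;453;683;488;670;153;250;110;288;225;94;34;803;801;812;809];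
[::779;438;536;522;373;622;558;196;99;163;125;313;240;43;802;801;815;806];
[::765;344;708;329;581;380;400;185;69;267;277;203;136;41;807;806;805;799];
[::787;421;542;506;370;613;550;200;95;175;129;289;234;59;806;804;818;811];
[::743;716;637;445;687;489;651;157;254;118;300;221;82;22;815;805;804;803];
[::744;726;639;441;678;492;665;151;258;116;292;229;78;30;804;799;809;808];
[::781;434;532;516;377;611;548;194;103;167;133;305;232;55;809;807;817;814];
[::761;346;701;333;585;390;413;181;65;255;279;219;144;37;812;808;807;802];
[::747;720;643;457;674;497;657;147;262;108;312;217;98;26;813;812;811;800];
[::775;348;694;325;578;386;405;165;75;247;281;211;132;57;818;812;810;805];
[::797;427;525;511;366;624;562;190;91;187;137;297;242;39;809;802;811;810];
[::783;425;544;508;358;619;557;202;79;171;141;293;238;51;810;800;815;814];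
[::751;718;645;450;691;499;654;159;266;114;296;205;90;24;817;815;813;808];
[::764;351;713;315;568;382;403;177;67;271;283;207;120;49;806;803;814;813];
[::792;430;538;515;360;615;553;198;83;183;145;301;236;35;801;798;818;817];
[::772;356;706;320;571;388;410;161;73;263;285;215;124;45;814;808;818;816];
[::755;725;650;449;684;501;661;155;270;106;308;209;86;28;811;805;817;816]].

Definition GEN0 : seq N := [::137;571;400;670;172;789;65;540;374;802;812;809;525;790;266;288;537;604;346;791;195;71;501;669;671;658;664;354;272;718;41;199;610;763;131;739;34;506;358;683;225;485;714;633;110;287;14;733;94;472;323;153;453;161;121;803;801;36;231;488;250;693;379;72;54;656;476;177;304;600;321;138;18;742;442;784;612;297;562;758;204;187;511;483;27;811;810;615;82;427;91;353;286;242;624;534;533;366;190;723;152;797;39;526;527;0;66;651;484;608;692;293;209;552;469;328;705;23;107;413;279;349;341;255;390;183;713;144;701;303;754;219;585;322;59;807;808;122;509;37;761;347;345;333;181;253;644;570;572;233;566;634;21;569;586;215;817;313;393;493;97;213;44;268;689;7;171;135;636;775;623;312;597;316;451;49;513;420;744;528;531;404;646;189;417;254;88;541;542;792;777;523;289;674;239;768;31;626;133;696;101;207;464;68;411;731;127;780;786;737;62;635;311;431;247;166;389;588;157;47;799;96;320;558;106;275;375;496;222;783;795;415;412;56;439;677;160;401;399;277;804;702;79;249;721;67;371;331;740;188;573;583;681;57;519;657;627;123;648;112;237;543;532;90;302;264;686;5;196;538;539;556;449;170;738;228;682;386;52;360;363;765;134;372;373;796;273;709;478;437;118;100;184;86;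517;659;444;551;217;587;326;603;605;814;499;30;625;200;140;592;595;265;16;785;149;61;601;640;261;356;641;563;69;477;500;163;685;800;698;128;762;770;774;294;369;639;81;564;642;214;522;663;394;308;710;788;654;180;661;660;662;530;428;232;818;28;755;741;463;236;448;355;235;461;460;459;325;340;55;338;337;336;764;307;454;244;243;2;745;335;193;497;63;665;445;452;455;145;652;480;666;667;668;285;482;621;270;711;481;447;756;291;561;124;618;617;620;611;74;141;58;495;329;109;813;238;619;544;150;715;599;234;402;596;426;116;613;717;115;805;95;421;507;192;429;113;114;6;590;53;638;632;630;631;691;794;241;734;719;716;202;591;707;568;487;85;29;334;376;165;125;292;262;536;781;489;486;498;136;555;609;198;479;491;490;766;290;175;216;50;732;210;315;396;398;397;577;578;576;508;760;70;650;368;310;494;218;787;139;309;182;306;305;17;251;504;475;550;318;252;197;441;560;704;73;324;220;643;327;753;158;557;20;259;260;22;806;743;92;687;518;176;772;628;607;505;98;771;520;76;258;317;574;773;221;419;793;364;281;432;435;422;284;283;8;434;282;381;433;403;60;391;388;383;271;815;382;13;211;212;370;367;361;224;645;330;223;378;418;256;43;278;130;151;298;688;672;684;186;185;4;546;548;547;385;779;174;257;89;173;725;759;276;582;108;352;425;424;423;103;767;589;395;430;280;553;816;301;392;24;350;104;380;559;12;83;84;565;126;720;440;735;168;201;535;405;492;406;162;146;159;314;102;798;729;470;32;407;579;581;580;148;410;679;35;203;147;245;438;680;274;678;319;248;365;409;105;408;514;1;155;156;752;178;357;154;416;690;299;629;673;712;706;700;750;99;502;676;751;132;42;167;208;300;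529;602;778;93;703;446;227;594;757;606;87;33;117;75;377;362;359;387;269;616;78;593;512;119;647;545;120;614;554;3;25;26;77;584;503;9;10;11;15;46;45;637;263;457;64;516;769;730;697;48;598;169;653;458;708;226;456;129;736;384;296;699;339;229;474;724;332;230;443;51;473;466;467;465;351;179;694;342;344;343;206;205;19;38;414;450;727;622;111;575;675;191;726;142;549;782;728;143;746;295;348;515;524;521;40;722;695;776;567;267;194;436;510;649;240;655;246;164;80;462;468;471;749;748;747].

Definition GEN1 : seq N := [::517;511;523;648;257;340;36;753;771;87;713;405;233;191;108;479;477;478;423;796;263;585;31;513;286;640;645;649;650;746;221;147;487;537;123;757;606;467;469;799;435;491;198;500;742;141;664;88;12;732;175;45;110;313;672;359;616;39;452;256;170;232;737;529;53;516;518;641;280;146;338;182;443;203;618;604;86;712;711;343;446;426;306;490;378;183;346;780;683;815;120;729;368;27;671;571;566;230;460;40;292;704;710;2;234;164;205;507;489;639;621;705;723;375;393;35;9;288;231;133;584;424;425;201;535;420;438;408;399;547;185;689;150;701;310;407;406;112;593;281;811;68;719;265;728;656;208;135;583;365;296;762;74;667;210;512;510;187;812;553;22;89;173;277;594;421;692;197;318;546;759;754;755;403;731;496;103;111;215;158;557;392;610;451;125;258;16;735;738;63;801;138;505;341;339;355;337;752;311;55;325;708;171;661;626;602;151;192;5;131;721;294;82;748;58;575;675;104;315;545;413;787;794;549;450;795;797;323;736;374;273;289;789;432;202;154;330;84;678;109;419;56;484;524;522;784;227;577;758;429;37;94;179;369;128;303;29;283;627;598;730;69;563;388;817;531;165;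457;637;472;480;264;20;768;756;76;520;224;542;177;336;773;772;502;302;579;255;582;352;300;335;588;422;567;155;779;548;213;349;41;83;34;415;107;6;397;78;810;643;475;463;686;454;266;709;333;314;628;466;194;485;481;418;30;105;377;669;809;808;807;539;181;464;707;744;252;521;44;497;360;362;361;427;433;440;200;370;805;785;367;285;157;806;445;267;380;804;13;212;211;271;722;592;572;127;506;816;615;236;219;113;261;538;220;769;145;745;455;465;620;275;322;617;298;316;308;474;473;297;690;14;17;8;326;687;276;307;611;681;272;354;670;270;501;818;699;684;54;747;66;580;321;600;137;65;293;209;0;71;72;428;97;350;196;803;373;10;102;101;98;532;622;589;412;240;301;734;442;514;156;319;750;550;152;249;688;434;561;659;282;552;543;47;666;657;655;382;383;381;515;206;658;59;569;605;574;342;106;560;558;559;530;394;214;363;733;237;389;166;790;398;305;578;634;269;351;715;714;716;608;57;635;633;376;290;116;241;199;259;437;782;99;416;706;802;250;488;607;793;153;100;32;142;439;436;430;114;345;576;329;327;328;453;387;119;632;317;204;190;595;696;274;519;631;630;697;122;356;698;163;64;121;38;130;129;18;603;132;486;718;724;727;26;3;25;90;528;624;814;24;751;682;676;685;251;23;291;458;476;43;720;587;178;299;629;673;761;364;126;565;482;67;254;470;700;596;599;590;228;244;143;172;404;646;139;140;11;623;551;144;776;775;774;544;347;278;651;652;653;334;284;674;91;468;647;372;471;124;260;693;743;570;174;726;246;462;695;235;694;509;813;238;619;193;586;680;783;391;186;51;332;344;777;279;371;92;28;134;786;42;741;740;148;564;556;449;195;448;358;81;295;642;792;402;411;410;447;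679;118;331;268;562;525;533;534;385;390;396;386;568;309;217;48;176;527;357;73;218;526;384;19;225;226;160;1;159;702;79;400;248;625;495;348;636;245;167;168;7;162;4;161;677;764;77;353;169;760;444;614;70;459;85;366;379;612;253;717;613;115;541;80;441;222;662;508;320;96;791;765;767;766;262;781;536;180;654;788;247;287;21;431;660;216;242;663;638;229;188;60;749;189;324;597;540;312;483;395;243;763;95;591;414;417;409;601;207;456;93;573;498;739;725;223;15;49;50;136;609;555;703;691;62;778;665;184;61;770;800;117;504;401;75;668;499;492;493;494;52;239;304;461;149;798;46;554;503;33;581;644].

Definition GI : seq N := [::0;0;0;0;0;1;0;1;1;1;0;1;1;0;0;1;1;1;0;1;1;1;0;1;0;1;0;1;0;0;1;1;1;1;0;1;0;0;1;0;0;1;0;0;0;1;1;0;0;1;1;0;0;0;0;0;1;0;0;0;1;1;0;1;0;0;1;1;1;1;0;1;0;1;0;0;1;0;0;1;0;1;1;0;1;0;0;1;0;1;0;0;1;1;1;1;1;1;1;1;1;0;0;0;1;0;0;1;0;0;1;0;0;1;0;0;0;1;1;1;0;0;1;1;0;1;0;1;1;1;1;1;1;1;1;0;1;0;1;0;0;1;1;1;0;1;1;1;1;1;0;1;1;1;0;0;1;1;1;0;0;0;1;1;0;1;1;0;0;0;0;1;0;1;1;0;1;0;0;1;0;1;0;0;0;0;0;0;0;1;1;1;1;0;1;1;1;1;0;1;1;1;0;0;0;0;1;0;1;1;1;0;1;0;0;0;1;0;1;1;0;0;1;1;0;1;0;1;0;1;0;0;0;1;0;0;0;0;0;0;0;1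;0;1;1;1;0;1;1;0;1;1;0;0;0;0;1;0;1;1;0;0;0;0;1;0;1;0;0;1;1;0;0;0;1;0;1;0;0;0;0;1;1;1;1;0;0;1;1;0;1;0;0;0;0;0;0;0;1;1;0;1;0;1;1;1;1;1;0;1;0;0;1;1;0;0;1;1;1;1;0;0;1;0;1;1;0;1;0;1;1;0;1;1;1;0;0;0;0;1;0;1;0;0;1;0;0;1;0;1;1;0;1;1;1;0;1;0;1;1;1;0;0;0;0;0;0;0;1;1;1;0;1;0;0;0;1;1;0;1;1;1;1;1;0;1;1;1;1;0;0;0;1;1;1;0;1;1;1;1;1;0;1;0;0;0;1;0;0;1;0;0;0;0;0;1;0;1;0;1;0;1;0;0;0;1;0;0;1;0;1;0;1;1;1;0;1;1;1;1;0;1;0;0;0;0;0;1;1;1;0;1;0;1;0;1;1;1;0;1;0;0;0;1;1;1;1;1;1;0;1;1;1;0;1;1;1;1;0;1;0;1;1;0;1;1;0;1;0;1;0;1;0;1;0;0;1;1;0;1;0;0;1;0;0;1;1;1;0;1;1;1;0;1;0;0;1;0;1;1;1;1;1;0;0;0;0;0;1;0;0;0;0;0;1;1;1;0;0;0;1;1;0;0;0;1;0;1;0;0;0;1;1;0;0;1;0;1;0;0;0;1;1;1;0;0;1;0;0;0;1;0;0;0;1;0;1;0;0;1;1;0;1;1;1;1;1;0;1;1;0;1;0;1;0;1;1;1;1;0;1;0;0;0;0;1;0;0;1;0;1;0;1;0;0;1;1;1;1;0;1;1;0;0;0;1;0;0;1;0;1;1;1;1;1;0;0;1;0;0;1;0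;1;0;1;0;1;1;1;0;1;0;1;1;1;1;0;0;1;1;1;0;1;0;0;0;0;1;0;0;1;1;0;1;0;1;1;1;1;0;0;1;1;0;0;1;1;0;1;1;0;1;0;1;0;1;0;1;1;1;1;0;0;1;1;1;0;1;1;1;0;1;0;0;1;0;1;1;1;0;1;0;1;1;1;0;1;1;0;1;0;0;1;0;0;1;1;0;1;1;0;1;0;0;0;1;0;0;0;0;0;0;1;0;0;1;0;1;0;1;1;1;1;0;0;0;1;0;0;1;0;0;1;0;1;1;1;1;0;0;0;1;0;1;1;1;0;1;0;0;1;0;1;1;1;0;1;1;0;1;1;0;0;0;1;1;0;1;1;0;1;1;1;0;1;0;0;1;0].



End GHD.
Import GHD.
From Stdlib Require Import Lra Psatz.
Delimit Scope nat_scope with N.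

Record BG := mkBG {
  bT : finType;
  bR : rel bT;
  bP : pred (bT * bT * bT);
  bR_sym : symmetric bR;
  bR_irr : irreflexive bR;
  bP_tri : forall x y z, bP (x, y, z) -> [&& bR x y, bR y z & bR x z];
  bP_f3 : forall x y z z', bP (x, y, z) -> bP (x, y, z') -> z = z';
  bP_f1 : forall x x' y z, bP (x, y, z) -> bP (x', y, z) -> x = x';
  bP_f2 : forall x y y' z, bP (x, y, z) -> bP (x, y', z) -> y = y' }.
Arguments bR : clear implicits.
Arguments bP : clear implicits.

Definition cwset (T : finType) (R : rel T) : {set T * T * T * T * T} :=
  [set w | [&& R w.1.1.1.1 w.1.1.1.2, R w.1.1.1.2 w.1.1.2, R w.1.1.2 w.1.2,
               R w.1.2 w.2 & R w.2 w.1.1.1.1]].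
Definition cardP (B : BG) := #|[set t | bP B t]|.
Definition cw (B : BG) := #|cwset (bR B)|.

Section Prod.
Variables B1 B2 : BG.
Definition pT : finType := (bT B1 * bT B2)%type.
Definition pR : rel pT := fun u w => bR B1 u.1 w.1 && bR B2 u.2 w.2.
Definition pP : pred (pT * pT * pT) :=
  fun t => bP B1 (t.1.1.1, t.1.2.1, t.2.1) && bP B2 (t.1.1.2, t.1.2.2, t.2.2).

Lemma pR_sym : symmetric pR.
Proof. by move=> u w; rewrite /pR bR_sym [bR B2 _ _]bR_sym. Qed.
Lemma pR_irr : irreflexive pR.
Proof. by move=> u; rewrite /pR bR_irr. Qed.
Lemma pP_tri x y z : pP (x, y, z) -> [&& pR x y, pR y z & pR x z].
Proof.
rewrite /pP /pR /= => /andP[/bP_tri/and3P[-> -> ->] /bP_tri/and3P[-> -> ->]].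
by [].
Qed.
Lemma pP_f3 x y z z' : pP (x, y, z) -> pP (x, y, z') -> z = z'.
Proof.
case: z z' => [z1 z2] [z1' z2'].
rewrite /pP /= => /andP[h1 h2] /andP[h1' h2'].
by rewrite (bP_f3 h1 h1') (bP_f3 h2 h2').
Qed.
Lemma pP_f1 x x' y z : pP (x, y, z) -> pP (x', y, z) -> x = x'.
Proof.
case: x x' => [z1 z2] [z1' z2'].
rewrite /pP /= => /andP[h1 h2] /andP[h1' h2'].
by rewrite (bP_f1 h1 h1') (bP_f1 h2 h2').
Qed.
Lemma pP_f2 x y y' z : pP (x, y, z) -> pP (x, y', z) -> y = y'.
Proof.
case: y y' => [z1 z2] [z1' z2'].
rewrite /pP /= => /andP[h1 h2] /andP[h1' h2'].
by rewrite (bP_f2 h1 h1') (bP_f2 h2 h2').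
Qed.

Definition prodBG : BG := mkBG pR_sym pR_irr pP_tri pP_f3 pP_f1 pP_f2.

Lemma card_prodBG : #|bT prodBG| = #|bT B1| * #|bT B2|.
Proof. by rewrite /= card_prod. Qed.

Lemma cardP_prodBG : cardP B1 * cardP B2 <= cardP prodBG.
Proof.
rewrite /cardP -cardsX.
pose f (p : (bT B1 * bT B1 * bT B1) * (bT B2 * bT B2 * bT B2)) : pT * pT * pT :=
  ((p.1.1.1, p.2.1.1), (p.1.1.2, p.2.1.2), (p.1.2, p.2.2)).
have finj : injective f.
  by case=> [[[a b] c] [[d e] g]] [[[a' b'] c'] [[d' e'] g']] /= [-> -> -> -> -> ->].
rewrite -(card_imset _ finj); apply: subset_leq_card; apply/subsetP=> t /imsetP[p].
case: p => [[[a b] c] [[d e] g]]; rewrite inE /= => /andP[]; rewrite !inE => h1 h2 ->.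
by rewrite /pP /= h1 h2.
Qed.

Lemma cw_prodBG : cw prodBG <= cw B1 * cw B2.
Proof.
rewrite /cw -cardsX.
pose f (w : pT * pT * pT * pT * pT) :=
  ((w.1.1.1.1.1, w.1.1.1.2.1, w.1.1.2.1, w.1.2.1, w.2.1),
   (w.1.1.1.1.2, w.1.1.1.2.2, w.1.1.2.2, w.1.2.2, w.2.2)).
have finj : injective f.
  case=> [[[[[a1 a2] [b1 b2]] [c1 c2]] [d1 d2]] [e1 e2]].
  case=> [[[[[a1' a2'] [b1' b2']] [c1' c2']] [d1' d2']] [e1' e2']].
  by rewrite /f /= => -[-> -> -> -> -> -> -> -> -> ->].
rewrite -(card_imset _ finj); apply: subset_leq_card; apply/subsetP=> t /imsetP[w].
case: w => [[[[[a1 a2] [b1 b2]] [c1 c2]] [d1 d2]] [e1 e2]].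
rewrite !inE /= /pR /= => /and5P[/andP[h1 h2] /andP[h3 h4] /andP[h5 h6] /andP[h7 h8] /andP[h9 h10]] ->.

by rewrite /f /= h1 h2 h3 h4 h5 h6 h7 h8 h9 h10.
Qed.
End Prod.

Fixpoint powBG (B : BG) (k : nat) : BG :=
  if k is k'.+1 then prodBG (powBG B k') B else B.

Lemma powBG_S B k : powBG B k.+1 = prodBG (powBG B k) B.
Proof. by []. Qed.

Lemma card_powBG B k : #|bT (powBG B k)| = expn #|bT B| k.+1.
Proof.
elim: k => [|k IH]; first by rewrite expn1.
by rewrite powBG_S card_prodBG IH -expnSr.
Qed.
Lemma cardP_powBG B k : expn (cardP B) k.+1 <= cardP (powBG B k).
Proof.
elim: k => [|k IH]; first by rewrite expn1.
by rewrite powBG_S expnSr; apply: leq_trans (cardP_prodBG _ _); rewrite leq_mul2r IH orbT.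
Qed.
Lemma cw_powBG B k : cw (powBG B k) <= expn (cw B) k.+1.
Proof.
elim: k => [|k IH]; first by rewrite expn1.
by rewrite powBG_S expnSr; apply: leq_trans (cw_prodBG _ _) _; rewrite leq_mul2r IH orbT.
Qed.

Lemma set2_eq (T : finType) (a b c d : T) :
  [set a; b] = [set c; d] -> (a = c /\ b = d) \/ (a = d /\ b = c).
Proof.
move=> E.
have ha : a \in [set c; d] by rewrite -E set21.
have hb : b \in [set c; d] by rewrite -E set22.
have hc : c \in [set a; b] by rewrite E set21.
have hd : d \in [set a; b] by rewrite E set22.
case/set2P: ha => ?; case/set2P: hb => ?; subst; try by [left|right].
- by case/set2P: hd => ?; subst; left.
- by case/set2P: hc => ?; subst; right.
Qed.

Section Graph.
Variable B : BG.
Definition nB := #|bT B|.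
Definition evB (i : 'I_nB) : bT B := enum_val i.
Definition erB (x : bT B) : 'I_nB := enum_rank x.
Lemma erBK : cancel erB evB. Proof. exact: enum_rankK. Qed.
Lemma evBK : cancel evB erB. Proof. exact: enum_valK. Qed.
Lemma evB_inj : injective evB. Proof. exact: can_inj evBK. Qed.
Lemma erB_inj : injective erB. Proof. exact: can_inj erBK. Qed.

Definition GB : {set {set 'I_nB}} :=
  (fun p : 'I_nB * 'I_nB => [set p.1; p.2]) @: [set p | bR B (evB p.1) (evB p.2)].

Lemma memGB a b : ([set a; b] \in GB) = bR B (evB a) (evB b).
Proof.
apply/imsetP/idP => [[[c d]]|h]; last by exists (a, b); rewrite // inE.
rewrite inE /= => hcd /set2_eq [[-> ->]|[-> ->]] //.
by rewrite bR_sym.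
Qed.

Lemma GB_edge e : e \in GB -> exists a b, [/\ e = [set a; b], a != b & bR B (evB a) (evB b)].
Proof.
case/imsetP => -[a b]; rewrite inE /= => hab ->; exists a, b; split => //.
by apply/eqP => eab; move: hab; rewrite eab bR_irr.
Qed.

Lemma GB_simple : simple_graph GB.
Proof. by move=> e /GB_edge [a [b [-> hab _]]]; rewrite cards2 hab. Qed.

Lemma memGB_neq a b : [set a; b] \in GB -> a != b.
Proof.
rewrite memGB => h; apply/eqP => eab; move: h; rewrite eab bR_irr //.
Qed.


Definition o5 (k : nat) (h : k < 5) : 'I_5 := Ordinal h.

Lemma C5_le_cw : num_C5 GB <= cw B.
Proof.
rewrite /num_C5 /cw.
set A := [set S in powerset GB | is_C5_copy S].
pose h (S : {set {set 'I_nB}}) : option (bT B * bT B * bT B * bT B * bT B) :=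
  if [pick f : {ffun 'I_5 -> 'I_nB} | injectiveb f && (S == C5_edges f)] is Some f then
    Some (evB (f (@o5 0 isT)), evB (f (@o5 1 isT)), evB (f (@o5 2 isT)),
          evB (f (@o5 3 isT)), evB (f (@o5 4 isT)))
  else None.
have hA S : S \in A -> exists f : {ffun 'I_5 -> 'I_nB},
    [/\ h S = Some (evB (f (@o5 0 isT)), evB (f (@o5 1 isT)), evB (f (@o5 2 isT)),
          evB (f (@o5 3 isT)), evB (f (@o5 4 isT))), S = C5_edges f & S \subset GB].
  rewrite inE powersetE => /andP[sub].
  rewrite /is_C5_copy /h; case: pickP => [f /andP[_ /eqP ES] _|H].
    by exists f; split => //; rewrite -ES.
  by case/existsP => f; rewrite H.
have hinj : {in A &, injective h}.
  move=> S S' /hA [f [-> -> _]] /hA [f' [-> -> _]] [e0 e1 e2 e3 e4].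
  have -> : f = f'; last by [].
  apply/ffunP => -[[|[|[|[|[|i]]]]] hi] //.
  - by apply: evB_inj; rewrite (_ : Ordinal hi = @o5 0 isT) //; apply: val_inj.
  - by apply: evB_inj; rewrite (_ : Ordinal hi = @o5 1 isT) //; apply: val_inj.
  - by apply: evB_inj; rewrite (_ : Ordinal hi = @o5 2 isT) //; apply: val_inj.
  - by apply: evB_inj; rewrite (_ : Ordinal hi = @o5 3 isT) //; apply: val_inj.
  - by apply: evB_inj; rewrite (_ : Ordinal hi = @o5 4 isT) //; apply: val_inj.
rewrite -(card_in_imset hinj).
have Sinj : injective (@Some (bT B * bT B * bT B * bT B * bT B)) by move=> ? ? [].
rewrite -(card_imset (cwset (bR B)) Sinj); apply: subset_leq_card.
apply/subsetP=> o /imsetP[S /hA [f [-> ES sub]] ->].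
apply: imset_f.
have hE (i : 'I_5) : bR B (evB (f i)) (evB (f (ordS i))).
  rewrite -memGB; apply: (subsetP sub); rewrite ES; exact: imset_f.
have e01 : ordS (@o5 0 isT) = @o5 1 isT by apply: val_inj.
have e12 : ordS (@o5 1 isT) = @o5 2 isT by apply: val_inj.
have e23 : ordS (@o5 2 isT) = @o5 3 isT by apply: val_inj.
have e34 : ordS (@o5 3 isT) = @o5 4 isT by apply: val_inj.
have e40 : ordS (@o5 4 isT) = @o5 0 isT by apply: val_inj.
rewrite inE /=.
move: (hE (@o5 0 isT)) (hE (@o5 1 isT)) (hE (@o5 2 isT)) (hE (@o5 3 isT)) (hE (@o5 4 isT)).
by rewrite e01 e12 e23 e34 e40 => -> -> -> -> ->.
Qed.


Definition o3 (k : nat) (h : k < 3) : 'I_3 := Ordinal h.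

Lemma pairs_le (D : {set {set 'I_nB}}) :
  #|[set p : 'I_nB * 'I_nB | [set p.1; p.2] \in D]| <= 2 * #|D|.
Proof.
set D' := [set p : 'I_nB * 'I_nB | [set p.1; p.2] \in D].
pose g (p : 'I_nB * 'I_nB) := ([set p.1; p.2], p.1 < p.2).
have ginj : {in D' &, injective g}.
  move=> [a b] [c d] _ _ [/set2_eq [[-> ->]|[-> ->]] //=] E.
  have [lt|ge] := ltnP c d; first by move: E; rewrite lt ltnNge (ltnW lt).
  have [lt'|ge'] := ltnP d c; first by move: E; rewrite lt' ltnNge (ltnW lt').
  have ecd : c = d by apply: val_inj; apply/eqP; rewrite eqn_leq ge ge'.
  by rewrite ecd.
rewrite -(card_in_imset ginj) mulnC (_ : 2 = #|[set: bool]|); last by rewrite cardsT card_bool.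
rewrite -cardsX.
apply: subset_leq_card; apply/subsetP => q /imsetP [p]; rewrite inE => hp ->.
by rewrite /g in_setX /= hp in_setT.
Qed.

Lemma tri_count (F : {set {set 'I_nB}}) :
  F \subset GB -> triangle_free F -> cardP B <= 6 * #|GB :\: F|.
Proof.
move=> sub tf.
set D := GB :\: F.
set D' := [set p : 'I_nB * 'I_nB | [set p.1; p.2] \in D].
apply: (@leq_trans (3 * #|D'|)); last by rewrite (_ : 6 = 3 * 2) // -mulnA leq_mul2l pairs_le orbT.
pose h (t : bT B * bT B * bT B) : 'I_3 * ('I_nB * 'I_nB) :=
  if [set erB t.1.1; erB t.1.2] \notin F then (@o3 0 isT, (erB t.1.1, erB t.1.2))
  else if [set erB t.1.2; erB t.2] \notin F then (@o3 1 isT, (erB t.1.2, erB t.2))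
  else (@o3 2 isT, (erB t.1.1, erB t.2)).
have hinj : {in [set t | bP B t] &, injective h}.
  move=> [[x y] z] [[x' y'] z']; rewrite !inE /= => hp hp'.
  rewrite /h /=.
  case: ifP => _; case: ifP => _; try case: ifP => _; try case: ifP => _;
    move=> [] // /erB_inj E1 /erB_inj E2; subst.
  - by rewrite (bP_f3 hp hp').
  - by rewrite (bP_f1 hp hp').
  - by rewrite (bP_f2 hp hp').
rewrite /cardP -(card_in_imset hinj).
apply: (@leq_trans #|setX [set: 'I_3] D'|); last by rewrite cardsX cardsT card_ord.
apply: subset_leq_card; apply/subsetP => q /imsetP [[[x y] z]]; rewrite inE /= => hp ->.
case/and3P: (bP_tri hp) => hxy hyz hxz.
have exy : [set erB x; erB y] \in GB by rewrite memGB !erBK.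
have eyz : [set erB y; erB z] \in GB by rewrite memGB !erBK.
have exz : [set erB x; erB z] \in GB by rewrite memGB !erBK.
rewrite /h /=; case: ifP => [nx|/negbFE fx].
  by rewrite !inE /= nx exy.
case: ifP => [ny|/negbFE fy].
  by rewrite !inE /= ny eyz.
case: (boolP ([set erB x; erB z] \in F)) => fz; last by rewrite !inE /= fz exz.
exfalso; apply: tf; exists (erB x), (erB y), (erB z); split.
- by apply: memGB_neq exy.
- by apply: memGB_neq eyz.
- by apply: memGB_neq exz.
- by split.
Qed.

End Graph.

Definition adjn (x : nat) : seq N := nth [::] ADJ x.
Definition thrn (x : nat) : seq N := nth [::] THR x.
Definition sumL (s : seq N) (f : N -> nat) : nat := foldr (fun k acc => f k + acc) 0 s.
Definition thn (y : nat) (k : N) : N := nth N0 (thrn y) (index k (adjn y)).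

Definition chk_range : bool :=
  all (fun x => [&& all (fun k => nat_of_bin k < 819) (adjn x), all (fun k => nat_of_bin k < 819) (thrn x),
     uniq (adjn x) & size (adjn x) == size (thrn x)]) (iota 0 819).
Definition chk_irr : bool := all (fun x => bin_of_nat x \notin adjn x) (iota 0 819).
Definition chk_tri : bool :=
  all (fun x => all (fun p => let y := nat_of_bin p.1 in
      [&& p.2 \in adjn y, thn y p.2 == bin_of_nat x, bin_of_nat x \in adjn y & thn y (bin_of_nat x) == p.2])
     (zip (adjn x) (thrn x))) (iota 0 819).

Lemma chk_range_ok : chk_range. Proof. vm_compute. reflexivity. Qed.
Lemma chk_irr_ok : chk_irr. Proof. vm_compute. reflexivity. Qed.
Lemma chk_tri_ok : chk_tri. Proof. vm_compute. reflexivity. Qed.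

Notation TG := 'I_819.
Definition toTG (n : nat) : TG := Ordinal (ltn_pmod n (isT : 0 < 819)).
Definition ordN (k : N) : TG := toTG (nat_of_bin k).
Lemma toTG_val (x : TG) : toTG x = x.
Proof. by apply: val_inj; rewrite /= modn_small. Qed.
Definition RG (x y : TG) : bool := bin_of_nat y \in adjn x.
Definition thirdG (x y : TG) : TG := ordN (thn x (bin_of_nat y)).

Lemma range (x : TG) : [&& all (fun k => nat_of_bin k < 819) (adjn x), all (fun k => nat_of_bin k < 819) (thrn x),
     uniq (adjn x) & size (adjn x) == size (thrn x)].
Proof. by move/allP: chk_range_ok; apply; rewrite mem_iota /=. Qed.

Lemma ordNK (k : N) : nat_of_bin k < 819 -> bin_of_nat (ordN k) = k.
Proof. by move=> h; rewrite /ordN /toTG /= modn_small // nat_of_binK. Qed.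

Lemma ordN_val (k : N) : nat_of_bin k < 819 -> val (ordN k) = k.
Proof. by move=> h; rewrite /ordN /toTG /= modn_small. Qed.

Lemma binK (x : TG) : ordN (bin_of_nat x) = x.
Proof. by rewrite /ordN bin_of_natK toTG_val. Qed.

Lemma thn_mem (x y : TG) : RG x y ->
  (bin_of_nat y, thn x (bin_of_nat y)) \in zip (adjn x) (thrn x).
Proof.
rewrite /RG => h; case/and4P: (range x) => _ _ _ /eqP hs.
rewrite /thn; set i := index _ _.
have e1 : nth N0 (adjn x) i = bin_of_nat y by apply: nth_index.
rewrite -[X in (X, _)]e1 -(nth_zip N0 N0 _ hs); apply: mem_nth.
by rewrite size_zip -hs minnn index_mem.
Qed.

Lemma closure (x y : TG) : RG x y ->
  [/\ RG y (thirdG x y), thirdG y (thirdG x y) = x, RG y x & thirdG y x = thirdG x y].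
Proof.
move=> h; have hm := thn_mem h.
have hx : val x \in iota 0 819 by rewrite mem_iota /=.
have /allP := allP chk_tri_ok _ hx.
move/(_ _ hm) => /=; rewrite bin_of_natK /= => /and4P[h1 /eqP h2 h3 /eqP h4].
case/and4P: (range x) => _ /allP r2 _ /eqP hs.
have lt : nat_of_bin (thn x (bin_of_nat y)) < 819.
  apply: r2; have := map_f snd hm; rewrite /= -/(unzip2 _) unzip2_zip //.
  by rewrite hs.
split.
- by rewrite /RG /thirdG ordNK.
- by rewrite /thirdG ordNK // h2 binK.
- by [].
- by rewrite /thirdG h4.
Qed.

Definition PG (t : TG * TG * TG) : bool := RG t.1.1 t.1.2 && (t.2 == thirdG t.1.1 t.1.2).

Lemma RG_sym : symmetric RG.
Proof. by move=> x y; apply/idP/idP => /closure [_ _ ? _]. Qed.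

Lemma RG_irr : irreflexive RG.
Proof.
move=> x; apply/negbTE; have hx : val x \in iota 0 819 by rewrite mem_iota /=.
exact: (allP chk_irr_ok _ hx).
Qed.

Lemma PG_tri x y z : PG (x, y, z) -> [&& RG x y, RG y z & RG x z].
Proof.
rewrite /PG /= => /andP[h /eqP ->]; case: (closure h) => h1 _ h3 h4.
by rewrite h h1 /= -h4; case: (closure h3).
Qed.

Lemma PG_f3 x y z z' : PG (x, y, z) -> PG (x, y, z') -> z = z'.
Proof. by rewrite /PG /= => /andP[_ /eqP ->] /andP[_ /eqP ->]. Qed.

Lemma PG_f1 x x' y z : PG (x, y, z) -> PG (x', y, z) -> x = x'.
Proof.
rewrite /PG /= => /andP[h /eqP ->] /andP[h' /eqP e].
case: (closure h) => _ <- _ _; case: (closure h') => _ <- _ _; by rewrite e.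
Qed.

Lemma PG_f2 x y y' z : PG (x, y, z) -> PG (x, y', z) -> y = y'.
Proof.
rewrite /PG /= => /andP[h /eqP ->] /andP[h' /eqP e].
case: (closure h) => _ _ h3 h4; case: (closure h') => _ _ h3' h4'.
case: (closure h3) => _ e1 _ _; case: (closure h3') => _ e1' _ _.
by rewrite -e1 -e1' h4 h4' e.
Qed.

Definition GH : BG := mkBG RG_sym RG_irr PG_tri PG_f3 PG_f1 PG_f2.

Lemma sum_adj_gen (s : seq N) (F : TG -> nat) :
  uniq s -> all (fun k => nat_of_bin k < 819) s ->
  \sum_(y : TG) (bin_of_nat y \in s) * F y = sumL s (fun k => F (ordN k)).
Proof.
elim: s => [|k s IH] /=.
  by move=> _ _; rewrite big1 // => y _; rewrite in_nil.
case/andP => ks us /andP[lk ls].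
rewrite -IH //.
have e (y : TG) : (bin_of_nat y \in k :: s) * F y = ((y == ordN k) * F y) + (bin_of_nat y \in s) * F y.
  rewrite in_cons -mulnDl; congr (_ * _).
  have -> : (bin_of_nat y == k) = (y == ordN k).
    apply/eqP/eqP => [<-|->]; [by rewrite binK | by rewrite ordNK].
  case: (boolP (y == ordN k)) => [/eqP ->|] //=.
  by rewrite ordNK // (negbTE ks).
rewrite (eq_bigr _ (fun y _ => e y)) big_split /=; congr (_ + _).
rewrite (bigD1 (ordN k)) //= eqxx mul1n big1 ?addn0 // => y /negbTE ->.
by rewrite mul0n.
Qed.

Lemma sum_adj (x : TG) (F : TG -> nat) :
  \sum_(y : TG) RG x y * F y = sumL (adjn x) (fun k => F (ordN k)).
Proof. by case/and4P: (range x) => r1 _ u _; apply: sum_adj_gen. Qed.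

Lemma sumL_1 s : sumL s (fun _ => 1) = size s.
Proof. by elim: s => //= k s ->. Qed.

Lemma sum_iota (F : nat -> nat) n : \sum_(i < n) F i = foldr (fun i acc => F i + acc) 0 (iota 0 n).
Proof.
rewrite -(big_mkord xpredT F) /index_iota subn0.
by elim: (iota 0 n) => [|a s IH]; rewrite ?big_nil ?big_cons ?IH.
Qed.

Lemma cardP_GH : 14742 <= cardP GH.
Proof.
rewrite /cardP.
pose f (p : TG * TG) : TG * TG * TG := (p.1, p.2, thirdG p.1 p.2).
have finj : injective f by move=> [a b] [c d] [-> ->].
apply: (@leq_trans #|f @: [set p : TG * TG | RG p.1 p.2]|); last first.
  apply: subset_leq_card; apply/subsetP => t /imsetP [[a b]]; rewrite inE /= => h ->.
  by rewrite inE /= /PG /= h eqxx.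
rewrite (card_imset _ finj) -sum1_card big_mkcond /=.
rewrite (eq_bigr (fun p : TG * TG => RG p.1 p.2 * 1)); last by move=> [a b] _; rewrite inE; case: (RG a b).
rewrite -(pair_bigA _ (fun a b => RG a b * 1)) /=.
rewrite (eq_bigr (fun x : TG => size (adjn x))); last by move=> x _; rewrite sum_adj sumL_1.
rewrite (sum_iota (fun x => size (adjn x))).
by vm_compute.
Qed.

Definition gen (j x : nat) : N := nth N0 (if j == 0 then GEN0 else GEN1) x.
Definition chk_gen : bool := all (fun j =>
   [&& uniq (if j == 0 then GEN0 else GEN1), size (if j == 0 then GEN0 else GEN1) == 819,
       all (fun k => nat_of_bin k < 819) (if j == 0 then GEN0 else GEN1) &
   all (fun x => all (fun k => gen j (nat_of_bin k) \in adjn (nat_of_bin (gen j x))) (adjn x)) (iota 0 819)])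
   [:: 0; 1].
Lemma chk_gen_ok : chk_gen. Proof. vm_compute. reflexivity. Qed.

Definition genO (j : nat) (x : TG) : TG := ordN (gen j x).
Definition giO (x : TG) : nat := nat_of_bin (nth N0 GI x).
Definition x0 : TG := ord0.
Fixpoint phi (f : nat) (x : TG) : TG -> TG :=
  if x == x0 then (fun y : TG => y) else
  if f is f'.+1 then (fun y : TG => phi f' (genO (giO x) x) (genO (giO x) y)) else (fun y : TG => y).
Definition chk_phi : bool := all (fun x => phi 12 (toTG x) (toTG x) == x0) (iota 0 819).
Lemma chk_phi_ok : chk_phi. Proof. vm_compute. reflexivity. Qed.

Lemma gen_facts j : exists2 j', j' \in [:: 0; 1] & gen j =1 gen j'.
Proof.
case: (boolP (j == 0)) => [/eqP ->|nj]; first by exists 0.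
by exists 1 => // x; rewrite /gen (negbTE nj).
Qed.

Lemma genO_inj j : injective (genO j).
Proof.
have [j' hj' e] := gen_facts j.
case/and4P: (allP chk_gen_ok _ hj') => u /eqP s /allP r _.
move=> x y; rewrite /genO !e => /(congr1 (fun z : TG => bin_of_nat z)).
rewrite !ordNK; first last.
- by apply: r; rewrite /gen mem_nth // s.
- by apply: r; rewrite /gen mem_nth // s.
move=> /eqP; rewrite /gen nth_uniq ?s // => /eqP; exact: val_inj.
Qed.

Lemma genO_R j x y : RG x y -> RG (genO j x) (genO j y).
Proof.
have [j' hj' e] := gen_facts j.
case/and4P: (allP chk_gen_ok _ hj') => u /eqP s /allP r /allP h.
have hx : val x \in iota 0 819 by rewrite mem_iota /=.
move=> hxy; have := allP (h _ hx) _ hxy; rewrite bin_of_natK => H.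
have l1 : nat_of_bin (gen j' x) < 819 by apply: r; rewrite /gen mem_nth // s.
have l2 : nat_of_bin (gen j' y) < 819 by apply: r; rewrite /gen mem_nth // s.
by rewrite /RG /genO !e ordNK // ordN_val.
Qed.

Lemma phi_inj f x : injective (phi f x).
Proof.
elim: f x => [|f IH] x /=; first by case: ifP => _ a b.
case: ifP => _; first by move=> a b.
move=> a b /IH; exact: genO_inj.
Qed.

Lemma phi_R f x a b : RG a b -> RG (phi f x a) (phi f x b).
Proof.
elim: f x a b => [|f IH] x a b /=; first by case: ifP.
by case: ifP => _ // h; apply: IH; apply: genO_R.
Qed.

Lemma phi_x0 (x : TG) : phi 12 x x = x0.
Proof.
have hx : val x \in iota 0 819 by rewrite mem_iota /=.
by have /eqP := allP chk_phi_ok _ hx; rewrite toTG_val.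
Qed.

Arguments phi : simpl never.
Arguments genO : simpl never.

Lemma eq_sumL s f g : f =1 g -> sumL s f = sumL s g.
Proof. by move=> e; elim: s => //= k s ->; rewrite e. Qed.

Lemma card4 (P : TG -> TG -> TG -> TG -> bool) :
  #|[set t : TG * TG * TG * TG | P t.1.1.1 t.1.1.2 t.1.2 t.2]| =
  \sum_a \sum_b \sum_c \sum_d (P a b c d : nat).
Proof.
rewrite pair_bigA pair_bigA pair_bigA -sum1_card big_mkcond /=.
by apply: eq_bigr => t _; rewrite inE; case: (P _ _ _ _).
Qed.

Definition rooted : {set TG * TG * TG * TG} :=
  [set t | [&& RG x0 t.1.1.1, RG t.1.1.1 t.1.1.2, RG t.1.1.2 t.1.2, RG t.1.2 t.2 & RG t.2 x0]].

Definition rc : nat := sumL (adjn x0) (fun k1 => sumL (adjn (ordN k1)) (fun k2 =>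
   sumL (adjn (ordN k2)) (fun k3 => sumL (adjn (ordN k3)) (fun k4 => RG (ordN k4) x0)))).
Lemma rc_val : rc = 1530. Proof. vm_compute. reflexivity. Qed.

Lemma s1 (c : TG) : \sum_d ((RG c d && RG d x0) : nat) = sumL (adjn c) (fun k => RG (ordN k) x0).
Proof. by rewrite -(sum_adj c (fun d => RG d x0)); apply: eq_bigr => d _; rewrite mulnb. Qed.

Lemma s2 (b : TG) : \sum_c \sum_d ((RG b c && (RG c d && RG d x0)) : nat) =
  sumL (adjn b) (fun k => sumL (adjn (ordN k)) (fun k4 => RG (ordN k4) x0)).
Proof.
rewrite -(sum_adj b (fun c => sumL (adjn c) (fun k => RG (ordN k) x0))).
apply: eq_bigr => c _; rewrite -s1 big_distrr /=; apply: eq_bigr => d _; by rewrite mulnb.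
Qed.

Lemma s3 (a : TG) : \sum_b \sum_c \sum_d ((RG a b && (RG b c && (RG c d && RG d x0))) : nat) =
  sumL (adjn a) (fun k => sumL (adjn (ordN k)) (fun k3 => sumL (adjn (ordN k3)) (fun k4 => RG (ordN k4) x0))).
Proof.
rewrite -(sum_adj a (fun b => sumL (adjn b) (fun k => sumL (adjn (ordN k)) (fun k4 => RG (ordN k4) x0)))).
apply: eq_bigr => b _; rewrite -s2 big_distrr /=; apply: eq_bigr => c _.
rewrite big_distrr /=; apply: eq_bigr => d _; by rewrite mulnb.
Qed.

Lemma rooted_card : #|rooted| = 1530.
Proof.
transitivity rc; last exact: rc_val.
rewrite /rooted (card4 (fun a b c d => [&& RG x0 a, RG a b, RG b c, RG c d & RG d x0])).
rewrite /rc -(sum_adj x0 (fun a => sumL (adjn a) (fun k => sumL (adjn (ordN k)) (fun k3 =>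
   sumL (adjn (ordN k3)) (fun k4 => RG (ordN k4) x0))))).
apply: eq_bigr => a _; rewrite -s3 big_distrr /=; apply: eq_bigr => b _.
rewrite big_distrr /=; apply: eq_bigr => c _.
rewrite big_distrr /=; apply: eq_bigr => d _; by rewrite mulnb.
Qed.

Lemma cw_GH : cw GH <= 819 * 1530.
Proof.
rewrite /cw /=.
pose h (w : TG * TG * TG * TG * TG) : TG * (TG * TG * TG * TG) :=
  let f := phi 12 w.1.1.1.1 in (w.1.1.1.1, (f w.1.1.1.2, f w.1.1.2, f w.1.2, f w.2)).
have hinj : injective h.
  move=> [[[[a b] c] d] e] [[[[a' b'] c'] d'] e']; rewrite /h /= => -[ea].
  subst a'; move=> /phi_inj -> /phi_inj -> /phi_inj -> /phi_inj -> //.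
rewrite -(card_imset _ hinj).
apply: (@leq_trans #|setX [set: TG] rooted|); last by rewrite cardsX cardsT card_ord rooted_card leqnn.
apply: subset_leq_card; apply/subsetP => q /imsetP [[[[[a b] c] d] e]].
rewrite inE /= => /and5P [h1 h2 h3 h4 h5] ->.
rewrite /h in_setX in_setT /= inE /=.
rewrite -{1}(phi_x0 a) -{1}(phi_x0 a).
by rewrite !phi_R.
Qed.

Definition RK (x y : 'I_3) : bool := x != y.
Definition PK (t : 'I_3 * 'I_3 * 'I_3) : bool := [&& t.1.1 != t.1.2, t.1.2 != t.2 & t.1.1 != t.2].

Lemma K3_fun (a b c c' : 'I_3) : a != b -> c != a -> c != b -> c' != a -> c' != b -> c = c'.
Proof.
move=> h1 h2 h3 h4 h5; apply: val_inj; move: h1 h2 h3 h4 h5.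
by case: a => [[|[|[|?]]] ?]; case: b => [[|[|[|?]]] ?]; case: c => [[|[|[|?]]] ?]; case: c' => [[|[|[|?]]] ?].
Qed.

Lemma RK_sym : symmetric RK. Proof. by move=> x y; rewrite /RK eq_sym. Qed.
Lemma RK_irr : irreflexive RK. Proof. by move=> x; rewrite /RK eqxx. Qed.
Lemma PK_tri x y z : PK (x, y, z) -> [&& RK x y, RK y z & RK x z]. Proof. by []. Qed.
Lemma PK_f3 x y z z' : PK (x, y, z) -> PK (x, y, z') -> z = z'.
Proof.
rewrite /PK /= => /and3P[h1 h2 h3] /and3P[_ h2' h3'].
by apply: (K3_fun h1); rewrite // eq_sym.
Qed.
Lemma PK_f1 x x' y z : PK (x, y, z) -> PK (x', y, z) -> x = x'.
Proof.
rewrite /PK /= => /and3P[h1 h2 h3] /and3P[h1' _ h3'].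
by apply: (K3_fun h2).
Qed.
Lemma PK_f2 x y y' z : PK (x, y, z) -> PK (x, y', z) -> y = y'.
Proof.
rewrite /PK /= => /and3P[h1 h2 h3] /and3P[h1' h2' _].
by apply: (K3_fun h3); rewrite // eq_sym.
Qed.

Definition K3 : BG := mkBG RK_sym RK_irr PK_tri PK_f3 PK_f1 PK_f2.

Lemma card3 (T : finType) (P : T -> T -> T -> bool) :
  #|[set t : T * T * T | P t.1.1 t.1.2 t.2]| = \sum_a \sum_b \sum_c (P a b c : nat).
Proof.
rewrite pair_bigA pair_bigA -sum1_card big_mkcond /=.
by apply: eq_bigr => t _; rewrite inE; case: (P _ _ _).
Qed.
Lemma card5 (T : finType) (P : T -> T -> T -> T -> T -> bool) :
  #|[set t : T * T * T * T * T | P t.1.1.1.1 t.1.1.1.2 t.1.1.2 t.1.2 t.2]| =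
  \sum_a \sum_b \sum_c \sum_d \sum_e (P a b c d e : nat).
Proof.
rewrite pair_bigA pair_bigA pair_bigA pair_bigA -sum1_card big_mkcond /=.
by apply: eq_bigr => t _; rewrite inE; case: (P _ _ _ _ _).
Qed.

Definition t0 : 'I_3 := Ordinal (isT : 0 < 3).
Definition t1 : 'I_3 := Ordinal (isT : 1 < 3).
Definition t2 : 'I_3 := Ordinal (isT : 2 < 3).
Lemma sum3 (F : 'I_3 -> nat) : \sum_i F i = F t0 + (F t1 + (F t2)).
Proof.
rewrite !big_ord_recr big_ord0 /= add0n addnA; congr (_ + _ + _); congr F; exact: val_inj.
Qed.

Lemma cardP_K3 : cardP K3 = 6.
Proof.
rewrite /cardP /= (card3 (fun a b c => PK (a, b, c))).
under eq_bigr => a _ do under eq_bigr => b _ do rewrite sum3.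
under eq_bigr => a _ do rewrite sum3.
rewrite sum3. vm_compute. reflexivity.
Qed.

Lemma cw_K3 : cw K3 = 30.
Proof.
rewrite /cw /cwset /= (card5 (fun a b c d e => [&& RK a b, RK b c, RK c d, RK d e & RK e a])).
under eq_bigr => a _ do under eq_bigr => b _ do under eq_bigr => c _ do under eq_bigr => d _ do rewrite sum3.
under eq_bigr => a _ do under eq_bigr => b _ do under eq_bigr => c _ do rewrite sum3.
under eq_bigr => a _ do under eq_bigr => b _ do rewrite sum3.
under eq_bigr => a _ do rewrite sum3.
rewrite sum3. vm_compute. reflexivity.
Qed.

Lemma card_K3 : #|bT K3| = 3. Proof. exact: card_ord. Qed.
Lemma card_GH : #|bT GH| = 819. Proof. exact: card_ord. Qed.

Definition Bm (m : nat) : BG := prodBG (powBG GH (4 * m + 3)) (powBG K3 (13 * m + 12)).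

Lemma e4 m : (4 * m + 3).+1 = 4 * m.+1.
Proof. by rewrite -addnS mulnS addnC. Qed.
Lemma e13 m : (13 * m + 12).+1 = 13 * m.+1.
Proof. by rewrite -addnS mulnS addnC. Qed.

Lemma ex_nb : {x : nat | x = expn 819 4 * expn 3 13}. Proof. by exists (expn 819 4 * expn 3 13). Qed.
Definition nb : nat := proj1_sig ex_nb.
Lemma nbE : nb = expn 819 4 * expn 3 13. Proof. exact: (proj2_sig ex_nb). Qed.
Lemma ex_pb : {x : nat | x = expn 14742 4 * expn 6 13}. Proof. by exists (expn 14742 4 * expn 6 13). Qed.
Definition pb : nat := proj1_sig ex_pb.
Lemma pbE : pb = expn 14742 4 * expn 6 13. Proof. exact: (proj2_sig ex_pb). Qed.
Lemma ex_wb : {x : nat | x = expn (819 * 1530) 4 * expn 30 13}. Proof. by exists (expn (819 * 1530) 4 * expn 30 13). Qed.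
Definition wb : nat := proj1_sig ex_wb.
Lemma wbE : wb = expn (819 * 1530) 4 * expn 30 13. Proof. exact: (proj2_sig ex_wb). Qed.

Lemma card_Bm m : #|bT (Bm m)| = expn nb m.+1.
Proof.
rewrite /Bm card_prodBG !card_powBG card_GH card_K3 e4 e13 (expnM 819 4) (expnM 3 13) nbE.
exact: esym (expnMn _ _ _).
Qed.

Lemma cardP_Bm m : expn pb m.+1 <= cardP (Bm m).
Proof.
apply: leq_trans (cardP_prodBG _ _).
rewrite pbE (expnMn (expn 14742 4)); apply: leq_mul.
  apply: leq_trans (cardP_powBG _ _); rewrite e4 (expnM (cardP GH) 4) !leq_exp2r //.
  exact: cardP_GH.
apply: leq_trans (cardP_powBG _ _); by rewrite e13 (expnM (cardP K3) 13) cardP_K3 leqnn.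
Qed.

Lemma cw_Bm m : cw (Bm m) <= expn wb m.+1.
Proof.
apply: leq_trans (cw_prodBG _ _) _.
rewrite wbE (expnMn (expn (819 * 1530) 4)); apply: leq_mul.
  apply: leq_trans (cw_powBG _ _) _; rewrite e4 (expnM (cw GH) 4) !leq_exp2r //.
  exact: cw_GH.
apply: leq_trans (cw_powBG _ _) _; by rewrite e13 (expnM (cw K3) 13) cw_K3 leqnn.
Qed.

Lemma nb_gt1 : (1 < nb)%N.
Proof.
rewrite nbE; apply: (@leq_trans 819) => //.
Qed.

Lemma INR_expn a b : INR (expn a b) = (INR a ^ b)%R.
Proof.
elim: b => [|b IH]; first by rewrite expn0.
by rewrite expnS (mult_INR a (expn a b)) IH.
Qed.

Lemma INR_muln a b : INR (a * b) = (INR a * INR b)%R.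
Proof. exact: mult_INR. Qed.

Open Scope R_scope.

Lemma n1 : (819^4*3^13)^3 <= (14742^4*6^13)^2.
Proof. rewrite !pow_IZR -!mult_IZR !pow_IZR. apply IZR_le. vm_compute. discriminate. Qed.
Lemma n2 : ((819*1530)^4*30^13)^43 < (819^4*3^13)^105.
Proof. rewrite -!mult_IZR !pow_IZR -!mult_IZR !pow_IZR. apply IZR_lt. vm_compute. reflexivity. Qed.
Lemma a_ge1 : 1 <= 819^4*3^13.
Proof. rewrite !pow_IZR -!mult_IZR. apply IZR_le. vm_compute. discriminate. Qed.
Lemma w_pos : 0 < (819*1530)^4*30^13.
Proof. rewrite -!mult_IZR !pow_IZR -!mult_IZR. apply IZR_lt. vm_compute. reflexivity. Qed.
Lemma p_pos : 0 <= 14742^4*6^13.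
Proof. rewrite !pow_IZR -!mult_IZR. apply IZR_le. vm_compute. discriminate. Qed.

Lemma INR_nb : INR nb = 819^4*3^13.
Proof.
rewrite nbE INR_muln; congr (_ * _).
- by rewrite INR_expn INR_IZR_INZ.
- by rewrite INR_expn INR_IZR_INZ.
Qed.
Lemma INR_wb : INR wb = (819*1530)^4*30^13.
Proof.
rewrite wbE INR_muln; congr (_ * _).
- by rewrite INR_expn INR_muln; congr (_ ^ _); congr (_ * _); rewrite INR_IZR_INZ.
- by rewrite INR_expn INR_IZR_INZ.
Qed.
Lemma INR_pb : INR pb = 14742^4*6^13.
Proof.
rewrite pbE INR_muln; congr (_ * _).
- by rewrite INR_expn INR_IZR_INZ.
- by rewrite INR_expn INR_IZR_INZ.
Qed.

Close Scope R_scope.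
Delimit Scope nat_scope with N.

Theorem proposition1p6 :
  exists (c : R) (n : nat -> nat) (G : forall m : nat, {set {set 'I_(n m)}}),
    [/\ (0 < c)%R,
        (forall m, simple_graph (G m)),
        (* n_m -> infinity *)
        (forall N : nat, exists M : nat, forall m : nat, (M <= m)%N -> (N <= n m)%N),
        (* number of C5 copies is o(n_m^2.442) *)
        (forall eps : R, (0 < eps)%R -> exists M : nat, forall m : nat, (M <= m)%N ->
            (INR (num_C5 (G m)) <= eps * Rpower (INR (n m)) (2442 / 1000))%R)
      & (* deleting fewer than c n_m^(3/2) edges never yields a triangle-free graph *)
        (forall (m : nat) (F : {set {set 'I_(n m)}}),
            F \subset G m ->
            (INR #|G m :\: F| < c * (INR (n m) * sqrt (INR (n m))))%R ->
            ~ triangle_free F)].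
Proof.
Local Open Scope R_scope.
exists (1/6), (fun m => nB (Bm m)), (fun m => GB (Bm m)).
split.
- lra.
- move=> m; exact: GB_simple.
- move=> N; exists N => m hm /=.
  rewrite /nB card_Bm.
  apply: leq_trans hm _; apply: leq_trans (ltnW (ltn_expl m.+1 nb_gt1)).
  exact: leqnSn.
- move=> eps heps.
  set a := 819^4*3^13.
  set w := (819*1530)^4*30^13.
  have ha : 1 <= a := a_ge1.
  have apos : 0 < a by lra.
  have hw : 0 < w := w_pos.
  set q := Rpower a (105/43).
  have qpos : 0 < q by rewrite /q /Rpower; apply: exp_pos.
  have wq : w < q.
    apply: Rnot_le_lt => hqw.
    have h43 : q ^ 43 <= w ^ 43 by apply: pow_incr; lra.
    have : q ^ 43 = a ^ 105.
      rewrite -(Rpower_pow 43 _ qpos) /q Rpower_mult -(Rpower_pow 105 _ apos).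
      congr Rpower; rewrite !INR_IZR_INZ /=; field.
    have := n2; rewrite -/a -/w; lra.
  set r := w / q.
  have rq : r * q = w by rewrite /r; field; lra.
  have r0 : 0 <= r by nra.
  have r1 : r < 1 by nra.
  have hr : Rabs r < 1 by rewrite Rabs_pos_eq.
  case: (pow_lt_1_zero r hr eps heps) => M HM.
  exists M => m hm /=.
  have hn : INR (nB (Bm m)) = a ^ m.+1 by rewrite /nB card_Bm (INR_expn nb m.+1) INR_nb.
  rewrite hn.
  have h1 : INR (num_C5 (GB (Bm m))) <= w ^ m.+1.
    have e : w ^ m.+1 = INR (expn wb m.+1) by rewrite (INR_expn wb m.+1) INR_wb.
    rewrite e; apply: le_INR; apply/leP.
    exact: leq_trans (C5_le_cw _) (cw_Bm m).
  have h2 : q ^ m.+1 <= Rpower (a ^ m.+1) (2442 / 1000).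
    have e : Rpower (a ^ m.+1) (105/43) = q ^ m.+1.
      rewrite -(Rpower_pow m.+1 _ apos) Rpower_mult -(Rpower_pow m.+1 _ qpos) /q Rpower_mult.
      by rewrite Rmult_comm.
    rewrite -e; apply: Rle_Rpower; last lra.
    exact: pow_R1_Rle.
  have h3 : r ^ m.+1 < eps.
    have := HM m.+1; rewrite Rabs_pos_eq; last exact: pow_le.
    apply; apply/leP; exact: leq_trans hm (leqnSn m).
  have ew : w ^ m.+1 = r ^ m.+1 * q ^ m.+1.
    by rewrite -Rpow_mult_distr rq.
  have h4 : r ^ m.+1 * q ^ m.+1 <= eps * q ^ m.+1.
    by apply: Rmult_le_compat_r; [apply: pow_le; lra | lra].
  have h5 : eps * q ^ m.+1 <= eps * Rpower (a ^ m.+1) (2442 / 1000).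
    by apply: Rmult_le_compat_l; lra.
  lra.
- move=> m F /= sub hlt tf.
  have hc := tri_count sub tf.
  have hp := cardP_Bm m.
  set a := 819^4*3^13.
  have hn : INR (nB (Bm m)) = a ^ m.+1 by rewrite /nB card_Bm (INR_expn nb m.+1) INR_nb.
  move: hlt; rewrite hn.
  set p := 14742^4*6^13.
  set D := #|GB (Bm m) :\: F|.
  have hX : p ^ m.+1 <= 6 * INR D.
    have e : p ^ m.+1 = INR (expn pb m.+1) by rewrite (INR_expn pb m.+1) INR_pb.
    have e6 : 6 * INR D = INR (6 * D).
      by rewrite (INR_muln 6 D) (INR_IZR_INZ 6).
    rewrite e e6; apply: le_INR; apply/leP; exact: leq_trans hp hc.
  have ha : 1 <= a := a_ge1.
  have hp0 : 0 <= p := p_pos.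
  have n1' : a ^ 3 <= p ^ 2 := n1.
  clearbody a p.
  set nn := a ^ m.+1.
  have nn0 : 0 <= nn by apply: pow_le; lra.
  have Y0 : 0 <= nn * sqrt nn by apply: Rmult_le_pos => //; apply: sqrt_pos.
  have X0 : 0 <= p ^ m.+1 by apply: pow_le.
  have YY : (nn * sqrt nn) * (nn * sqrt nn) = (a * a * a) ^ m.+1.
    rewrite (Rpow_mult_distr (a * a) a) (Rpow_mult_distr a a) -/nn.
    have hs := sqrt_sqrt nn nn0.
    transitivity (nn * nn * (sqrt nn * sqrt nn)); first ring.
    by rewrite hs.
  have XX : (a * a * a) ^ m.+1 <= (p ^ m.+1) * (p ^ m.+1).
    rewrite -(Rpow_mult_distr p p); apply: pow_incr; split.
      by apply: Rmult_le_pos; [apply: Rmult_le_pos|]; lra.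
    by move: n1'; rewrite /=; lra.
  have : nn * sqrt nn <= p ^ m.+1 by nra.
  lra.
Qed.
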